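(* Consider the piecewise smooth vector field $X$ below. If $a_1+a_2+a_3+a_4\neq0$ and $\alpha^*:=-\dfrac{2(b_1-b_2-b_3+b_4)}{a_1+a_2+a_3+a_4}>0$, then for $|\varepsilon|\neq0$ sufficiently small $X$ has an isolated periodic orbit crossing the discontinuity set $\{uv=0\}$ and passing through a point at distance $\mathcal O(\varepsilon)$ from $(\alpha^*,0,0)$ (equivalently, $\alpha^*$ is a simple zero of the first order bifurcation function $f_1(\alpha)=\frac12\alpha\big(\alpha(a_1+a_2+a_3+a_4)+2(b_1-b_2-b_3+b_4)\big)$).
   Context: Let $a_j,b_j,c_j,d_j\in\mathbb R$, $j=1,\dots,4$. The vector field on $\mathbb R^3$ (coordinates $(u,v,w)$) is $X=X_1$ on $\{u>0,v>0\}$, $X_2$ on $\{u<0,v>0\}$, $X_3$ on $\{u<0,v<0\}$, $X_4$ on $\{u>0,v<0\}$, where $X_1=(-1+\varepsilon(a_1u+b_1),\,1,\,-w+\varepsilon(c_1u+d_1))$, $X_2=(-1+\varepsilon(a_2u+b_2),\,-1,\,-w+\varepsilon(c_2u+d_2))$, $X_3=(1+\varepsilon(a_3u+b_3),\,-1,\,-w+\varepsilon(c_3u+d_3))$, $X_4=(1+\varepsilon(a_4u+b_4),\,1,\,-w+\varepsilon(c_4u+d_4))$. Trajectories follow Filippov's convention (crossing by concatenation). For $\varepsilon=0$ the plane $w=0$ is filled by the periodic orbits $|u|+|v|=\alpha$, $\alpha>0$. *)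

(* Defs.v *)
From Stdlib Require Import Reals Lra List.
Open Scope R_scope.

(* Parameters a_j, b_j, c_j, d_j are given as functions nat -> R, only the
   indices j = 1..4 are used. *)

Definition su (j : nat) : R :=
  match j with 1%nat | 2%nat => -1 | _ => 1 end.
Definition sv (j : nat) : R :=
  match j with 1%nat | 4%nat => 1 | _ => -1 end.

Definition Xu (a b : nat -> R) (eps : R) (j : nat) (u : R) : R :=
  su j + eps * (a j * u + b j).
Definition Xv (j : nat) : R := sv j.
Definition Xw (c d : nat -> R) (eps : R) (j : nat) (u w : R) : R :=
  - w + eps * (c j * u + d j).

Definition in_region (j : nat) (u v : R) : Prop :=
  match j with
  | 1%nat => 0 < u /\ 0 < v
  | 2%nat => u < 0 /\ 0 < v
  | 3%nat => u < 0 /\ v < 0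
  | 4%nat => 0 < u /\ v < 0
  | _ => False
  end.

(* A periodic orbit of the piecewise smooth field X (Filippov, crossing by
   concatenation): a continuous, T-periodic curve (T > 0) which meets the
   discontinuity set {uv = 0} only at finitely many times per period, and which
   outside of those times solves the ODE of the field of the quadrant it is in. *)
Definition periodic_orbit (a b c d : nat -> R) (eps : R)
    (gu gv gw : R -> R) : Prop :=
  (forall t, continuity_pt gu t /\ continuity_pt gv t /\ continuity_pt gw t) /\
  exists T : R, 0 < T /\
    (forall t, gu (t + T) = gu t /\ gv (t + T) = gv t /\ gw (t + T) = gw t) /\
    (exists L : list R, forall t, 0 <= t <= T -> gu t * gv t = 0 -> In t L) /\
    (forall t j, in_region j (gu t) (gv t) ->
       derivable_pt_lim gu t (Xu a b eps j (gu t)) /\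
       derivable_pt_lim gv t (Xv j) /\
       derivable_pt_lim gw t (Xw c d eps j (gu t) (gw t))).

Definition dist3 (x1 y1 z1 x2 y2 z2 : R) : R :=
  sqrt ((x1 - x2)^2 + (y1 - y2)^2 + (z1 - z2)^2).

Definition on_orbit (gu gv gw : R -> R) (x y z : R) : Prop :=
  exists t, gu t = x /\ gv t = y /\ gw t = z.

(* Isolated: some neighbourhood (radius r) of the orbit contains no other
   periodic orbit (i.e. every periodic orbit lying inside it has the same image). *)
Definition isolated_periodic_orbit (a b c d : nat -> R) (eps : R)
    (gu gv gw : R -> R) : Prop :=
  periodic_orbit a b c d eps gu gv gw /\
  exists r : R, 0 < r /\
    forall hu hv hw : R -> R,
      periodic_orbit a b c d eps hu hv hw ->
      (forall s, exists t, dist3 (hu s) (hv s) (hw s) (gu t) (gv t) (gw t) < r) ->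
      forall x y z, on_orbit hu hv hw x y z <-> on_orbit gu gv gw x y z.

Definition alpha_star (a b : nat -> R) : R :=
  - (2 * (b 1%nat - b 2%nat - b 3%nat + b 4%nat)) /
    (a 1%nat + a 2%nat + a 3%nat + a 4%nat).

(* Main.v *)
Require Import Defs.
From Stdlib Require Import Reals Lra Lia List Classical ZArith.
From Coquelicot Require Import Coquelicot.
Open Scope R_scope.

Definition Ef (q x : R) : R := if Req_EM_T q 0 then x else (exp (q*x) - 1)/q.

Lemma Ef_deriv q x : derivable_pt_lim (Ef q) x (exp (q*x)).
Proof.
  apply is_derive_Reals. unfold Ef; destruct (Req_EM_T q 0) as [->|Hq].
  - rewrite Rmult_0_l, exp_0. auto_derive; auto.
  - auto_derive; auto. field. auto.
Qed.

Lemma Ef_cont q x : continuity_pt (Ef q) x.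
Proof. apply derivable_continuous_pt. exists (exp (q*x)). apply Ef_deriv. Qed.

Lemma Ef_0 q : Ef q 0 = 0.
Proof. unfold Ef; destruct (Req_EM_T q 0). auto. rewrite Rmult_0_r, exp_0. field; auto. Qed.

Lemma exp_le_inv x y : exp x <= exp y -> x <= y.
Proof. intros H. destruct (Rle_dec x y); auto. assert (exp y < exp x) by (apply exp_increasing; lra). lra. Qed.

Lemma exp_le_mono x y : x <= y -> exp x <= exp y.
Proof. intros H. destruct H. left; apply exp_increasing; auto. subst; lra. Qed.

Lemma Ef_incr q x y : x < y -> Ef q x < Ef q y.
Proof.
  intros H. unfold Ef; destruct (Req_EM_T q 0) as [->|Hq]; auto.
  destruct (Rlt_dec 0 q).
  - assert (exp (q*x) < exp (q*y)) by (apply exp_increasing; nra).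
    apply Rmult_lt_compat_r; [apply Rinv_0_lt_compat; lra| lra].
  - assert (q < 0) by lra.
    assert (exp (q*y) < exp (q*x)) by (apply exp_increasing; nra).
    assert (0 < (exp (q*x) - exp (q*y)) * / (-q)).
    { apply Rmult_lt_0_compat. lra. apply Rinv_0_lt_compat; lra. }
    apply Rminus_gt_0_lt. replace ((exp (q * y) - 1) / q - (exp (q * x) - 1) / q) with
      ((exp (q*x) - exp (q*y)) * / (-q)) by (field; lra). lra.
Qed.

Lemma Ef_le q x y : x <= y -> Ef q x <= Ef q y.
Proof. intros [H|H]. left; apply Ef_incr; auto. subst; lra. Qed.

Lemma Ef_incr_inv q x y : Ef q x < Ef q y -> x < y.
Proof. intros H. destruct (Rlt_dec x y); auto. assert (Ef q y <= Ef q x) by (apply Ef_le; lra). lra. Qed.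

Lemma Ef_inj q x y : Ef q x = Ef q y -> x = y.
Proof. intros H. destruct (Rtotal_order x y) as [h|[h|h]]; auto.
  apply (Ef_incr q) in h; lra. apply (Ef_incr q) in h; lra. Qed.

Lemma Ef_pos q x : 0 < x -> 0 < Ef q x.
Proof. intros. rewrite <- (Ef_0 q). apply Ef_incr; auto. Qed.
Lemma Ef_neg q x : x < 0 -> Ef q x < 0.
Proof. intros. rewrite <- (Ef_0 q). apply Ef_incr; auto. Qed.

Lemma Ef_mvt q x y : x < y -> exists xi, x < xi < y /\ Ef q y - Ef q x = (y - x) * exp (q * xi).
Proof.
  intros H. destruct (MVT_cor2 (Ef q) (fun t => exp (q*t)) x y H) as [c [Hc1 Hc2]].
  intros; apply Ef_deriv. exists c; split; auto. rewrite Hc1; ring.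
Qed.

Lemma exp_ge_1plus x : 1 + x <= exp x.
Proof. apply exp_ineq1_le. Qed.

Lemma exp_le_inv1 x : x < 1 -> exp x <= / (1 - x).
Proof.
  intros H. assert (h := exp_ge_1plus (-x)). rewrite exp_Ropp in h.
  assert (0 < exp x) by apply exp_pos.
  apply Rmult_le_reg_r with (1-x). lra. rewrite Rinv_l by lra.
  apply Rmult_le_reg_r with (/ exp x). apply Rinv_0_lt_compat; auto.
  rewrite Rmult_1_l. replace (exp x * (1-x) * / exp x) with (1-x) by (field; lra). lra.
Qed.

Lemma exp_small x : Rabs x <= /2 -> Rabs (exp x - 1) <= 2 * Rabs x.
Proof.
  intros H. assert (h1 := exp_ge_1plus x).
  destruct (Rle_dec 0 x).
  - assert (h2 := exp_le_inv1 x ltac:(apply Rabs_le_between in H; lra)).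
    rewrite Rabs_right by lra. rewrite Rabs_right in H |- * by lra.
    assert (/ (1-x) <= 1 + 2*x).
    { apply Rmult_le_reg_r with (1-x). lra. rewrite Rinv_l by lra. nra. }
    lra.
  - rewrite Rabs_left in H by lra. rewrite (Rabs_left x) by lra.
    assert (exp x < 1) by (rewrite <- exp_0; apply exp_increasing; lra).
    rewrite Rabs_left by lra. lra.
Qed.

Lemma ln_le_x x : 0 < 1 + x -> ln (1 + x) <= x.
Proof.
  intros H. apply exp_le_inv. rewrite exp_ln by auto. apply exp_ge_1plus.
Qed.

Lemma ln_ge x : Rabs x <= /2 -> x - 2 * x^2 <= ln (1 + x).
Proof.
  intros H. apply Rabs_le_between in H.
  assert (h : ln (/ (1 + x)) <= - x / (1 + x)).
  { replace (/ (1+x)) with (1 + (- x / (1+x))) by (field; lra). apply ln_le_x.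
    replace (1 + - x / (1 + x)) with (/ (1+x)) by (field; lra). apply Rinv_0_lt_compat; lra. }
  rewrite ln_Rinv in h by lra.
  assert (x / (1+x) >= x - 2 * x^2).
  { apply Rle_ge. apply Rmult_le_reg_r with (1+x). lra.
    replace (x / (1+x) * (1+x)) with x by (field; lra). nra. }
  unfold Rdiv in *. lra.
Qed.

Lemma ln_approx x : Rabs x <= /2 -> Rabs (ln (1 + x) - x) <= 2 * x^2.
Proof.
  intros H. assert (h1 := ln_ge x H). assert (h2 := ln_le_x x ltac:(apply Rabs_le_between in H; lra)).
  apply Rabs_le_between. split; nra.
Qed.

Lemma exp_sum_ge2 s : 2 <= exp s + exp (-s).
Proof.
  assert (h : exp s * exp (-s) = 1) by (rewrite <- exp_plus; replace (s + -s) with 0 by ring; apply exp_0).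
  assert (0 < exp s) by apply exp_pos. assert (0 < exp (-s)) by apply exp_pos.
  assert (exp s * (exp s + exp (-s) - 2) = (exp s - 1)^2).
  { replace (exp s * (exp s + exp (-s) - 2)) with (exp s * exp s + exp s * exp(-s) - 2 * exp s) by ring.
    rewrite h. ring. }
  assert (0 <= (exp s - 1)^2) by apply pow2_ge_0.
  destruct (Rle_dec 2 (exp s + exp (-s))) as [|n]; auto. apply Rnot_le_lt in n. nra.
Qed.

Lemma sh_lower s : 0 <= s -> 2 * s <= exp s - exp (-s).
Proof.
  intros H. destruct H as [H|H]; [|subst; rewrite Ropp_0; lra].
  destruct (MVT_cor2 (fun t => exp t - exp (-t) - 2*t) (fun t => exp t + exp (-t) - 2) 0 s H) as [c [Hc _]].
  { intros c _. apply is_derive_Reals. auto_derive; auto. ring. }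
  assert (h := exp_sum_ge2 c). rewrite Ropp_0, exp_0 in Hc. nra.
Qed.

Lemma sh_tanh s : 0 <= s -> exp s - exp (-s) <= s * (exp s + exp (-s)).
Proof.
  intros H. destruct H as [H|H]; [|subst; rewrite Ropp_0; lra].
  destruct (MVT_cor2 (fun t => t * (exp t + exp (-t)) - (exp t - exp (-t))) (fun t => t * (exp t - exp (-t))) 0 s H) as [c [Hc [Hc1 Hc2]]].
  { intros c _. apply is_derive_Reals. auto_derive; auto. ring. }
  assert (exp (-c) < exp c) by (apply exp_increasing; lra).
  rewrite Ropp_0, exp_0 in Hc.
  assert (0 <= c*(exp c - exp(-c))*(s-0)) by (apply Rmult_le_pos; [apply Rmult_le_pos|]; lra). lra.
Qed.

Lemma exp_half_le2 : exp (/2) <= 2.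
Proof.
  assert (h : exp (/2) * exp (/2) = exp 1) by (rewrite <- exp_plus; f_equal; field).
  assert (h3 := exp_le_3). assert (0 < exp (/2)) by apply exp_pos. nra.
Qed.

Lemma ch_bound s : Rabs s <= 1 -> exp s + exp (-s) <= 2 + 9/4 * s^2.
Proof.
  intros H.
  assert (Hsq : exp s + exp (-s) - 2 = (exp (s/2) - exp (-(s/2)))^2).
  { replace s with (s/2 + s/2) at 1 by field. replace (-s) with (-(s/2) + -(s/2)) at 1 by field.
    rewrite !exp_plus. assert (exp (s/2) * exp (-(s/2)) = 1).
    { rewrite <- exp_plus. replace (s / 2 + - (s / 2)) with 0 by ring. apply exp_0. } nra. }
  assert (Hb : forall u, 0 <= u <= /2 -> 0 <= exp u - exp (-u) <= 3 * u).
  { intros u Hu. split. assert (exp (-u) <= exp u) by (apply exp_le_mono; lra). lra.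
    assert (h1 := sh_tanh u ltac:(lra)). assert (exp u <= 2).
    { apply Rle_trans with (exp (/2)). apply exp_le_mono; lra. apply exp_half_le2. }
    assert (exp (-u) <= 1) by (rewrite <- exp_0; apply exp_le_mono; lra). nra. }
  apply Rabs_le_between in H.
  destruct (Rle_dec 0 s).
  - destruct (Hb (s/2)) as [h1 h2]. lra.
    assert ((exp (s/2) - exp (-(s/2)))^2 <= (3*(s/2))^2) by (apply pow_incr; lra). nra.
  - destruct (Hb (-(s/2))) as [h1 h2]. lra. rewrite Ropp_involutive in h1, h2.
    assert ((exp (-(s/2)) - exp (s/2))^2 <= (3*(-(s/2)))^2) by (apply pow_incr; lra). nra.
Qed.

Lemma Ef_expand q x : Rabs (q * x) <= 2 ->
  exists th, 0 <= th <= 1 /\ Ef q x = x * exp (q * x / 2 + th * (q * x)^2 / 2).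
Proof.
  intros H. unfold Ef. destruct (Req_EM_T q 0) as [->|Hq].
  { exists 0. split. lra. replace (exp _) with 1. ring. rewrite <- exp_0; f_equal; field. }
  destruct (Req_EM_T x 0) as [->|Hx].
  { exists 0. split. lra. rewrite Rmult_0_r, exp_0. field. auto. }
  set (t := q * x). assert (Ht : t <> 0) by (unfold t; intro h; apply Rmult_integral in h; tauto).
  set (s := t / 2). set (R0 := (exp s - exp (-s)) / (2 * s)).
  assert (Hs : Rabs s <= 1) by (unfold s; unfold Rdiv; rewrite Rabs_mult, Rabs_inv, (Rabs_right 2) by lra; fold t in H; lra).
  assert (HsZ : s <> 0) by (unfold s; lra).
  assert (HR : 1 <= R0 <= 1 + 9/8 * s^2).
  { unfold R0. assert (hc := ch_bound s Hs). destruct (Rle_dec 0 s).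
    - assert (0 < s) by lra. assert (h1 := sh_lower s r). assert (h2 := sh_tanh s r).
      split; apply Rmult_le_reg_r with (2*s); try lra;
      replace ((exp s - exp (-s)) / (2 * s) * (2 * s)) with (exp s - exp (-s)) by (field; lra); nra.
    - assert (0 < -s) by lra. assert (h1 := sh_lower (-s) ltac:(lra)). assert (h2 := sh_tanh (-s) ltac:(lra)).
      rewrite Ropp_involutive in h1, h2.
      replace ((exp s - exp (-s)) / (2 * s)) with ((exp (-s) - exp s) / (2 * (-s))) by (field; lra).
      split; apply Rmult_le_reg_r with (2*(-s)); try lra;
      replace ((exp (-s) - exp s) / (2 * -s) * (2 * -s)) with (exp (-s) - exp s) by (field; lra); nra. }
  exists (ln R0 / (t^2/2)).
  assert (Hl0 : 0 <= ln R0).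
  { destruct (Req_dec R0 1) as [->|]. rewrite ln_1; lra. left. rewrite <- ln_1. apply ln_increasing; lra. }
  assert (Hl1 : ln R0 <= R0 - 1).
  { replace R0 with (1 + (R0 - 1)) at 1 by ring. apply ln_le_x. lra. }
  assert (0 < t^2) by (apply pow2_gt_0; auto).
  split. split.
  - apply Rmult_le_pos; auto. apply Rlt_le, Rinv_0_lt_compat; lra.
  - apply Rmult_le_reg_r with (t^2/2). lra. unfold Rdiv at 1. rewrite Rmult_assoc, Rinv_l by lra.
    unfold s in HR. nra.
  - replace (ln R0 / (t ^ 2 / 2) * t ^ 2 / 2) with (ln R0) by (field; auto).
    rewrite exp_plus, exp_ln by lra.
    assert (E1 : exp t = exp s * exp s) by (rewrite <- exp_plus; f_equal; unfold s; field).
    assert (E2 : exp s * exp (-s) = 1) by (rewrite <- exp_plus; replace (s + -s) with 0 by ring; apply exp_0).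
    assert (E3 : 2 * s = q * x) by (unfold s, t; field).
    unfold R0. replace (t/2) with s by reflexivity. rewrite E1, E3.
    replace (exp s * exp s - 1) with (exp s * (exp s - exp (-s))) by (rewrite Rmult_minus_distr_l, E2; ring).
    field. split; auto.
Qed.

Lemma Rabs_mult_le x y X Y : Rabs x <= X -> Rabs y <= Y -> Rabs (x*y) <= X*Y.
Proof.
  intros h1 h2. rewrite Rabs_mult. apply Rmult_le_compat; auto; apply Rabs_pos.
Qed.

Lemma ratio_core e be al de Ab A1 A2 A3 A4 B1 B2 B3 B4 x1 x2 x3 x4 :
  Rabs A1 <= Ab -> Rabs A2 <= Ab -> Rabs A3 <= Ab -> Rabs A4 <= Ab ->
  Rabs B1 <= Ab -> Rabs B2 <= Ab -> Rabs B3 <= Ab -> Rabs B4 <= Ab ->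
  1 <= Ab -> Rabs e * Ab <= /2 ->
  be = B1 - B2 - B3 + B4 -> al * (A1 + A2 + A3 + A4) = -2 * be ->
  4 * Ab * de <= Rabs be / 4 -> 8 * Rabs e * Ab^2 <= Rabs be / 4 ->
  Rabs (x1 - al) <= de -> Rabs (x2 - al) <= de -> Rabs (x3 - al) <= de -> Rabs (x4 - al) <= de ->
  Rabs (ln (1 + - e * B2) + ln (1 + e * B4) - ln (1 + e * B3) - ln (1 + - e * B1)
        + e * (A2 * x1 + A3 * x2 + A4 * x3 + A1 * x4) + e * be) <= Rabs e * Rabs be / 2.
Proof.
  intros hA1 hA2 hA3 hA4 hB1 hB2 hB3 hB4 hAb he hbe hal hde hee h1 h2 h3 h4.
  assert (L : forall B, Rabs B <= Ab -> Rabs (ln (1 + e*B) - e*B) <= 2 * (Rabs e * Ab)^2).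
  { intros B hB. assert (Rabs (e*B) <= Rabs e * Ab) by (rewrite Rabs_mult; apply Rmult_le_compat_l; auto; apply Rabs_pos).
    eapply Rle_trans. apply ln_approx. lra.
    apply Rmult_le_compat_l. lra. rewrite <- (pow2_abs (e*B)) at 1. apply pow_incr. split; auto. apply Rabs_pos. }
  assert (L' : forall B, Rabs B <= Ab -> Rabs (ln (1 + - e*B) + e*B) <= 2 * (Rabs e * Ab)^2).
  { intros B hB. replace (-e*B) with (e * (-B)) by ring. replace (e*B) with (- (e * -B)) by ring.
    apply L. rewrite Rabs_Ropp; auto. }
  assert (M : forall A x, Rabs A <= Ab -> Rabs (x - al) <= de -> Rabs (e * (A * (x - al))) <= Rabs e * (Ab * de)).
  { intros A x hA hx. rewrite Rabs_mult. apply Rmult_le_compat_l. apply Rabs_pos. apply Rabs_mult_le; auto. }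
  assert (k1 := L' B2 hB2). assert (k2 := L B4 hB4). assert (k3 := L B3 hB3). assert (k4 := L' B1 hB1).
  assert (m1 := M A2 x1 hA2 h1). assert (m2 := M A3 x2 hA3 h2). assert (m3 := M A4 x3 hA4 h3). assert (m4 := M A1 x4 hA1 h4).
  set (err := ln (1 + - e * B2) + ln (1 + e * B4) - ln (1 + e * B3) - ln (1 + - e * B1)
        + e * (A2 * x1 + A3 * x2 + A4 * x3 + A1 * x4) + e * be).
  assert (Herr : err = (ln (1 + - e * B2) + e*B2) + (ln (1 + e * B4) - e*B4) - (ln (1 + e * B3) - e*B3)
     - (ln (1 + - e * B1) + e * B1) + e * (A2 * (x1 - al)) + e * (A3 * (x2-al)) + e * (A4 * (x3-al)) + e * (A1 * (x4 - al))).
  { unfold err. replace (e * (A2 * x1 + A3 * x2 + A4 * x3 + A1 * x4)) with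
      (e * (A2 * (x1 - al)) + e * (A3 * (x2-al)) + e * (A4 * (x3-al)) + e * (A1 * (x4 - al)) + e * (al * (A1+A2+A3+A4))) by ring.
    rewrite hal, hbe. ring. }
  rewrite Herr.
  assert (Hsq : 2 * (Rabs e * Ab)^2 <= Rabs e * (Rabs be / 16)).
  { assert (0 <= Rabs e) by apply Rabs_pos. nra. }
  assert (Hde : Rabs e * (Ab * de) <= Rabs e * (Rabs be / 16)).
  { apply Rmult_le_compat_l. apply Rabs_pos. lra. }
  apply Rabs_le_between in k1, k2, k3, k4, m1, m2, m3, m4.
  apply Rabs_le_between. assert (0 <= Rabs e * Rabs be) by (apply Rmult_le_pos; apply Rabs_pos).
  split; lra.
Qed.

Definition qq (a : nat -> R) (e : R) (j : nat) : R := e * a j.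
Definition pp (b : nat -> R) (e : R) (j : nat) : R := su j + e * b j.
Definition EqI a b e Y Z := pp b e 2 * Ef (qq a e 2) Y = pp b e 3 * Ef (qq a e 3) (- Z).
Definition EqII a b e Z Y := pp b e 4 * Ef (qq a e 4) Z = pp b e 1 * Ef (qq a e 1) (- Y).
Definition sa (a : nat -> R) := a 1%nat + a 2%nat + a 3%nat + a 4%nat.
Definition beta (b : nat -> R) := b 1%nat - b 2%nat - b 3%nat + b 4%nat.
Definition Ab (a b : nat -> R) := 1 + Rabs (a 1%nat) + Rabs (a 2%nat) + Rabs (a 3%nat) + Rabs (a 4%nat)
  + Rabs (b 1%nat) + Rabs (b 2%nat) + Rabs (b 3%nat) + Rabs (b 4%nat).

Lemma Ab_bounds a b : 1 <= Ab a b /\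
  Rabs (a 1%nat) <= Ab a b /\ Rabs (a 2%nat) <= Ab a b /\ Rabs (a 3%nat) <= Ab a b /\ Rabs (a 4%nat) <= Ab a b /\
  Rabs (b 1%nat) <= Ab a b /\ Rabs (b 2%nat) <= Ab a b /\ Rabs (b 3%nat) <= Ab a b /\ Rabs (b 4%nat) <= Ab a b.
Proof.
  unfold Ab. assert (h1 := Rabs_pos (a 1%nat)). assert (h2 := Rabs_pos (a 2%nat)).
  assert (h3 := Rabs_pos (a 3%nat)). assert (h4 := Rabs_pos (a 4%nat)).
  assert (h5 := Rabs_pos (b 1%nat)). assert (h6 := Rabs_pos (b 2%nat)).
  assert (h7 := Rabs_pos (b 3%nat)). assert (h8 := Rabs_pos (b 4%nat)). repeat split; lra.
Qed.

Lemma alpha_beta a b : sa a <> 0 -> alpha_star a b * sa a = -2 * beta b.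
Proof. intros H. unfold alpha_star, sa, beta in *. field. auto. Qed.

Lemma beta_nz a b : sa a <> 0 -> 0 < alpha_star a b -> beta b <> 0.
Proof. intros H1 H2 H3. unfold alpha_star in H2. unfold beta in H3. rewrite H3 in H2.
  replace (- (2 * 0) / (a 1%nat + a 2%nat + a 3%nat + a 4%nat)) with 0 in H2 by (field; auto). lra. Qed.

Lemma p_signs a b e : Rabs e * Ab a b <= /2 ->
  pp b e 1 <= -/2 /\ pp b e 2 <= -/2 /\ /2 <= pp b e 3 /\ /2 <= pp b e 4 /\
  Rabs (e * b 1%nat) <= /2 /\ Rabs (e * b 2%nat) <= /2 /\ Rabs (e * b 3%nat) <= /2 /\ Rabs (e * b 4%nat) <= /2.
Proof.
  intros H. destruct (Ab_bounds a b) as (h0 & _ & _ & _ & _ & h1 & h2 & h3 & h4).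
  assert (G : forall B, Rabs B <= Ab a b -> Rabs (e * B) <= /2).
  { intros B hB. rewrite Rabs_mult. apply Rle_trans with (Rabs e * Ab a b); auto.
    apply Rmult_le_compat_l; auto. apply Rabs_pos. }
  assert (k1 := G _ h1). assert (k2 := G _ h2). assert (k3 := G _ h3). assert (k4 := G _ h4).
  unfold pp, su. apply Rabs_le_between in k1, k2, k3, k4. repeat split; try lra; apply Rabs_le_between; lra.
Qed.

Lemma pp1 b e : pp b e 1 = -1 + e * b 1%nat. Proof. reflexivity. Qed.
Lemma pp2 b e : pp b e 2 = -1 + e * b 2%nat. Proof. reflexivity. Qed.
Lemma pp3 b e : pp b e 3 = 1 + e * b 3%nat. Proof. reflexivity. Qed.
Lemma pp4 b e : pp b e 4 = 1 + e * b 4%nat. Proof. reflexivity. Qed.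

Lemma between_abs x y z al de : Rabs (x - al) <= de -> Rabs (y - al) <= de -> x <= z <= y -> Rabs (z - al) <= de.
Proof. intros h1 h2 h3. apply Rabs_le_between in h1, h2. apply Rabs_le_between. lra. Qed.

Lemma mono_ZW a b e Y1 Z1 W1 Y2 Z2 W2 : Rabs e * Ab a b <= /2 ->
  EqI a b e Y1 Z1 -> EqII a b e Z1 W1 -> EqI a b e Y2 Z2 -> EqII a b e Z2 W2 -> Y1 < Y2 ->
  Z1 < Z2 /\ W1 < W2.
Proof.
  intros He h1 h2 h3 h4 hY. destruct (p_signs a b e He) as (s1 & s2 & s3 & s4 & _).
  unfold EqI, EqII in *.
  assert (k1 := Ef_incr (qq a e 2) _ _ hY).
  assert (Ef (qq a e 3) (-Z2) < Ef (qq a e 3) (-Z1)).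
  { apply Rmult_lt_reg_l with (pp b e 3). lra. rewrite <- h1, <- h3. apply Rmult_lt_gt_compat_neg_l; lra. }
  apply Ef_incr_inv in H. split. lra.
  assert (k2 := Ef_incr (qq a e 4) Z1 Z2 ltac:(lra)).
  assert (Ef (qq a e 1) (-W2) < Ef (qq a e 1) (-W1)).
  { apply Ropp_lt_cancel. apply Rmult_lt_reg_l with (- pp b e 1). lra.
    replace (- pp b e 1 * - Ef (qq a e 1) (- W2)) with (pp b e 1 * Ef (qq a e 1) (- W2)) by ring.
    replace (- pp b e 1 * - Ef (qq a e 1) (- W1)) with (pp b e 1 * Ef (qq a e 1) (- W1)) by ring.
    rewrite <- h2, <- h4. apply Rmult_lt_compat_l; lra. }
  apply Ef_incr_inv in H0. lra.
Qed.

Lemma stab_lemma a b : sa a <> 0 -> 0 < alpha_star a b ->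
  exists de e2, 0 < de /\ de <= alpha_star a b / 2 /\ 0 < e2 /\
  forall e, 0 < Rabs e < e2 -> exists stab : bool,
   forall Y1 Z1 W1 Y2 Z2 W2,
   Rabs (Y1 - alpha_star a b) <= de -> Rabs (Z1 - alpha_star a b) <= de -> Rabs (W1 - alpha_star a b) <= de ->
   Rabs (Y2 - alpha_star a b) <= de -> Rabs (Z2 - alpha_star a b) <= de -> Rabs (W2 - alpha_star a b) <= de ->
   EqI a b e Y1 Z1 -> EqII a b e Z1 W1 -> EqI a b e Y2 Z2 -> EqII a b e Z2 W2 -> Y1 < Y2 ->
   W1 < W2 /\ (if stab then W1 - Y1 < W2 - Y2 else W2 - Y2 < W1 - Y1).
Proof.
  intros Hsa Hal.
  assert (Hbe : beta b <> 0) by (apply (beta_nz a b); auto).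
  set (al := alpha_star a b) in *. set (be := beta b) in *.
  assert (Habe : 0 < Rabs be) by (apply Rabs_pos_lt; auto).
  destruct (Ab_bounds a b) as (hA & ha1 & ha2 & ha3 & ha4 & hb1 & hb2 & hb3 & hb4). set (A := Ab a b) in *.
  exists (Rmin (al/2) (Rabs be / (16*A))), (Rmin (/(2*A)) (Rabs be/(32*A^2))).
  assert (0 < A^2) by (apply pow_lt; lra).
  split. apply Rmin_pos. lra. apply Rdiv_lt_0_compat; lra.
  split. apply Rmin_l. split. apply Rmin_pos. apply Rinv_0_lt_compat; lra. apply Rdiv_lt_0_compat; lra.
  intros e He. set (de := Rmin (al / 2) (Rabs be / (16 * A))) in *.
  assert (He1 : Rabs e * A <= /2).
  { assert (Rabs e <= / (2*A)) by (eapply Rle_trans; [left; apply He| apply Rmin_l]).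
    apply Rmult_le_reg_r with (/A). apply Rinv_0_lt_compat; lra.
    rewrite Rmult_assoc, Rinv_r by lra. rewrite Rmult_1_r. rewrite Rinv_mult in H0. nra. }
  assert (He2 : 8 * Rabs e * A^2 <= Rabs be / 4).
  { assert (Rabs e <= Rabs be / (32*A^2)) by (eapply Rle_trans; [left; apply He| apply Rmin_r]).
    apply Rmult_le_compat_r with (r := 8 * A^2) in H0. 2: nra.
    replace (Rabs be / (32 * A ^ 2) * (8 * A ^ 2)) with (Rabs be / 4) in H0 by (field; lra). nra. }
  assert (Hde : 4 * A * de <= Rabs be / 4).
  { assert (de <= Rabs be / (16 * A)) by apply Rmin_r.
    apply Rmult_le_compat_l with (r := 4 * A) in H0. 2: lra.
    replace (4 * A * (Rabs be / (16 * A))) with (Rabs be / 4) in H0 by (field; lra). lra. }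
  exists (if Rlt_dec 0 (- e * be) then true else false).
  intros Y1 Z1 W1 Y2 Z2 W2 hY1 hZ1 hW1 hY2 hZ2 hW2 e1 e2 e3 e4 hY.
  destruct (mono_ZW a b e Y1 Z1 W1 Y2 Z2 W2 He1 e1 e2 e3 e4 hY) as [hZ hW].
  split; auto.
  destruct (p_signs a b e He1) as (s1 & s2 & s3 & s4 & _).
  destruct (Ef_mvt (qq a e 2) Y1 Y2 hY) as [x1 [hx1 m1]].
  destruct (Ef_mvt (qq a e 3) (-Z2) (-Z1) ltac:(lra)) as [x2 [hx2 m2]].
  destruct (Ef_mvt (qq a e 4) Z1 Z2 hZ) as [x3 [hx3 m3]].
  destruct (Ef_mvt (qq a e 1) (-W2) (-W1) ltac:(lra)) as [x4 [hx4 m4]].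
  unfold EqI, EqII in *.
  set (E1 := exp (qq a e 2 * x1)) in *. set (E2 := exp (qq a e 3 * x2)) in *.
  set (E3 := exp (qq a e 4 * x3)) in *. set (E4 := exp (qq a e 1 * x4)) in *.
  assert (eq1 : pp b e 2 * (Y2 - Y1) * E1 = - (pp b e 3 * (Z2 - Z1) * E2)).
  { replace (Z2 - Z1) with (-Z1 - - Z2) by ring. rewrite Rmult_assoc, <- m1, Rmult_assoc, <- m2. lra. }
  assert (eq2 : pp b e 4 * (Z2 - Z1) * E3 = - (pp b e 1 * (W2 - W1) * E4)).
  { replace (W2 - W1) with (-W1 - - W2) by ring. rewrite Rmult_assoc, <- m3, Rmult_assoc, <- m4. lra. }
  set (L := ln (1 + - e * b 2%nat) + ln (1 + e * b 4%nat) - ln (1 + e * b 3%nat) - ln (1 + - e * b 1%nat)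
        + e * (a 2%nat * x1 + a 3%nat * (-x2) + a 4%nat * x3 + a 1%nat * (-x4))).
  assert (HL : Rabs (L + e * be) <= Rabs e * Rabs be / 2).
  { unfold L. apply (ratio_core e be al de A (a 1%nat) (a 2%nat) (a 3%nat) (a 4%nat) (b 1%nat) (b 2%nat) (b 3%nat) (b 4%nat) x1 (-x2) x3 (-x4)); auto.
    apply alpha_beta; auto.
    apply (between_abs Y1 Y2); auto; lra.
    apply (between_abs Z1 Z2); auto; lra.
    apply (between_abs Z1 Z2); auto; lra.
    apply (between_abs W1 W2); auto; lra. }
  assert (E1p : 0 < E1) by apply exp_pos. assert (E2p : 0 < E2) by apply exp_pos.
  assert (E3p : 0 < E3) by apply exp_pos. assert (E4p : 0 < E4) by apply exp_pos.
  rewrite pp1, pp2, pp3, pp4 in *.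
  assert (HexpL : exp L = ((1 + - e * b 2%nat) * (1 + e * b 4%nat) * E1 * E3) / ((1 + e * b 3%nat) * (1 + - e * b 1%nat) * E2 * E4)).
  { unfold L, E1, E2, E3, E4, qq. unfold Rminus. rewrite !exp_plus, !exp_Ropp, !exp_ln by lra.
    replace (e * (a 2%nat * x1 + a 3%nat * - x2 + a 4%nat * x3 + a 1%nat * - x4)) with
      (e * a 2%nat * x1 + - (e * a 3%nat * x2) + e * a 4%nat * x3 + - (e * a 1%nat * x4)) by ring.
    rewrite !exp_plus, !exp_Ropp. field. repeat split; try lra; apply Rgt_not_eq, exp_pos. }
  assert (HW : W2 - W1 = exp L * (Y2 - Y1)).
  { rewrite HexpL.
    assert (HZ : Z2 - Z1 = (1 + - e * b 2%nat) * (Y2 - Y1) * E1 / ((1 + e * b 3%nat) * E2)).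
    { apply Rmult_eq_reg_r with ((1 + e * b 3%nat) * E2). 2: apply Rgt_not_eq; apply Rmult_lt_0_compat; lra.
      unfold Rdiv. rewrite Rmult_assoc, Rinv_l. 2: apply Rgt_not_eq; apply Rmult_lt_0_compat; lra. lra. }
    apply Rmult_eq_reg_r with ((1 + - e * b 1%nat) * E4). 2: apply Rgt_not_eq; apply Rmult_lt_0_compat; lra.
    replace ((W2 - W1) * ((1 + - e * b 1%nat) * E4)) with ((1 + e * b 4%nat) * (Z2 - Z1) * E3) by lra.
    rewrite HZ. field. repeat split; lra. }
  assert (Hsgn : (W2 - Y2) - (W1 - Y1) = (exp L - 1) * (Y2 - Y1)) by (rewrite <- Rminus_0_r; lra).
  destruct (Rlt_dec 0 (- e * be)) as [hpos|hneg].
  - assert (0 < L).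
    { apply Rabs_le_between in HL.
      assert (Rabs (e*be) = - (e * be)) by (apply Rabs_left; lra). rewrite Rabs_mult in H0. lra. }
    assert (1 < exp L) by (rewrite <- exp_0; apply exp_increasing; auto). nra.
  - assert (e * be <> 0) by (apply Rmult_integral_contrapositive; split; auto; intro h; rewrite h, Rabs_R0 in He; lra).
    assert (L < 0).
    { apply Rabs_le_between in HL.
      assert (Rabs (e*be) = e * be) by (apply Rabs_right; lra). rewrite Rabs_mult in H1. lra. }
    assert (exp L < 1) by (rewrite <- exp_0; apply exp_increasing; auto). nra.
Qed.

Definition Einv (q w : R) : R := if Req_EM_T q 0 then w else ln (1 + q * w) / q.

Lemma Ef_Einv q w : 0 < 1 + q * w -> Ef q (Einv q w) = w.
Proof.
  intros H. unfold Ef, Einv. destruct (Req_EM_T q 0) as [->|Hq]; auto.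
  replace (q * (ln (1 + q * w) / q)) with (ln (1 + q*w)) by (field; auto).
  rewrite exp_ln by auto. field. auto.
Qed.

Lemma Einv_cont q w : 0 < 1 + q * w -> continuity_pt (Einv q) w.
Proof.
  intros H. unfold Einv. destruct (Req_EM_T q 0) as [->|Hq].
  - apply continuity_pt_id.
  - apply derivable_continuous_pt. exists (/ (1 + q*w)).
    apply is_derive_Reals. auto_derive. auto. field. split; auto; lra.
Qed.

Lemma exp_half_inv : / 2 <= exp (- / 2).
Proof.
  rewrite exp_Ropp. assert (h := exp_half_le2). assert (0 < exp (/2)) by apply exp_pos.
  apply Rinv_le_contravar; lra.
Qed.

Lemma exp_small_bounds t : Rabs t <= /2 -> /2 <= exp t <= 2.
Proof.
  intros H. apply Rabs_le_between in H. split.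
  - apply Rle_trans with (exp (-/2)). apply exp_half_inv. apply exp_le_mono; lra.
  - apply Rle_trans with (exp (/2)). apply exp_le_mono; lra. apply exp_half_le2.
Qed.

Lemma Ef_crude q x : 0 < x -> Rabs q * x <= /2 ->
  x / 2 <= Ef q x <= 2 * x /\ -2 * x <= Ef q (-x) <= - x / 2.
Proof.
  intros hx hq.
  destruct (Ef_mvt q 0 x hx) as [c [hc m]]. rewrite Ef_0 in m.
  destruct (Ef_mvt q (-x) 0 ltac:(lra)) as [c' [hc' m']]. rewrite Ef_0 in m'.
  assert (B1 : /2 <= exp (q*c) <= 2).
  { apply exp_small_bounds. rewrite Rabs_mult. apply Rle_trans with (Rabs q * x); auto.
    apply Rmult_le_compat_l. apply Rabs_pos. rewrite Rabs_right; lra. }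
  assert (B2 : /2 <= exp (q*c') <= 2).
  { apply exp_small_bounds. rewrite Rabs_mult. apply Rle_trans with (Rabs q * x); auto.
    apply Rmult_le_compat_l. apply Rabs_pos. rewrite Rabs_left; lra. }
  split; split; nra.
Qed.

Lemma Z_apriori_I P Q qa qb Y Z : P <= -/2 -> -P <= 3/2 -> /2 <= Q -> 0 < Y ->
  Rabs qa * Y <= /2 -> Rabs qb * (12 * Y) <= /2 -> P * Ef qa Y = Q * Ef qb (-Z) -> 0 < Z <= 12 * Y.
Proof.
  intros h1 h2 h3 hY hqa hqb E.
  destruct (Ef_crude qa Y hY hqa) as [[c1 c2] _].
  destruct (Ef_crude qb (12*Y) ltac:(lra) hqb) as [_ [c3 c4]].
  assert (k : Ef qb (-Z) = P * Ef qa Y / Q) by (rewrite E; field; lra).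
  assert (Ef qb (-Z) < 0).
  { rewrite k. apply Rmult_lt_reg_r with Q. lra. replace (P * Ef qa Y / Q * Q) with (P * Ef qa Y) by (field; lra). nra. }
  rewrite <- (Ef_0 qb) in H. apply Ef_incr_inv in H.
  split. lra.
  destruct (Rle_dec Z (12*Y)) as [|n]; auto. exfalso.
  assert (Ef qb (-Z) < Ef qb (-(12*Y))) by (apply Ef_incr; lra).
  assert (-6 * Y <= Ef qb (-Z)).
  { rewrite k. apply Rmult_le_reg_r with Q. lra. replace (P * Ef qa Y / Q * Q) with (P * Ef qa Y) by (field; lra). nra. }
  lra.
Qed.

Lemma Z_apriori_II P4 P1 qc qd Y Z : /2 <= P4 -> P1 <= -/2 -> -P1 <= 3/2 -> 0 < Y ->
  Rabs qd * Y <= /2 -> Rabs qc * (12 * Y) <= /2 -> P4 * Ef qc Z = P1 * Ef qd (-Y) -> 0 < Z <= 12 * Y.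
Proof.
  intros h1 h2 h3 hY hqd hqc E.
  destruct (Ef_crude qd Y hY hqd) as [_ [c1 c2]].
  destruct (Ef_crude qc (12*Y) ltac:(lra) hqc) as [[c3 c4] _].
  assert (k : Ef qc Z = P1 * Ef qd (-Y) / P4) by (rewrite <- E; field; lra).
  assert (0 < Ef qc Z).
  { rewrite k. apply Rmult_lt_reg_r with P4. lra. replace (P1 * Ef qd (-Y) / P4 * P4) with (P1 * Ef qd (-Y)) by (field; lra). nra. }
  rewrite <- (Ef_0 qc) in H. apply Ef_incr_inv in H.
  split. lra.
  destruct (Rle_dec Z (12*Y)) as [|n]; auto. exfalso.
  assert (Ef qc (12*Y) < Ef qc Z) by (apply Ef_incr; lra).
  assert (Ef qc Z <= 6 * Y).
  { rewrite k. apply Rmult_le_reg_r with P4. lra. replace (P1 * Ef qd (-Y) / P4 * P4) with (P1 * Ef qd (-Y)) by (field; lra). nra. }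
  lra.
Qed.

Lemma lnZ_I P Q qa qb Y Z eta u v : P = -(1+u) -> Q = 1 + v -> Rabs u <= /2 -> Rabs v <= /2 ->
  0 < Y -> 0 < Z -> Rabs (qa*Y) <= eta -> Rabs (qb*Z) <= eta -> eta <= 1 ->
  P * Ef qa Y = Q * Ef qb (-Z) ->
  Rabs (ln Z - (ln (1+u) - ln (1+v) + ln Y + qa*Y/2 + qb*Z/2)) <= eta^2.
Proof.
  intros hP hQ hu hv hY hZ h1 h2 heta E.
  apply Rabs_le_between in hu, hv.
  destruct (Ef_expand qa Y ltac:(lra)) as [t1 [ht1 e1]].
  destruct (Ef_expand qb (-Z) ltac:(rewrite Ropp_mult_distr_r_reverse, Rabs_Ropp; lra)) as [t2 [ht2 e2]].
  set (A1 := qa * Y / 2 + t1 * (qa * Y) ^ 2 / 2) in *.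
  set (A2 := qb * - Z / 2 + t2 * (qb * - Z) ^ 2 / 2) in *.
  assert (HZ : Z = exp (ln (1+u) - ln (1+v) + ln Y + (A1 - A2))).
  { unfold Rminus. rewrite !exp_plus, !exp_Ropp, !exp_ln by lra.
    rewrite e1, e2, hP, hQ in E.
    assert (0 < exp A2) by apply exp_pos.
    assert (K : Z * ((1+v)*exp A2) = (1+u)*(Y*exp A1)) by lra.
    apply Rmult_eq_reg_r with ((1+v) * exp A2). 2: apply Rgt_not_eq, Rmult_lt_0_compat; lra.
    rewrite K. field. lra. }
  rewrite HZ at 1. rewrite ln_exp.
  unfold A1, A2.
  assert (0 <= (qa*Y)^2 <= eta^2).
  { split. apply pow2_ge_0. rewrite <- (pow2_abs (qa*Y)). apply pow_incr. split; auto. apply Rabs_pos. }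
  assert (0 <= (qb*Z)^2 <= eta^2).
  { split. apply pow2_ge_0. rewrite <- (pow2_abs (qb*Z)). apply pow_incr. split; auto. apply Rabs_pos. }
  replace ((qb * - Z)^2) with ((qb*Z)^2) by ring.
  assert (0 <= t1 * (qa*Y)^2 <= eta^2) by (split; [apply Rmult_le_pos; lra| replace (eta^2) with (1 * eta^2) by ring; apply Rmult_le_compat; lra]).
  assert (0 <= t2 * (qb*Z)^2 <= eta^2) by (split; [apply Rmult_le_pos; lra| replace (eta^2) with (1 * eta^2) by ring; apply Rmult_le_compat; lra]).
  apply Rabs_le_between. split; lra.
Qed.

Lemma lnZ_II P4 P1 qc qd Y Z eta u v : P4 = 1 + v -> P1 = -(1+u) -> Rabs u <= /2 -> Rabs v <= /2 ->
  0 < Y -> 0 < Z -> Rabs (qd*Y) <= eta -> Rabs (qc*Z) <= eta -> eta <= 1 ->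
  P4 * Ef qc Z = P1 * Ef qd (-Y) ->
  Rabs (ln Z - (ln (1+u) - ln (1+v) + ln Y - qd*Y/2 - qc*Z/2)) <= eta^2.
Proof.
  intros hP hQ hu hv hY hZ h1 h2 heta E.
  apply Rabs_le_between in hu, hv.
  destruct (Ef_expand qc Z ltac:(lra)) as [t1 [ht1 e1]].
  destruct (Ef_expand qd (-Y) ltac:(rewrite Ropp_mult_distr_r_reverse, Rabs_Ropp; lra)) as [t2 [ht2 e2]].
  set (A1 := qc * Z / 2 + t1 * (qc * Z) ^ 2 / 2) in *.
  set (A2 := qd * - Y / 2 + t2 * (qd * - Y) ^ 2 / 2) in *.
  assert (HZ : Z = exp (ln (1+u) - ln (1+v) + ln Y + (A2 - A1))).
  { unfold Rminus. rewrite !exp_plus, !exp_Ropp, !exp_ln by lra.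
    rewrite e1, e2, hP, hQ in E.
    assert (0 < exp A1) by apply exp_pos.
    assert (K : Z * ((1+v)*exp A1) = (1+u)*(Y*exp A2)) by lra.
    apply Rmult_eq_reg_r with ((1+v) * exp A1). 2: apply Rgt_not_eq, Rmult_lt_0_compat; lra.
    rewrite K. field. lra. }
  rewrite HZ at 1. rewrite ln_exp.
  unfold A1, A2.
  assert (0 <= (qd*Y)^2 <= eta^2).
  { split. apply pow2_ge_0. rewrite <- (pow2_abs (qd*Y)). apply pow_incr. split; auto. apply Rabs_pos. }
  assert (0 <= (qc*Z)^2 <= eta^2).
  { split. apply pow2_ge_0. rewrite <- (pow2_abs (qc*Z)). apply pow_incr. split; auto. apply Rabs_pos. }
  replace ((qd * - Y)^2) with ((qd*Y)^2) by ring.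
  assert (0 <= t1 * (qc*Z)^2 <= eta^2) by (split; [apply Rmult_le_pos; lra| replace (eta^2) with (1 * eta^2) by ring; apply Rmult_le_compat; lra]).
  assert (0 <= t2 * (qd*Y)^2 <= eta^2) by (split; [apply Rmult_le_pos; lra| replace (eta^2) with (1 * eta^2) by ring; apply Rmult_le_compat; lra]).
  apply Rabs_le_between. split; lra.
Qed.

Lemma qb_bounds a b e : 
  Rabs (qq a e 1) <= Rabs e * Ab a b /\ Rabs (qq a e 2) <= Rabs e * Ab a b /\
  Rabs (qq a e 3) <= Rabs e * Ab a b /\ Rabs (qq a e 4) <= Rabs e * Ab a b /\
  Rabs (e * b 1%nat) <= Rabs e * Ab a b /\ Rabs (e * b 2%nat) <= Rabs e * Ab a b /\
  Rabs (e * b 3%nat) <= Rabs e * Ab a b /\ Rabs (e * b 4%nat) <= Rabs e * Ab a b.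
Proof.
  destruct (Ab_bounds a b) as (h0 & h1 & h2 & h3 & h4 & h5 & h6 & h7 & h8).
  unfold qq. rewrite !Rabs_mult.
  assert (0 <= Rabs e) by apply Rabs_pos.
  repeat split; apply Rmult_le_compat_l; auto.
Qed.

Lemma ln1_abs u eta : Rabs u <= eta -> eta <= /2 -> Rabs (ln (1+u)) <= 2 * eta /\ Rabs (ln (1 + u) - u) <= 2 * eta^2.
Proof.
  intros h1 h2. assert (k := ln_approx u ltac:(lra)).
  assert (u^2 <= eta^2) by (rewrite <- (pow2_abs u); apply pow_incr; split; auto; apply Rabs_pos).
  assert (eta^2 <= eta/2) by (assert (0 <= Rabs u) by apply Rabs_pos; nra).
  split. 2: lra.
  apply Rabs_le_between in k. apply Rabs_le_between in h1. apply Rabs_le_between. split; nra.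
Qed.

Lemma mul_abs_le x y X Y : Rabs x <= X -> Rabs y <= Y -> Rabs (x * y) <= X * Y.
Proof. apply Rabs_mult_le. Qed.

Lemma D_estimate a b e Y Z1 Z2 Lam :
  0 < Y -> 12 * Y <= Lam -> 1 <= Lam -> Rabs e * Ab a b * Lam <= /12 ->
  EqI a b e Y Z1 -> EqII a b e Z2 Y ->
  (0 < Z1 <= 12 * Y /\ 0 < Z2 <= 12 * Y) /\
  (Rabs (Z1 - Y) <= 12 * (Rabs e * Ab a b * Lam) * Y /\ Rabs (Z2 - Y) <= 12 * (Rabs e * Ab a b * Lam) * Y) /\
  Rabs (ln Z1 - ln Z2 - e * (beta b + sa a * Y / 2)) <= 22 * (Rabs e * Ab a b * Lam)^2.
Proof.
  intros hY hL hL1 heta E1 E2.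
  set (eta := Rabs e * Ab a b * Lam) in *.
  destruct (Ab_bounds a b) as (hA & _).
  assert (Heta0 : 0 <= eta) by (unfold eta; apply Rmult_le_pos; [apply Rmult_le_pos; [apply Rabs_pos|lra]|lra]).
  assert (HeA : Rabs e * Ab a b <= eta) by (unfold eta; assert (0 <= Rabs e * Ab a b) by (apply Rmult_le_pos; [apply Rabs_pos|lra]); nra).
  assert (HeAY : Rabs e * Ab a b * (12 * Y) <= eta) by (unfold eta; apply Rmult_le_compat_l; [apply Rmult_le_pos; [apply Rabs_pos|lra]| lra]).
  assert (He12 : Rabs e * Ab a b <= /2) by lra.
  destruct (p_signs a b e He12) as (s1 & s2 & s3 & s4 & _).
  destruct (qb_bounds a b e) as (q1 & q2 & q3 & q4 & c1 & c2 & c3 & c4).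
  assert (Hq : forall q, Rabs q <= Rabs e * Ab a b -> Rabs q * Y <= eta / 12 /\ Rabs q * (12 * Y) <= eta).
  { intros q hq. split; nra. }
  destruct (Hq _ q1) as [q1a q1b]. destruct (Hq _ q2) as [q2a q2b].
  destruct (Hq _ q3) as [q3a q3b]. destruct (Hq _ q4) as [q4a q4b].
  assert (pb : forall j, Rabs (e * b j) <= Rabs e * Ab a b -> Rabs (pp b e j - su j) <= 3/2).
  { intros j h. unfold pp. replace (su j + e * b j - su j) with (e * b j) by ring. lra. }
  assert (Z1b : 0 < Z1 <= 12 * Y).
  { apply (Z_apriori_I (pp b e 2) (pp b e 3) (qq a e 2) (qq a e 3)); auto; try lra.
    rewrite pp2. apply Rabs_le_between in c2. lra. }
  assert (Z2b : 0 < Z2 <= 12 * Y).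
  { apply (Z_apriori_II (pp b e 4) (pp b e 1) (qq a e 4) (qq a e 1)); auto; try lra.
    rewrite pp1. apply Rabs_le_between in c1. lra. }
  split. auto.
  assert (QY : forall q, Rabs q * Y <= eta/12 -> Rabs (q * Y) <= eta) by (intros q h; rewrite Rabs_mult, (Rabs_right Y) by lra; lra).
  assert (QZ : forall q Z, 0 < Z <= 12 * Y -> Rabs q * (12 * Y) <= eta -> Rabs (q * Z) <= eta).
  { intros q Z hZ h. rewrite Rabs_mult, (Rabs_right Z) by lra. assert (0 <= Rabs q) by apply Rabs_pos. nra. }
  assert (L1 := lnZ_I (pp b e 2) (pp b e 3) (qq a e 2) (qq a e 3) Y Z1 eta (- (e * b 2%nat)) (e * b 3%nat)
     ltac:(rewrite pp2; ring) ltac:(rewrite pp3; ring) ltac:(rewrite Rabs_Ropp; lra) ltac:(lra) hY ltac:(lra)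
     (QY _ q2a) (QZ _ _ Z1b q3b) ltac:(lra) E1).
  assert (L2 := lnZ_II (pp b e 4) (pp b e 1) (qq a e 4) (qq a e 1) Y Z2 eta (- (e * b 1%nat)) (e * b 4%nat)
     ltac:(rewrite pp4; ring) ltac:(rewrite pp1; ring) ltac:(rewrite Rabs_Ropp; lra) ltac:(lra) hY ltac:(lra)
     (QY _ q1a) (QZ _ _ Z2b q4b) ltac:(lra) E2).
  assert (eta <= /12) by auto.
  destruct (ln1_abs (- (e * b 2%nat)) eta ltac:(rewrite Rabs_Ropp; lra) ltac:(lra)) as [l2a l2b].
  destruct (ln1_abs (e * b 3%nat) eta ltac:(lra) ltac:(lra)) as [l3a l3b].
  destruct (ln1_abs (- (e * b 1%nat)) eta ltac:(rewrite Rabs_Ropp; lra) ltac:(lra)) as [l1a l1b].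
  destruct (ln1_abs (e * b 4%nat) eta ltac:(lra) ltac:(lra)) as [l4a l4b].
  assert (qY2 := QY _ q2a). assert (qY1 := QY _ q1a).
  assert (qZ3 := QZ _ _ Z1b q3b). assert (qZ4 := QZ _ _ Z2b q4b).
  assert (eta^2 <= eta) by nra.
  assert (dev : forall Z, 0 < Z -> Rabs (ln Z - ln Y) <= 6 * eta -> Rabs (Z - Y) <= 12 * eta * Y).
  { intros Z hZ h. assert (hx := exp_small (ln Z - ln Y) ltac:(lra)).
    assert (exp (ln Z - ln Y) = Z * / Y) by (unfold Rminus; rewrite exp_plus, exp_Ropp, !exp_ln; lra).
    rewrite H1 in hx.
    replace (Z - Y) with (Y * (Z * / Y - 1)) by (field; lra).
    rewrite Rabs_mult, (Rabs_right Y) by lra. rewrite Rmult_comm. apply Rmult_le_compat_r. lra. lra. }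
  apply Rabs_le_between in L1, L2, l2a, l2b, l3a, l3b, l1a, l1b, l4a, l4b, qY2, qY1, qZ3, qZ4.
  assert (dZ1 : Rabs (Z1 - Y) <= 12 * eta * Y) by (apply dev; [lra| apply Rabs_le_between; split; lra]).
  assert (dZ2 : Rabs (Z2 - Y) <= 12 * eta * Y) by (apply dev; [lra| apply Rabs_le_between; split; lra]).
  split. split; auto.
  assert (m3 : Rabs (qq a e 3 * (Z1 - Y)) <= eta^2).
  { eapply Rle_trans. apply mul_abs_le. apply q3. apply dZ1. nra. }
  assert (m4 : Rabs (qq a e 4 * (Z2 - Y)) <= eta^2).
  { eapply Rle_trans. apply mul_abs_le. apply q4. apply dZ2. nra. }
  apply Rabs_le_between in m3, m4.
  assert (Hsum : e * (beta b + sa a * Y / 2) = (- (e * b 2%nat)) - e * b 3%nat - (- (e * b 1%nat)) + e * b 4%nat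
     + qq a e 2 * Y / 2 + qq a e 3 * Y / 2 + qq a e 1 * Y / 2 + qq a e 4 * Y / 2).
  { unfold beta, sa, qq. field. }
  rewrite Hsum. apply Rabs_le_between.
  unfold qq in *. split; nra.
Qed.

Lemma cont_affine_Ef c d q : forall Y, continuity_pt (fun Y => c * Ef q Y / d) Y.
Proof.
  intros Y. unfold Rdiv.
  change (continuity_pt (mult_fct (mult_fct (fct_cte c) (Ef q)) (fct_cte (/d))) Y).
  apply continuity_pt_mult. apply continuity_pt_mult.
  apply continuity_pt_const; intros ? ?; reflexivity. apply Ef_cont.
  apply continuity_pt_const; intros ? ?; reflexivity.
Qed.

Lemma cont_affine_Ef_neg c d q : forall Y, continuity_pt (fun Y => c * Ef q (-Y) / d) Y.
Proof.
  intros Y. unfold Rdiv.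
  change (continuity_pt (mult_fct (mult_fct (fct_cte c) (comp (Ef q) (opp_fct id))) (fct_cte (/d))) Y).
  apply continuity_pt_mult. apply continuity_pt_mult.
  apply continuity_pt_const; intros ? ?; reflexivity.
  apply continuity_pt_comp. apply continuity_pt_opp, continuity_pt_id. apply Ef_cont.
  apply continuity_pt_const; intros ? ?; reflexivity.
Qed.

Lemma sign_core X m g s K : (s = 1 \/ s = -1) -> 0 < K -> g <> 0 -> s * g * m = 50 * K * Rabs g ->
  Rabs (X - m) <= 22 * K -> 0 < s * g * X.
Proof.
  intros hs hK hg hm hX.
  assert (Rabs (s * g) = Rabs g) by (destruct hs; subst; rewrite Rabs_mult; [rewrite Rabs_R1| rewrite (Rabs_left (-1)) by lra]; ring).
  assert (Rabs (s * g * (X - m)) <= Rabs g * (22 * K)) by (rewrite Rabs_mult, H; apply Rmult_le_compat_l; auto; apply Rabs_pos).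
  assert (0 < Rabs g) by (apply Rabs_pos_lt; auto).
  apply Rabs_le_between in H0.
  replace (s * g * X) with (s * g * m + s * g * (X - m)) by ring. rewrite hm. nra.
Qed.

Lemma exist_fixed a b : sa a <> 0 -> 0 < alpha_star a b ->
  exists e1 C, 0 < e1 /\ 0 < C /\ forall e, 0 < Rabs e < e1 ->
   exists y z, EqI a b e y z /\ EqII a b e z y /\ 0 < y /\ 0 < z /\
     Rabs (y - alpha_star a b) <= C * Rabs e /\ Rabs (z - alpha_star a b) <= C * Rabs e.
Proof.
  intros Hsa Hal. assert (Hab := alpha_beta a b Hsa).
  set (al := alpha_star a b) in *. set (A := Ab a b). set (S := Rabs (sa a)).
  assert (HS : 0 < S) by (apply Rabs_pos_lt; auto).
  destruct (Ab_bounds a b) as (hA & _). fold A in hA.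
  set (Lam := 18 * al + 1).
  set (Cc := 100 * A^2 * Lam^2 / S).
  assert (HA2 : 0 < A^2) by (apply pow_lt; lra).
  assert (HL2 : 0 < Lam^2) by (apply pow_lt; unfold Lam; lra).
  assert (HCc : 0 < Cc) by (unfold Cc; apply Rdiv_lt_0_compat; [nra| lra]).
  exists (Rmin (/(12*A*Lam)) (al/(2*Cc))), (Cc + 18 * A * Lam * al).
  split. apply Rmin_pos. apply Rinv_0_lt_compat. unfold Lam; nra. apply Rdiv_lt_0_compat; lra.
  split. unfold Lam; nra.
  intros e He.
  assert (He1 : Rabs e * A * Lam <= /12).
  { assert (Rabs e <= /(12*A*Lam)) by (eapply Rle_trans; [left; apply He| apply Rmin_l]).
    apply Rmult_le_compat_r with (r := 12 * A * Lam) in H. 2: unfold Lam; nra.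
    rewrite Rinv_l in H by (unfold Lam; nra). lra. }
  assert (He2 : Cc * Rabs e <= al / 2).
  { assert (Rabs e <= al/(2*Cc)) by (eapply Rle_trans; [left; apply He| apply Rmin_r]).
    apply Rmult_le_compat_l with (r := Cc) in H. 2: lra.
    replace (Cc * (al / (2*Cc))) with (al/2) in H by (field; lra). lra. }
  assert (Hepos : 0 < Rabs e) by apply He.
  set (eta := Rabs e * A * Lam) in *.
  assert (Heta0 : 0 < eta) by (unfold eta, Lam; apply Rmult_lt_0_compat; [apply Rmult_lt_0_compat|]; lra).
  assert (HeA : Rabs e * A <= /2) by (unfold eta, Lam in He1; nra).
  destruct (p_signs a b e HeA) as (s1 & s2 & s3 & s4 & t1 & t2 & t3 & t4).
  apply Rabs_le_between in t1, t2, t3, t4.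
  destruct (qb_bounds a b e) as (q1 & q2 & q3 & q4 & _). fold A in q1, q2, q3, q4.
  set (w1 := fun Y => pp b e 2 * Ef (qq a e 2) Y / pp b e 3).
  set (w2 := fun Y => pp b e 1 * Ef (qq a e 1) (-Y) / pp b e 4).
  set (Zf1 := fun Y => - Einv (qq a e 3) (w1 Y)).
  set (Zf2 := fun Y => Einv (qq a e 4) (w2 Y)).
  assert (Hrange : forall Y, al/2 <= Y <= 3*al/2 ->
     0 < 1 + qq a e 3 * w1 Y /\ 0 < 1 + qq a e 4 * w2 Y /\ EqI a b e Y (Zf1 Y) /\ EqII a b e (Zf2 Y) Y).
  { intros Y hY. assert (0 < Y) by lra.
    assert (hq : forall q, Rabs q <= Rabs e * A -> Rabs q * Y <= /2 /\ Rabs q * (6 * Y) <= /2).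
    { intros q hq. assert (0 <= Rabs q) by apply Rabs_pos. assert (6 * Y <= Lam) by (unfold Lam; lra).
      assert (Rabs q * (6*Y) <= eta) by (unfold eta; apply Rmult_le_compat; lra). split; nra. }
    destruct (hq _ q2) as [h2 _]. destruct (hq _ q1) as [h1 _].
    destruct (hq _ q3) as [_ h3]. destruct (hq _ q4) as [_ h4].
    destruct (Ef_crude _ Y H h2) as [[k1 k2] _]. destruct (Ef_crude _ Y H h1) as [_ [k3 k4]].
    assert (Rabs (w1 Y) <= 6 * Y).
    { unfold w1. rewrite pp2, pp3 in *. unfold Rdiv. rewrite Rabs_mult, Rabs_mult, Rabs_inv.
      rewrite (Rabs_left (-1 + e * b 2%nat)), (Rabs_right (Ef (qq a e 2) Y)), (Rabs_right (1 + e * b 3%nat)) by lra.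
      apply Rmult_le_reg_r with (1 + e * b 3%nat). lra.
      replace (- (-1 + e * b 2%nat) * Ef (qq a e 2) Y * / (1 + e * b 3%nat) * (1 + e * b 3%nat))
        with (- (-1 + e * b 2%nat) * Ef (qq a e 2) Y) by (field; lra).
      assert (- (-1 + e * b 2%nat) * Ef (qq a e 2) Y <= 3/2 * (2 * Y)) by (apply Rmult_le_compat; lra). nra. }
    assert (Rabs (w2 Y) <= 6 * Y).
    { unfold w2. rewrite pp1, pp4 in *. unfold Rdiv. rewrite Rabs_mult, Rabs_mult, Rabs_inv.
      rewrite (Rabs_left (-1 + e * b 1%nat)), (Rabs_left (Ef (qq a e 1) (-Y))), (Rabs_right (1 + e * b 4%nat)) by lra.
      apply Rmult_le_reg_r with (1 + e * b 4%nat). lra.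
      replace (- (-1 + e * b 1%nat) * - Ef (qq a e 1) (-Y) * / (1 + e * b 4%nat) * (1 + e * b 4%nat))
        with (- (-1 + e * b 1%nat) * - Ef (qq a e 1) (-Y)) by (field; lra).
      assert (- (-1 + e * b 1%nat) * - Ef (qq a e 1) (-Y) <= 3/2 * (2 * Y)) by (apply Rmult_le_compat; lra). nra. }
    assert (d1 : 0 < 1 + qq a e 3 * w1 Y).
    { assert (Rabs (qq a e 3 * w1 Y) <= /2) by (rewrite Rabs_mult; assert (0 <= Rabs (qq a e 3)) by apply Rabs_pos; nra).
      apply Rabs_le_between in H2. lra. }
    assert (d2 : 0 < 1 + qq a e 4 * w2 Y).
    { assert (Rabs (qq a e 4 * w2 Y) <= /2) by (rewrite Rabs_mult; assert (0 <= Rabs (qq a e 4)) by apply Rabs_pos; nra).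
      apply Rabs_le_between in H2. lra. }
    split; auto. split; auto. split.
    - unfold EqI, Zf1. rewrite Ropp_involutive, Ef_Einv by auto. unfold w1. field. lra.
    - unfold EqII, Zf2. rewrite Ef_Einv by auto. unfold w2. field. lra. }
  set (F := fun Y => Zf1 Y - Zf2 Y).
  assert (HFc : forall Y, al/2 <= Y <= 3*al/2 -> continuity_pt F Y).
  { intros Y hY. destruct (Hrange Y hY) as (d1 & d2 & _).
    change (continuity_pt (minus_fct (opp_fct (comp (Einv (qq a e 3)) w1)) (comp (Einv (qq a e 4)) w2)) Y).
    apply continuity_pt_minus. apply continuity_pt_opp.
    apply continuity_pt_comp. apply cont_affine_Ef. apply Einv_cont; auto.
    apply continuity_pt_comp. apply cont_affine_Ef_neg. apply Einv_cont; auto. }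
  assert (Hsign : forall s, (s = 1 \/ s = -1) ->
     0 < s * (e * sa a) * (ln (Zf1 (al + s * Cc * Rabs e)) - ln (Zf2 (al + s * Cc * Rabs e)))).
  { intros s hs. set (Y := al + s * Cc * Rabs e).
    assert (hY : al/2 <= Y <= 3*al/2) by (unfold Y; assert (0 <= Cc * Rabs e) by nra; destruct hs; subst; lra).
    destruct (Hrange Y hY) as (_ & _ & E1 & E2).
    destruct (D_estimate a b e Y (Zf1 Y) (Zf2 Y) Lam ltac:(lra) ltac:(unfold Lam; lra) ltac:(unfold Lam; lra) He1 E1 E2)
      as (_ & _ & D). fold A eta in D.
    assert (Hval : e * (beta b + sa a * Y / 2) = s * Cc * Rabs e * e * sa a / 2) by (unfold Y; nra).
    rewrite Hval in D. apply Rabs_le_between in D.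
    assert (Hes : Rabs (e * sa a) * Rabs e = e^2 * S).
    { unfold S. rewrite Rabs_mult. rewrite <- (pow2_abs e). ring. }
    assert (Hcc : Cc * S = 100 * A^2 * Lam^2) by (unfold Cc; field; lra).
    assert (eta^2 = e^2 * A^2 * Lam^2) by (unfold eta; rewrite <- (pow2_abs e); ring).
    assert (0 < e^2) by (rewrite <- (pow2_abs e); apply pow_lt; lra).
    assert (Hg : e * sa a <> 0) by (apply Rmult_integral_contrapositive; split; auto; intro h; rewrite h, Rabs_R0 in Hepos; lra).
    apply (sign_core _ (s * Cc * Rabs e * e * sa a / 2) (e * sa a) s (e^2 * A^2 * Lam^2)); auto.
    nra.
    assert (Hs2 : s * s = 1) by (destruct hs; subst; ring).
    assert (Hg2 : (e * sa a) * (e * sa a) = Rabs (e * sa a) * Rabs (e * sa a)) by (assert (h := pow2_abs (e * sa a)); simpl in h; rewrite !Rmult_1_r in h; lra).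
    replace (s * (e * sa a) * (s * Cc * Rabs e * e * sa a / 2)) with ((s*s) * Cc * (Rabs e * ((e * sa a) * (e * sa a))) / 2) by field.
    rewrite Hs2, Hg2. replace (1 * Cc * (Rabs e * (Rabs (e * sa a) * Rabs (e * sa a))) / 2) with
      (Rabs (e * sa a) * ((Rabs (e * sa a) * Rabs e) * Cc) / 2) by field.
    rewrite Hes. replace (e ^ 2 * S * Cc) with (e^2 * (Cc * S)) by ring. rewrite Hcc. field.
    rewrite H in D. apply Rabs_le_between. lra. }
  assert (Hpos : forall Y, al/2 <= Y <= 3*al/2 -> 0 < Zf1 Y /\ 0 < Zf2 Y /\ Rabs (Zf1 Y - Y) <= 12 * eta * Y).
  { intros Y hY. destruct (Hrange Y hY) as (_ & _ & E1 & E2).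
    destruct (D_estimate a b e Y (Zf1 Y) (Zf2 Y) Lam ltac:(lra) ltac:(unfold Lam; lra) ltac:(unfold Lam; lra) He1 E1 E2)
      as ([[h1 _] [h2 _]] & [h3 _] & _). fold A eta in h3. auto. }
  set (Yp := al + 1 * Cc * Rabs e). set (Ym := al + -1 * Cc * Rabs e).
  assert (HCe : 0 < Cc * Rabs e) by (apply Rmult_lt_0_compat; lra).
  assert (hYp : al/2 <= Yp <= 3*al/2) by (unfold Yp; lra).
  assert (hYm : al/2 <= Ym <= 3*al/2) by (unfold Ym; lra).
  assert (hYmp : Ym < Yp) by (unfold Ym, Yp; lra).
  assert (Sp := Hsign 1 ltac:(auto)). assert (Sm := Hsign (-1) ltac:(auto)). fold Yp in Sp. fold Ym in Sm.
  destruct (Hpos Yp hYp) as (pp1' & pp2' & _). destruct (Hpos Ym hYm) as (pm1 & pm2 & _).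
  assert (Hg : e * sa a <> 0) by (apply Rmult_integral_contrapositive; split; auto; intro h; rewrite h, Rabs_R0 in Hepos; lra).
  assert (Hex : exists y, Ym <= y <= Yp /\ F y = 0).
  { destruct (Rlt_dec 0 (e * sa a)) as [hg|hg].
    - assert (F Yp > 0).
      { unfold F. assert (ln (Zf2 Yp) < ln (Zf1 Yp)) by nra. apply ln_lt_inv in H; auto. lra. }
      assert (F Ym < 0).
      { unfold F. assert (ln (Zf1 Ym) < ln (Zf2 Ym)) by nra. apply ln_lt_inv in H0; auto. lra. }
      destruct (Ranalysis5.IVT_interv F Ym Yp) as [y [hy1 hy2]]; auto.
      intros c hc. apply HFc. lra. exists y; auto.
    - assert (e * sa a < 0) by (destruct (Rtotal_order (e * sa a) 0) as [|[|]]; auto; lra).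
      assert (F Yp < 0).
      { unfold F. assert (ln (Zf1 Yp) < ln (Zf2 Yp)) by nra. apply ln_lt_inv in H0; auto. lra. }
      assert (F Ym > 0).
      { unfold F. assert (ln (Zf2 Ym) < ln (Zf1 Ym)) by nra. apply ln_lt_inv in H1; auto. lra. }
      destruct (Ranalysis5.IVT_interv (fun Y => - F Y) Ym Yp) as [y [hy1 hy2]]; try lra.
      intros c hc. apply continuity_pt_opp with (f := F). apply HFc. lra. exists y; split; auto; lra. }
  destruct Hex as [y [hy Fy]].
  assert (hy' : al/2 <= y <= 3*al/2) by lra.
  destruct (Hrange y hy') as (_ & _ & E1 & E2).
  destruct (Hpos y hy') as (z1 & z2 & dz).
  exists y, (Zf1 y). unfold F in Fy. assert (Zf2 y = Zf1 y) by lra.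
  split; auto. split. rewrite <- H; auto. split. lra. split; auto.
  split.
  - apply Rabs_le_between. assert (P1 : 0 <= A * Lam * al) by (apply Rmult_le_pos; [apply Rmult_le_pos|]; unfold Lam; lra).
    assert (0 <= 18 * A * Lam * al * Rabs e) by nra.
    unfold Ym, Yp in hy. split; nra.
  - apply Rabs_le_between in dz. apply Rabs_le_between.
    assert (P1 : 0 <= Rabs e * A * Lam) by (apply Rmult_le_pos; [apply Rmult_le_pos|]; unfold Lam; lra).
    assert (eta * y <= Rabs e * A * Lam * (3 * al / 2)) by (unfold eta; apply Rmult_le_compat_l; lra).
    unfold Ym, Yp in hy. split; nra.
Qed.

Lemma cont_eps_intro f x : (forall eps, 0 < eps -> exists d, 0 < d /\ forall y, Rabs (y - x) < d -> Rabs (f y - f x) < eps) -> continuity_pt f x.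
Proof.
  intros H eps He. destruct (H eps He) as [d [hd hf]]. exists d. split; auto.
  intros y [_ hy]. apply hf. exact hy.
Qed.

Lemma cont_eps_elim f x : continuity_pt f x -> forall eps, 0 < eps -> exists d, 0 < d /\ forall y, Rabs (y - x) < d -> Rabs (f y - f x) < eps.
Proof.
  intros H eps He. destruct (H eps He) as [d [hd hf]]. exists d. split; auto.
  intros y hy. destruct (Req_dec x y) as [<-|ne]. unfold Rminus; rewrite Rplus_opp_r, Rabs_R0; auto.
  apply hf. split. split; [exact I| exact ne]. exact hy.
Qed.

Lemma cont_glue f F1 F2 a b c : a < b < c ->
  (forall s, a < s < b -> f s = F1 s) -> (forall s, b < s < c -> f s = F2 s) ->
  f b = F1 b -> F1 b = F2 b -> continuity_pt F1 b -> continuity_pt F2 b -> continuity_pt f b.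
Proof.
  intros hb h1 h2 e1 e2 c1 c2. apply cont_eps_intro. intros eps he.
  destruct (cont_eps_elim _ _ c1 eps he) as [d1 [hd1 k1]].
  destruct (cont_eps_elim _ _ c2 eps he) as [d2 [hd2 k2]].
  exists (Rmin (Rmin d1 d2) (Rmin (b - a) (c - b))). split.
  repeat apply Rmin_pos; lra.
  intros y hy. assert (hy1 : Rabs (y - b) < d1) by (eapply Rlt_le_trans; [apply hy|]; eapply Rle_trans; apply Rmin_l).
  assert (hy2 : Rabs (y - b) < d2) by (eapply Rlt_le_trans; [apply hy|]; eapply Rle_trans; [apply Rmin_l| apply Rmin_r]).
  assert (hy3 : Rabs (y - b) < b - a) by (eapply Rlt_le_trans; [apply hy|]; eapply Rle_trans; [apply Rmin_r| apply Rmin_l]).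
  assert (hy4 : Rabs (y - b) < c - b) by (eapply Rlt_le_trans; [apply hy|]; eapply Rle_trans; [apply Rmin_r| apply Rmin_r]).
  apply Rabs_def2 in hy3. apply Rabs_def2 in hy4.
  destruct (Rtotal_order y b) as [l|[->|g]].
  - rewrite h1 by lra. rewrite e1. apply k1; auto.
  - unfold Rminus. rewrite Rplus_opp_r, Rabs_R0. lra.
  - rewrite h2 by lra. rewrite e1, e2. apply k2; auto.
Qed.

Lemma cont_local f F a b x : a < x < b -> (forall s, a < s < b -> f s = F s) -> continuity_pt F x -> continuity_pt f x.
Proof.
  intros hx h c. apply (continuity_pt_locally_ext F f (Rmin (x - a) (b - x)) x).
  - apply Rmin_pos; lra.
  - intros y hy. unfold Rdist in hy.
    assert (Rabs (y - x) < x - a) by (eapply Rlt_le_trans; [apply hy| apply Rmin_l]).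
    assert (Rabs (y - x) < b - x) by (eapply Rlt_le_trans; [apply hy| apply Rmin_r]).
    apply Rabs_def2 in H, H0. symmetry; apply h; lra.
  - exact c.
Qed.

Lemma deriv_local f F a b x l : a < x < b -> (forall s, a < s < b -> f s = F s) -> derivable_pt_lim F x l -> derivable_pt_lim f x l.
Proof.
  intros hx h d. apply derivable_pt_lim_locally_ext with F a b; auto.
  intros; symmetry; auto.
Qed.

Lemma deriv_shift f c x l : derivable_pt_lim f (x - c) l -> derivable_pt_lim (fun s => f (s - c)) x l.
Proof.
  intros H. apply is_derive_Reals. apply is_derive_Reals in H.
  replace l with (1 * l) by ring.
  apply (is_derive_comp f (fun s => s - c)). auto. auto_derive; auto; try ring.
Qed.

Lemma cont_shift f c x : continuity_pt f (x - c) -> continuity_pt (fun s => f (s - c)) x.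
Proof.
  intros H. apply cont_eps_intro. intros eps he.
  destruct (cont_eps_elim _ _ H eps he) as [d [hd k]]. exists d; split; auto.
  intros y hy. apply k. replace (y - c - (x - c)) with (y - x) by ring. auto.
Qed.

Definition flr (x : R) : Z := (up x - 1)%Z.

Lemma flr_spec x : IZR (flr x) <= x < IZR (flr x) + 1.
Proof.
  unfold flr. rewrite minus_IZR. destruct (archimed x). lra.
Qed.

Lemma flr_unique x m : IZR m <= x < IZR m + 1 -> flr x = m.
Proof.
  intros H. unfold flr. assert (h := up_tech x m ltac:(lra) ltac:(rewrite plus_IZR; simpl; lra)).
  rewrite <- h. ring.
Qed.

Definition per (T : R) (f : R -> R) (t : R) : R := f (t - T * IZR (flr (t / T))).

Lemma per_in T f t : 0 < T -> 0 <= t < T -> per T f t = f t.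
Proof.
  intros hT ht. unfold per. rewrite (flr_unique (t/T) 0).
  simpl. f_equal; ring.
  simpl. split. apply Rmult_le_pos; [lra| left; apply Rinv_0_lt_compat; lra].
  apply Rmult_lt_reg_r with T. lra. unfold Rdiv. rewrite Rmult_assoc, Rinv_l by lra. lra.
Qed.

Lemma per_plusT T f t : 0 < T -> per T f (t + T) = per T f t.
Proof.
  intros hT. unfold per. rewrite (flr_unique ((t+T)/T) (flr (t/T) + 1)).
  rewrite plus_IZR. f_equal. simpl. ring.
  destruct (flr_spec (t/T)). rewrite plus_IZR. simpl.
  replace ((t+T)/T) with (t/T + 1) by (field; lra). lra.
Qed.

Lemma per_repr T f t : 0 < T -> exists s, 0 <= s < T /\ per T f t = f s /\ exists k : Z, t = s + T * IZR k.
Proof.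
  intros hT. exists (t - T * IZR (flr (t/T))). destruct (flr_spec (t/T)) as [h1 h2].
  split. split.
  - apply Rmult_le_compat_l with (r := T) in h1. 2: lra.
    replace (T * (t/T)) with t in h1 by (field; lra). lra.
  - apply Rmult_lt_compat_l with (r := T) in h2. 2: lra.
    replace (T * (t/T)) with t in h2 by (field; lra). lra.
  - split. reflexivity. exists (flr (t/T)). ring.
Qed.

Lemma per_local T y f t : 0 < y < T -> (forall s, -y <= s < 0 -> f (s + T) = f s) ->
  exists c, 0 <= t - c < T /\ forall s, c - y < s < c + T -> per T f s = f (s - c).
Proof.
  intros hy hf. set (k := flr (t / T)). exists (T * IZR k).
  destruct (flr_spec (t/T)) as [h1 h2]. fold k in h1, h2.
  split. split.
  - apply Rmult_le_compat_l with (r := T) in h1. 2: lra.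
    replace (T * (t/T)) with t in h1 by (field; lra). lra.
  - apply Rmult_lt_compat_l with (r := T) in h2. 2: lra.
    replace (T * (t/T)) with t in h2 by (field; lra). lra.
  - intros s hs. unfold per.
    destruct (Rle_dec (T * IZR k) s).
    + rewrite (flr_unique (s/T) k). auto.
      split.
      * apply Rmult_le_reg_r with T. lra. replace (s / T * T) with s by (field; lra). lra.
      * apply Rmult_lt_reg_r with T. lra. replace (s / T * T) with s by (field; lra). lra.
    + rewrite (flr_unique (s/T) (k - 1)).
      * rewrite minus_IZR. simpl. replace (s - T * (IZR k - 1)) with ((s - T * IZR k) + T) by ring.
        apply hf. lra.
      * rewrite minus_IZR. simpl. split.
        -- apply Rmult_le_reg_r with T. lra. replace (s / T * T) with s by (field; lra). lra.
        -- apply Rmult_lt_reg_r with T. lra. replace (s / T * T) with s by (field; lra). lra.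
Qed.

Definition perc (T t : R) : R := T * IZR (flr (t / T)).

Lemma per_local2 T y f t : 0 < y < T -> (forall s, -y <= s < 0 -> f (s + T) = f s) ->
  0 <= t - perc T t < T /\ forall s, perc T t - y < s < perc T t + T -> per T f s = f (s - perc T t).
Proof.
  intros hy hf. unfold perc. set (k := flr (t / T)).
  destruct (flr_spec (t/T)) as [h1 h2]. fold k in h1, h2.
  split. split.
  - apply Rmult_le_compat_l with (r := T) in h1. 2: lra.
    replace (T * (t/T)) with t in h1 by (field; lra). lra.
  - apply Rmult_lt_compat_l with (r := T) in h2. 2: lra.
    replace (T * (t/T)) with t in h2 by (field; lra). lra.
  - intros s hs. unfold per.
    destruct (Rle_dec (T * IZR k) s).
    + rewrite (flr_unique (s/T) k). auto.
      split.
      * apply Rmult_le_reg_r with T. lra. replace (s / T * T) with s by (field; lra). lra.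
      * apply Rmult_lt_reg_r with T. lra. replace (s / T * T) with s by (field; lra). lra.
    + rewrite (flr_unique (s/T) (k - 1)).
      * rewrite minus_IZR. simpl. replace (s - T * (IZR k - 1)) with ((s - T * IZR k) + T) by ring.
        apply hf. lra.
      * rewrite minus_IZR. simpl. split.
        -- apply Rmult_le_reg_r with T. lra. replace (s / T * T) with s by (field; lra). lra.
        -- apply Rmult_lt_reg_r with T. lra. replace (s / T * T) with s by (field; lra). lra.
Qed.

Lemma per_cont T y f t : 0 < y < T -> (forall s, -y <= s < 0 -> f (s + T) = f s) ->
  (forall s, 0 <= s < T -> continuity_pt f s) -> continuity_pt (per T f) t.
Proof.
  intros hy hf hc. destruct (per_local T y f t hy hf) as [c [hc1 hc2]].
  apply cont_local with (fun s => f (s - c)) (c - y) (c + T). lra. auto.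
  apply cont_shift. apply hc. lra.
Qed.

Definition pw (y z : R) (FA FB FC FD : R -> R) (t : R) : R :=
  if Rlt_dec t 0 then FD (t + (2*y + 2*z)) else
  if Rle_dec t y then FA t else
  if Rle_dec t (y + z) then FB t else
  if Rle_dec t (y + 2*z) then FC t else FD t.

Lemma pw_A y z FA FB FC FD t : 0 < y -> 0 < z -> 0 <= t <= y -> pw y z FA FB FC FD t = FA t.
Proof. intros. unfold pw. destruct (Rlt_dec t 0); [lra|]. destruct (Rle_dec t y); [auto|lra]. Qed.
Lemma pw_B y z FA FB FC FD t : 0 < y -> 0 < z -> y < t <= y + z -> pw y z FA FB FC FD t = FB t.
Proof. intros. unfold pw. destruct (Rlt_dec t 0); [lra|]. destruct (Rle_dec t y); [lra|]. destruct (Rle_dec t (y+z)); [auto|lra]. Qed.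
Lemma pw_C y z FA FB FC FD t : 0 < y -> 0 < z -> y + z < t <= y + 2*z -> pw y z FA FB FC FD t = FC t.
Proof. intros. unfold pw. destruct (Rlt_dec t 0); [lra|]. destruct (Rle_dec t y); [lra|]. destruct (Rle_dec t (y+z)); [lra|].
  destruct (Rle_dec t (y+2*z)); [auto|lra]. Qed.
Lemma pw_D y z FA FB FC FD t : 0 < y -> 0 < z -> y + 2*z < t -> pw y z FA FB FC FD t = FD t.
Proof. intros. unfold pw. destruct (Rlt_dec t 0); [lra|]. destruct (Rle_dec t y); [lra|]. destruct (Rle_dec t (y+z)); [lra|].
  destruct (Rle_dec t (y+2*z)); [lra|auto]. Qed.
Lemma pw_neg y z FA FB FC FD t : t < 0 -> pw y z FA FB FC FD t = FD (t + (2*y+2*z)).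
Proof. intros. unfold pw. destruct (Rlt_dec t 0); [auto|lra]. Qed.

Lemma pw_shift y z FA FB FC FD : 0 < y -> 0 < z -> FC (y + 2*z) = FD (y + 2*z) ->
  forall s, -y <= s < 0 -> pw y z FA FB FC FD (s + (2*y+2*z)) = pw y z FA FB FC FD s.
Proof.
  intros hy hz hCD s hs. rewrite (pw_neg _ _ _ _ _ _ s) by lra.
  destruct (Req_dec s (-y)) as [->|ne].
  - rewrite pw_C by lra. replace (- y + (2 * y + 2 * z)) with (y + 2*z) by ring. auto.
  - rewrite pw_D by lra. auto.
Qed.

Lemma pw_cont y z FA FB FC FD : 0 < y -> 0 < z ->
  FA y = FB y -> FB (y+z) = FC (y+z) -> FC (y + 2*z) = FD (y + 2*z) -> FD (2*y+2*z) = FA 0 ->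
  (forall s, continuity_pt FA s) -> (forall s, continuity_pt FB s) ->
  (forall s, continuity_pt FC s) -> (forall s, continuity_pt FD s) ->
  forall s, 0 <= s < 2*y+2*z -> continuity_pt (pw y z FA FB FC FD) s.
Proof.
  intros hy hz e1 e2 e3 e4 cA cB cC cD s hs.
  set (f := pw y z FA FB FC FD).
  destruct (Rtotal_order s 0) as [l|[->|g0]]. lra.
  - apply cont_glue with (fun t => FD (t + (2*y+2*z))) FA (-y) y. lra.
    intros; unfold f; apply pw_neg; lra. intros; unfold f; apply pw_A; lra.
    unfold f; rewrite pw_A by lra. rewrite Rplus_0_l; auto. rewrite Rplus_0_l; auto.
    apply continuity_pt_comp with (f1 := fun t => t + (2*y+2*z)) (f2 := FD). 
    apply derivable_continuous_pt. apply derivable_pt_plus. apply derivable_pt_id. apply derivable_pt_const. apply cD.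
    auto.
  - destruct (Rtotal_order s y) as [l|[->|g1]].
    + apply cont_local with FA 0 y. lra. intros; unfold f; apply pw_A; lra. auto.
    + apply cont_glue with FA FB 0 (y+z). lra. intros; unfold f; apply pw_A; lra. intros; unfold f; apply pw_B; lra.
      unfold f; apply pw_A; lra. auto. auto. auto.
    + destruct (Rtotal_order s (y+z)) as [l|[->|g2]].
      * apply cont_local with FB y (y+z). lra. intros; unfold f; apply pw_B; lra. auto.
      * apply cont_glue with FB FC y (y+2*z). lra. intros; unfold f; apply pw_B; lra. intros; unfold f; apply pw_C; lra.
        unfold f; apply pw_B; lra. auto. auto. auto.
      * destruct (Rtotal_order s (y+2*z)) as [l|[->|g3]].
        -- apply cont_local with FC (y+z) (y+2*z). lra. intros; unfold f; apply pw_C; lra. auto.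
        -- apply cont_glue with FC FD (y+z) (2*y+2*z). lra. intros; unfold f; apply pw_C; lra. intros; unfold f; apply pw_D; lra.
           unfold f; apply pw_C; lra. auto. auto. auto.
        -- apply cont_local with FD (y+2*z) (2*y+2*z+1). lra. intros; unfold f; apply pw_D; lra. auto.
Qed.

Lemma Ef_ode q x : exp (q * x) = 1 + q * Ef q x.
Proof. unfold Ef. destruct (Req_EM_T q 0) as [->|h]. rewrite !Rmult_0_l, exp_0. ring. field. auto. Qed.

Definition Tp (y z : R) := 2*y + 2*z.
Definition alj (a c : nat -> R) e j := e * c j / (1 + qq a e j).
Definition bej (a b c d : nat -> R) e j := e * d j - alj a c e j * pp b e j.
Definition useg (a b : nat -> R) e j c0 := fun s => pp b e j * Ef (qq a e j) (s - c0).
Definition wseg (a b c d : nat -> R) e j c0 K := fun s => alj a c e j * useg a b e j c0 s + bej a b c d e j + K * exp (-s).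

Lemma useg_deriv a b e j c0 s : derivable_pt_lim (useg a b e j c0) s (Xu a b e j (useg a b e j c0 s)).
Proof.
  unfold useg, Xu. apply is_derive_Reals.
  replace (su j + e * (a j * (pp b e j * Ef (qq a e j) (s - c0)) + b j)) with (pp b e j * (1 * exp (qq a e j * (s - c0)))).
  2: { rewrite Ef_ode. unfold pp, qq. ring. }
  apply is_derive_scal. apply (is_derive_comp (Ef (qq a e j)) (fun t => t - c0)).
  apply is_derive_Reals, Ef_deriv. auto_derive; auto; ring.
Qed.

Lemma useg_cont a b e j c0 s : continuity_pt (useg a b e j c0) s.
Proof. apply derivable_continuous_pt. eexists. apply useg_deriv. Qed.

Lemma wseg_deriv a b c d e j c0 K s : 1 + qq a e j <> 0 ->
  derivable_pt_lim (wseg a b c d e j c0 K) s (Xw c d e j (useg a b e j c0 s) (wseg a b c d e j c0 K s)).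
Proof.
  intros hq. unfold wseg.
  assert (hu := useg_deriv a b e j c0 s).
  replace (Xw c d e j (useg a b e j c0 s) (alj a c e j * useg a b e j c0 s + bej a b c d e j + K * exp (- s)))
    with (alj a c e j * Xu a b e j (useg a b e j c0 s) + 0 + K * ((-1) * exp (-s))).
  2: { unfold Xw, Xu, bej, alj, pp, qq in *. field. unfold qq in hq. auto. }
  change (derivable_pt_lim (plus_fct (plus_fct (mult_real_fct (alj a c e j) (useg a b e j c0)) (fct_cte (bej a b c d e j)))
     (mult_real_fct K (comp exp (opp_fct id)))) s (alj a c e j * Xu a b e j (useg a b e j c0 s) + 0 + K * ((-1) * exp (-s)))).
  apply derivable_pt_lim_plus. apply derivable_pt_lim_plus. apply derivable_pt_lim_scal. auto.
  apply derivable_pt_lim_const. apply derivable_pt_lim_scal.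
  replace ((-1) * exp (-s)) with (exp (opp_fct id s) * (-1)) by (unfold opp_fct, id; ring).
  apply derivable_pt_lim_comp. apply derivable_pt_lim_opp. apply derivable_pt_lim_id. apply derivable_pt_lim_exp.
Qed.

Lemma wseg_cont a b c d e j c0 K s : 1 + qq a e j <> 0 -> continuity_pt (wseg a b c d e j c0 K) s.
Proof. intros h. apply derivable_continuous_pt. eexists. apply wseg_deriv; auto. Qed.

Lemma lin_deriv v0 sg s : derivable_pt_lim (fun t => v0 + sg * t) s sg.
Proof. apply is_derive_Reals. auto_derive; auto; ring. Qed.

Definition uA a b e (y z : R) := useg a b e 2 0.
Definition uB a b e y z := useg a b e 3 (y + z).
Definition uC a b e y z := useg a b e 4 (y + z).
Definition uD a b e y z := useg a b e 1 (Tp y z).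
Definition vA (y z : R) := fun s => y + (-1) * s.
Definition vC (y z : R) := fun s => - (y + 2*z) + 1 * s.
Definition mval a b e y z := uA a b e y z y.
Definition xval a b e y z := uC a b e y z (y + 2*z).
Definition J1 a b c d e y z := (alj a c e 2 * mval a b e y z + bej a b c d e 2 - alj a c e 3 * mval a b e y z - bej a b c d e 3) * exp y.
Definition J2 a b c d e y z := (bej a b c d e 3 - bej a b c d e 4) * exp (y + z).
Definition J3 a b c d e y z := (alj a c e 4 * xval a b e y z + bej a b c d e 4 - alj a c e 1 * xval a b e y z - bej a b c d e 1) * exp (y + 2*z).
Definition KA a b c d e y z := (bej a b c d e 1 - bej a b c d e 2 + (J1 a b c d e y z + J2 a b c d e y z + J3 a b c d e y z) * exp (- Tp y z)) / (1 - exp (- Tp y z)).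
Definition KB a b c d e y z := KA a b c d e y z + J1 a b c d e y z.
Definition KC a b c d e y z := KB a b c d e y z + J2 a b c d e y z.
Definition KD a b c d e y z := KC a b c d e y z + J3 a b c d e y z.
Definition wA a b c d e y z := wseg a b c d e 2 0 (KA a b c d e y z).
Definition wB a b c d e y z := wseg a b c d e 3 (y + z) (KB a b c d e y z).
Definition wC a b c d e y z := wseg a b c d e 4 (y + z) (KC a b c d e y z).
Definition wD a b c d e y z := wseg a b c d e 1 (Tp y z) (KD a b c d e y z).

Definition pwU a b e y z := pw y z (uA a b e y z) (uB a b e y z) (uC a b e y z) (uD a b e y z).
Definition pwV y z := pw y z (vA y z) (vA y z) (vC y z) (vC y z).
Definition pwW a b c d e y z := pw y z (wA a b c d e y z) (wB a b c d e y z) (wC a b c d e y z) (wD a b c d e y z).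
Definition GU a b e y z := per (Tp y z) (pwU a b e y z).
Definition GV y z := per (Tp y z) (pwV y z).
Definition GW a b c d e y z := per (Tp y z) (pwW a b c d e y z).

Lemma exp_y_neg y : exp y * exp (-y) = 1.
Proof. rewrite <- exp_plus. replace (y + -y) with 0 by ring. apply exp_0. Qed.

Lemma match_u a b e y z : EqI a b e y z -> EqII a b e z y ->
  uA a b e y z y = uB a b e y z y /\ uB a b e y z (y+z) = uC a b e y z (y+z) /\
  uC a b e y z (y + 2*z) = uD a b e y z (y + 2*z) /\ uD a b e y z (2*y+2*z) = uA a b e y z 0 /\
  uB a b e y z (y+z) = 0 /\ uA a b e y z 0 = 0.
Proof.
  intros h1 h2. unfold uA, uB, uC, uD, useg, Tp, EqI, EqII in *.
  replace (y - 0) with y by ring. replace (y - (y+z)) with (-z) by ring.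
  replace (y + z - (y + z)) with 0 by ring. replace (y + 2*z - (y+z)) with z by ring.
  replace (y + 2*z - (2*y + 2*z)) with (-y) by ring. replace (2*y+2*z - (2*y+2*z)) with 0 by ring.
  replace (0 - 0) with 0 by ring. rewrite !Ef_0. repeat split; auto; ring.
Qed.

Lemma match_v y z : vA y z (y + z) = vC y z (y + z) /\ vC y z (2*y+2*z) = vA y z 0.
Proof. unfold vA, vC. split; ring. Qed.

Lemma match_w a b c d e y z : EqI a b e y z -> EqII a b e z y -> 0 < y -> 0 < z ->
  wA a b c d e y z y = wB a b c d e y z y /\ wB a b c d e y z (y+z) = wC a b c d e y z (y+z) /\
  wC a b c d e y z (y + 2*z) = wD a b c d e y z (y + 2*z) /\ wD a b c d e y z (2*y+2*z) = wA a b c d e y z 0.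
Proof.
  intros h1 h2 hy hz. destruct (match_u a b e y z h1 h2) as (m1 & m2 & m3 & m4 & m5 & m6).
  unfold wA, wB, wC, wD, wseg.
  assert (hT : 0 < Tp y z) by (unfold Tp; lra).
  assert (exp (- Tp y z) < 1) by (rewrite <- exp_0; apply exp_increasing; lra).
  fold (uA a b e y z) (uB a b e y z) (uC a b e y z) (uD a b e y z).
  repeat split.
  - rewrite <- m1. unfold KB, J1, mval. 
    replace (alj a c e 3 * uA a b e y z y + bej a b c d e 3 + (KA a b c d e y z + (alj a c e 2 * uA a b e y z y + bej a b c d e 2 -
      alj a c e 3 * uA a b e y z y - bej a b c d e 3) * exp y) * exp (- y))
      with (alj a c e 3 * uA a b e y z y + bej a b c d e 3 + KA a b c d e y z * exp (-y) + (alj a c e 2 * uA a b e y z y + bej a b c d e 2 -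
      alj a c e 3 * uA a b e y z y - bej a b c d e 3) * (exp y * exp (- y))) by ring.
    rewrite exp_y_neg. ring.
  - rewrite <- m2, m5. unfold KC, J2.
    replace ((KB a b c d e y z + (bej a b c d e 3 - bej a b c d e 4) * exp (y + z)) * exp (- (y + z)))
      with (KB a b c d e y z * exp (- (y + z)) + (bej a b c d e 3 - bej a b c d e 4) * (exp (y + z) * exp (- (y + z)))) by ring.
    rewrite exp_y_neg. ring.
  - rewrite <- m3. unfold KD, J3, xval.
    replace ((KC a b c d e y z + (alj a c e 4 * uC a b e y z (y + 2 * z) + bej a b c d e 4 - alj a c e 1 * uC a b e y z (y + 2 * z) - bej a b c d e 1) * exp (y + 2 * z)) * exp (- (y + 2 * z)))
      with (KC a b c d e y z * exp (- (y + 2 * z)) + (alj a c e 4 * uC a b e y z (y + 2 * z) + bej a b c d e 4 - alj a c e 1 * uC a b e y z (y + 2 * z) - bej a b c d e 1) * (exp (y + 2 * z) * exp (- (y + 2 * z)))) by ring.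
    rewrite exp_y_neg. ring.
  - rewrite m4, m6. unfold KD, KC, KB. replace (- 0) with 0 by ring. rewrite exp_0.
    replace (2*y+2*z) with (Tp y z) by reflexivity. unfold KA. field. lra.
Qed.

Lemma in_region_cases j u v : in_region j u v ->
  (j = 1%nat /\ 0 < u /\ 0 < v) \/ (j = 2%nat /\ u < 0 /\ 0 < v) \/ (j = 3%nat /\ u < 0 /\ v < 0) \/ (j = 4%nat /\ 0 < u /\ v < 0).
Proof. destruct j as [|[|[|[|[|j]]]]]; simpl; intuition. Qed.

Lemma int_deriv (G F : R -> R) c lo hi t l : lo < t - c < hi ->
  (forall s, lo < s - c < hi -> G s = F (s - c)) -> derivable_pt_lim F (t - c) l -> derivable_pt_lim G t l.
Proof.
  intros ht hG hF. apply deriv_local with (fun s => F (s - c)) (c + lo) (c + hi). lra.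
  intros s hs. apply hG. lra. apply deriv_shift. auto.
Qed.

Definition orbit_hyp a b e y z := 0 < y /\ 0 < z /\ EqI a b e y z /\ EqII a b e z y /\ Rabs e * Ab a b <= /2.

Lemma q_ne a b e j : Rabs e * Ab a b <= /2 -> (j = 1 \/ j = 2 \/ j = 3 \/ j = 4)%nat -> 1 + qq a e j <> 0.
Proof.
  intros h hj. destruct (qb_bounds a b e) as (q1 & q2 & q3 & q4 & _).
  apply Rabs_le_between in q1, q2, q3, q4.
  destruct hj as [ -> | [ -> | [ -> | -> ] ] ]; lra.
Qed.

Lemma seg_signs a b e y z : orbit_hyp a b e y z ->
  (forall s, 0 < s < y -> uA a b e y z s < 0 /\ 0 < vA y z s) /\
  (forall s, y < s < y + z -> uB a b e y z s < 0 /\ vA y z s < 0) /\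
  (forall s, y + z < s < y + 2*z -> 0 < uC a b e y z s /\ vC y z s < 0) /\
  (forall s, y + 2*z < s < 2*y+2*z -> 0 < uD a b e y z s /\ 0 < vC y z s).
Proof.
  intros (hy & hz & h1 & h2 & he). destruct (p_signs a b e he) as (s1 & s2 & s3 & s4 & _).
  unfold uA, uB, uC, uD, useg, vA, vC, Tp.
  split; [|split; [|split]]; intros s hs; split.
  - assert (0 < Ef (qq a e 2) (s - 0)) by (apply Ef_pos; lra). nra.
  - lra.
  - assert (Ef (qq a e 3) (s - (y+z)) < 0) by (apply Ef_neg; lra). nra.
  - lra.
  - assert (0 < Ef (qq a e 4) (s - (y+z))) by (apply Ef_pos; lra). nra.
  - lra.
  - assert (Ef (qq a e 1) (s - (2*y+2*z)) < 0) by (apply Ef_neg; lra). nra.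
  - lra.
Qed.

Lemma g_local a b c d e y z t : orbit_hyp a b e y z ->
  0 <= t - perc (Tp y z) t < Tp y z /\
  forall s, perc (Tp y z) t - y < s < perc (Tp y z) t + Tp y z ->
    GU a b e y z s = pwU a b e y z (s - perc (Tp y z) t) /\
    GV y z s = pwV y z (s - perc (Tp y z) t) /\
    GW a b c d e y z s = pwW a b c d e y z (s - perc (Tp y z) t).
Proof.
  intros H. destruct H as (hy & hz & h1 & h2 & he) eqn:EH.
  destruct (match_u a b e y z h1 h2) as (m1 & m2 & m3 & m4 & m5 & m6).
  destruct (match_w a b c d e y z h1 h2 hy hz) as (w1 & w2 & w3 & w4).
  assert (hT : 0 < y < Tp y z) by (unfold Tp; lra).
  destruct (per_local2 (Tp y z) y (pwU a b e y z) t hT) as [k1 k2].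
  { intros s hs. apply pw_shift; auto. }
  destruct (per_local2 (Tp y z) y (pwV y z) t hT) as [_ k3].
  { intros s hs. apply pw_shift; auto. }
  destruct (per_local2 (Tp y z) y (pwW a b c d e y z) t hT) as [_ k4].
  { intros s hs. apply pw_shift; auto. }
  split; auto. intros s hs. split; [|split]; [apply k2 | apply k3 | apply k4]; auto.
Qed.

Lemma g_periodic_orbit a b c d e y z : orbit_hyp a b e y z ->
  periodic_orbit a b c d e (GU a b e y z) (GV y z) (GW a b c d e y z).
Proof.
  intros H. pose proof H as H'. destruct H' as (hy & hz & h1 & h2 & he).
  destruct (match_u a b e y z h1 h2) as (m1 & m2 & m3 & m4 & m5 & m6).
  destruct (match_w a b c d e y z h1 h2 hy hz) as (w1 & w2 & w3 & w4).
  destruct (match_v y z) as (v1 & v2).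
  assert (hT : 0 < y < Tp y z) by (unfold Tp; lra).
  assert (qn : forall j, (j = 1 \/ j = 2 \/ j = 3 \/ j = 4)%nat -> 1 + qq a e j <> 0) by (intros; apply (q_ne a b e); auto).
  destruct (seg_signs a b e y z H) as (sA & sB & sC & sD).
  split.
  - intros t. split; [|split].
    + apply per_cont with y; auto. intros s hs; apply pw_shift; auto.
      intros s hs. apply pw_cont; auto; intros; apply useg_cont.
    + apply per_cont with y; auto. intros s hs; apply pw_shift; auto.
      intros s hs. apply pw_cont; auto; intros; apply derivable_continuous_pt; eexists; apply lin_deriv.
    + apply per_cont with y; auto. intros s hs; apply pw_shift; auto.
      intros s hs. apply pw_cont; auto; intros; apply wseg_cont; apply qn; auto.
  - exists (Tp y z). split. unfold Tp; lra. split.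
    + intros t. unfold GU, GV, GW. rewrite !per_plusT by lra. auto.
    + split.
      * exists (0 :: y :: (y+z) :: (y + 2*z) :: Tp y z :: nil).
        intros t ht hz0. destruct (Req_dec t (Tp y z)) as [->|ne]. simpl; tauto.
        assert (ht' : 0 <= t < Tp y z) by lra.
        unfold GU, GV in hz0. rewrite !per_in in hz0 by lra.
        unfold pwU, pwV in hz0. simpl.
        destruct (Rtotal_order t 0) as [l|[->|g0]]; [lra|tauto|].
        destruct (Rtotal_order t y) as [l|[->|g1]].
        { rewrite !pw_A in hz0 by lra. destruct (sA t ltac:(lra)). nra. }
        tauto.
        destruct (Rtotal_order t (y+z)) as [l|[->|g2]].
        { rewrite pw_B in hz0 by lra. rewrite pw_B in hz0 by lra. destruct (sB t ltac:(lra)). nra. }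
        tauto.
        destruct (Rtotal_order t (y+2*z)) as [l|[->|g3]].
        { rewrite pw_C in hz0 by lra. rewrite pw_C in hz0 by lra. destruct (sC t ltac:(lra)). nra. }
        tauto.
        { unfold Tp in ht'. rewrite pw_D in hz0 by lra. rewrite pw_D in hz0 by lra. destruct (sD t ltac:(lra)). nra. }
      * intros t j hj.
        destruct (g_local a b c d e y z t H) as [[k1 k2] k3].
        set (cc := perc (Tp y z) t) in *.
        destruct (k3 t ltac:(lra)) as (eU & eV & eW).
        rewrite eU, eV in hj. rewrite eU, eW. unfold pwU, pwV, pwW in *.
        set (sg := t - cc) in *.
        assert (loc : forall lo hi, 0 <= lo -> hi <= Tp y z -> forall s, lo < s - cc < hi ->
           GU a b e y z s = pwU a b e y z (s - cc) /\ GV y z s = pwV y z (s - cc) /\ GW a b c d e y z s = pwW a b c d e y z (s - cc)).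
        { intros lo hi hlo hhi s hs. apply k3. lra. }
        unfold Tp in k2, loc.
        destruct (Rtotal_order sg 0) as [l|[E|g0]]. lra.
        { rewrite E in hj. rewrite pw_A in hj by lra. rewrite m6 in hj. apply in_region_cases in hj. lra. }
        destruct (Rtotal_order sg y) as [l|[E|g1]].
        { rewrite !pw_A in hj |- * by lra. destruct (sA sg ltac:(lra)).
          apply in_region_cases in hj. destruct hj as [[_ [h _]]|[[-> _]|[[_ [_ h]]|[_ [h _]]]]]; try lra.
          split; [|split].
          - apply int_deriv with (uA a b e y z) cc 0 y; auto. intros s hs. rewrite (proj1 (loc 0 y ltac:(lra) ltac:(lra) s hs)). unfold pwU. apply pw_A; lra.
            apply useg_deriv.
          - apply int_deriv with (vA y z) cc 0 y; auto. intros s hs. rewrite (proj1 (proj2 (loc 0 y ltac:(lra) ltac:(lra) s hs))). unfold pwV. apply pw_A; lra.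
            apply lin_deriv.
          - apply int_deriv with (wA a b c d e y z) cc 0 y; auto. intros s hs. rewrite (proj2 (proj2 (loc 0 y ltac:(lra) ltac:(lra) s hs))). unfold pwW. apply pw_A; lra.
            apply wseg_deriv. apply qn; auto. }
        { rewrite E in hj. rewrite !pw_A in hj by lra. apply in_region_cases in hj. unfold vA in hj. lra. }
        destruct (Rtotal_order sg (y+z)) as [l|[E|g2]].
        { rewrite !pw_B in hj |- * by lra. destruct (sB sg ltac:(lra)).
          apply in_region_cases in hj. destruct hj as [[_ [h _]]|[[_ [_ h]]|[[-> _]|[_ [h _]]]]]; try lra.
          split; [|split].
          - apply int_deriv with (uB a b e y z) cc y (y+z); auto. intros s hs. rewrite (proj1 (loc y (y+z) ltac:(lra) ltac:(lra) s hs)). unfold pwU. apply pw_B; lra.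
            apply useg_deriv.
          - apply int_deriv with (vA y z) cc y (y+z); auto. intros s hs. rewrite (proj1 (proj2 (loc y (y+z) ltac:(lra) ltac:(lra) s hs))). unfold pwV. apply pw_B; lra.
            apply lin_deriv.
          - apply int_deriv with (wB a b c d e y z) cc y (y+z); auto. intros s hs. rewrite (proj2 (proj2 (loc y (y+z) ltac:(lra) ltac:(lra) s hs))). unfold pwW. apply pw_B; lra.
            apply wseg_deriv. apply qn; auto. }
        { rewrite E in hj. rewrite pw_B in hj by lra. rewrite m5 in hj. apply in_region_cases in hj. lra. }
        destruct (Rtotal_order sg (y+2*z)) as [l|[E|g3]].
        { rewrite !pw_C in hj |- * by lra. destruct (sC sg ltac:(lra)).
          apply in_region_cases in hj. destruct hj as [[_ [_ h]]|[[_ [h _]]|[[_ [h _]]|[-> _]]]]; try lra.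
          split; [|split].
          - apply int_deriv with (uC a b e y z) cc (y+z) (y+2*z); auto. intros s hs. rewrite (proj1 (loc (y+z) (y+2*z) ltac:(lra) ltac:(lra) s hs)). unfold pwU. apply pw_C; lra.
            apply useg_deriv.
          - apply int_deriv with (vC y z) cc (y+z) (y+2*z); auto. intros s hs. rewrite (proj1 (proj2 (loc (y+z) (y+2*z) ltac:(lra) ltac:(lra) s hs))). unfold pwV. apply pw_C; lra.
            apply lin_deriv.
          - apply int_deriv with (wC a b c d e y z) cc (y+z) (y+2*z); auto. intros s hs. rewrite (proj2 (proj2 (loc (y+z) (y+2*z) ltac:(lra) ltac:(lra) s hs))). unfold pwW. apply pw_C; lra.
            apply wseg_deriv. apply qn; auto. }
        { rewrite E in hj. rewrite !pw_C in hj by lra. apply in_region_cases in hj. unfold vC in hj. lra. }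
        { rewrite !pw_D in hj |- * by lra. destruct (sD sg ltac:(lra)).
          apply in_region_cases in hj. destruct hj as [[-> _]|[[_ [h _]]|[[_ [h _]]|[_ [_ h]]]]]; try lra.
          split; [|split].
          - apply int_deriv with (uD a b e y z) cc (y+2*z) (2*y+2*z); auto. intros s hs. rewrite (proj1 (loc (y+2*z) (2*y+2*z) ltac:(lra) ltac:(lra) s hs)). unfold pwU. apply pw_D; lra.
            apply useg_deriv.
          - apply int_deriv with (vC y z) cc (y+2*z) (2*y+2*z); auto. intros s hs. rewrite (proj1 (proj2 (loc (y+2*z) (2*y+2*z) ltac:(lra) ltac:(lra) s hs))). unfold pwV. apply pw_D; lra.
            apply lin_deriv.
          - apply int_deriv with (wD a b c d e y z) cc (y+2*z) (2*y+2*z); auto. intros s hs. rewrite (proj2 (proj2 (loc (y+2*z) (2*y+2*z) ltac:(lra) ltac:(lra) s hs))). unfold pwW. apply pw_D; lra.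
            apply wseg_deriv. apply qn; auto. }
Qed.

Lemma const_on f a b : a < b -> (forall t, a < t < b -> derivable_pt_lim f t 0) ->
  (forall t, a <= t <= b -> continuity_pt f t) -> forall t, a <= t <= b -> f t = f a.
Proof.
  intros hab hd hc t ht.
  set (pr := fun x (P : a < x < b) => exist (fun l => derivable_pt_abs f x l) 0 (hd x P) : derivable_pt f x).
  apply (null_derivative_loc f a b pr hc). intros x P. reflexivity. auto.
Qed.

Lemma deriv_Ef_shift q t0 t : derivable_pt_lim (fun s => Ef q (s - t0)) t (exp (q * (t - t0))).
Proof. apply deriv_shift. apply Ef_deriv. Qed.

Lemma deriv_exp_lin q t0 t : derivable_pt_lim (fun s => exp (q * (s - t0))) t (exp (q * (t - t0)) * q).
Proof. apply is_derive_Reals. auto_derive; auto; try (unfold Rminus; ring). Qed.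

Lemma seg_formula (f : R -> R) p q s s' t0 : s < s' ->
  (forall t, s < t < s' -> derivable_pt_lim f t (p + q * f t)) ->
  (forall t, s <= t <= s' -> continuity_pt f t) -> s <= t0 <= s' ->
  forall t, s <= t <= s' -> f t = f t0 * exp (q * (t - t0)) + p * Ef q (t - t0).
Proof.
  intros hs hd hc ht0 t ht.
  set (F := fun t => f t0 * exp (q * (t - t0)) + p * Ef q (t - t0)).
  set (psi := fun t => (f t - F t) * exp (- q * t)).
  assert (HF : forall t, derivable_pt_lim F t (p + q * F t)).
  { intros x. unfold F.
    assert (h1 := deriv_exp_lin q t0 x). assert (h2 := deriv_Ef_shift q t0 x).
    apply (derivable_pt_lim_scal _ (f t0)) in h1. apply (derivable_pt_lim_scal _ p) in h2.
    assert (h3 := derivable_pt_lim_plus _ _ _ _ _ h1 h2).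
    eapply derivable_pt_lim_ext; [|apply derivable_pt_lim_ext with (f := plus_fct (mult_real_fct (f t0) (fun s => exp (q * (s - t0)))) (mult_real_fct p (fun s => Ef q (s - t0)))); [intros; reflexivity|]].
    intros; reflexivity.
    replace (p + q * (f t0 * exp (q * (x - t0)) + p * Ef q (x - t0))) with (f t0 * (exp (q * (x - t0)) * q) + p * exp (q * (x - t0))).
    auto. rewrite Ef_ode. ring. }
  assert (Hpsi : forall x, s < x < s' -> derivable_pt_lim psi x 0).
  { intros x hx. unfold psi.
    assert (h1 := derivable_pt_lim_minus _ _ _ _ _ (hd x hx) (HF x)).
    assert (h2 : derivable_pt_lim (fun t => exp (- q * t)) x (exp (- q * x) * (- q))).
    { apply is_derive_Reals. auto_derive; auto; try (unfold Rminus; ring). }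
    assert (h3 := derivable_pt_lim_mult _ _ _ _ _ h1 h2).
    replace 0 with ((p + q * f x - (p + q * F x)) * exp (- q * x) + (f x - F x) * (exp (- q * x) * - q)) by ring.
    apply derivable_pt_lim_ext with (f := mult_fct (minus_fct f F) (fun t => exp (- q * t))). intros; reflexivity. auto. }
  assert (Hcpsi : forall x, s <= x <= s' -> continuity_pt psi x).
  { intros x hx. unfold psi. apply continuity_pt_mult. apply continuity_pt_minus. auto.
    apply derivable_continuous_pt. exists (p + q * F x). apply HF.
    apply derivable_continuous_pt. exists (exp (- q * x) * (-q)). apply is_derive_Reals. auto_derive; auto; try (unfold Rminus; ring). }
  assert (k1 := const_on psi s s' hs Hpsi Hcpsi t ht).
  assert (k2 := const_on psi s s' hs Hpsi Hcpsi t0 ht0).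
  assert (psi t0 = 0) by (unfold psi, F; replace (t0 - t0) with 0 by ring; rewrite Ef_0, Rmult_0_r, exp_0; ring).
  assert (psi t = 0) by lra. unfold psi in H0.
  apply Rmult_integral in H0. destruct H0. unfold F in H0. lra. exfalso. assert (0 < exp (-q*t)) by apply exp_pos. lra.
Qed.

Lemma seg_lin (f : R -> R) sg s s' : s < s' ->
  (forall t, s < t < s' -> derivable_pt_lim f t sg) ->
  (forall t, s <= t <= s' -> continuity_pt f t) ->
  forall t, s <= t <= s' -> f t = f s + sg * (t - s).
Proof.
  intros hs hd hc t ht.
  set (psi := fun t => f t - sg * t).
  assert (Hpsi : forall x, s < x < s' -> derivable_pt_lim psi x 0).
  { intros x hx. unfold psi. replace 0 with (sg - sg * 1) by ring.
    apply derivable_pt_lim_minus with (f1 := f) (f2 := fun t => sg * t). auto.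
    apply is_derive_Reals. auto_derive; auto. }
  assert (Hc : forall x, s <= x <= s' -> continuity_pt psi x).
  { intros x hx. unfold psi. apply continuity_pt_minus. auto. apply derivable_continuous_pt.
    exists sg. apply is_derive_Reals. auto_derive; auto; try (unfold Rminus; ring). }
  assert (k := const_on psi s s' hs Hpsi Hc t ht). unfold psi in k. lra.
Qed.

Lemma seg_wcomp (f g : R -> R) s s' : s < s' ->
  (forall t, s < t < s' -> derivable_pt_lim (fun x => f x - g x) t (- (f t - g t))) ->
  (forall t, s <= t <= s' -> continuity_pt f t /\ continuity_pt g t) ->
  forall t, s <= t <= s' -> (f t - g t) * exp t = (f s - g s) * exp s.
Proof.
  intros hs hd hc t ht.
  set (psi := fun t => (f t - g t) * exp t).
  assert (Hpsi : forall x, s < x < s' -> derivable_pt_lim psi x 0).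
  { intros x hx. unfold psi. replace 0 with (- (f x - g x) * exp x + (f x - g x) * exp x) by ring.
    apply derivable_pt_lim_mult with (f1 := fun x => f x - g x) (f2 := exp). auto. apply derivable_pt_lim_exp. }
  assert (Hc : forall x, s <= x <= s' -> continuity_pt psi x).
  { intros x hx. unfold psi. destruct (hc x hx). apply continuity_pt_mult. apply continuity_pt_minus; auto.
    apply derivable_continuous_pt. exists (exp x). apply derivable_pt_lim_exp. }
  apply (const_on psi s s' hs Hpsi Hc t ht).
Qed.

Definition POdata a b c d e (hu hv hw : R -> R) Th L :=
  (forall t, continuity_pt hu t /\ continuity_pt hv t /\ continuity_pt hw t) /\ 0 < Th /\
  (forall t, hu (t + Th) = hu t /\ hv (t + Th) = hv t /\ hw (t + Th) = hw t) /\
  (forall t, 0 <= t <= Th -> hu t * hv t = 0 -> In t L) /\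
  (forall t j, in_region j (hu t) (hv t) ->
       derivable_pt_lim hu t (Xu a b e j (hu t)) /\
       derivable_pt_lim hv t (Xv j) /\
       derivable_pt_lim hw t (Xw c d e j (hu t) (hw t))).

Lemma po_data a b c d e hu hv hw : periodic_orbit a b c d e hu hv hw -> exists Th L, POdata a b c d e hu hv hw Th L.
Proof.
  intros (HC & Th & HT & HP & [L HL] & HD). exists Th, L. unfold POdata.
  split; [exact HC|]. split; [exact HT|]. split; [exact HP|]. split; [exact HL| exact HD].
Qed.

Lemma po_nat_shift a b c d e hu hv hw Th L : POdata a b c d e hu hv hw Th L ->
  forall n t, hu (t + INR n * Th) = hu t /\ hv (t + INR n * Th) = hv t /\ hw (t + INR n * Th) = hw t.
Proof.
  intros (HC & HT & HP & HL & HD) n. induction n; intros t.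
  - simpl. rewrite Rmult_0_l, Rplus_0_r. auto.
  - rewrite S_INR. replace (t + (INR n + 1) * Th) with ((t + INR n * Th) + Th) by ring.
    destruct (HP (t + INR n * Th)) as (e1 & e2 & e3). rewrite e1, e2, e3. apply IHn.
Qed.

Lemma po_int_shift a b c d e hu hv hw Th L : POdata a b c d e hu hv hw Th L ->
  forall (k : Z) t, hu (t + IZR k * Th) = hu t /\ hv (t + IZR k * Th) = hv t /\ hw (t + IZR k * Th) = hw t.
Proof.
  intros H k t. destruct k as [|p|p].
  - simpl. rewrite Rmult_0_l, Rplus_0_r. auto.
  - rewrite <- positive_nat_Z, <- INR_IZR_INZ. apply (po_nat_shift _ _ _ _ _ _ _ _ _ _ H).
  - assert (IZR (Z.neg p) = - INR (Pos.to_nat p)) by (rewrite <- Pos2Z.opp_pos, opp_IZR, <- positive_nat_Z, <- INR_IZR_INZ; auto).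
    rewrite H0. destruct (po_nat_shift _ _ _ _ _ _ _ _ _ _ H (Pos.to_nat p) (t + - INR (Pos.to_nat p) * Th)) as (e1 & e2 & e3).
    replace (t + - INR (Pos.to_nat p) * Th + INR (Pos.to_nat p) * Th) with t in e1, e2, e3 by ring. auto.
Qed.

Lemma list_min (l : list R) (P : R -> Prop) : (exists x, In x l /\ P x) ->
  exists m, In m l /\ P m /\ forall x, In x l -> P x -> m <= x.
Proof.
  induction l as [|a l IH]; intros [x [hx px]]. destruct hx.
  destruct (classic (exists x, In x l /\ P x)) as [E|NE].
  - destruct (IH E) as [m [hm [pm mm]]].
    destruct (classic (P a)) as [pa|npa].
    + destruct (Rle_dec a m).
      * exists a. split. left; auto. split; auto. intros y [<-|hy] py. lra. specialize (mm y hy py). lra.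
      * exists m. split. right; auto. split; auto. intros y [<-|hy] py. lra. auto.
    + exists m. split. right; auto. split; auto. intros y [<-|hy] py. contradiction. auto.
  - destruct hx as [E|hx].
    + exists a. split. left; auto. split. rewrite E; auto. intros y [E2|hy] py. rewrite E2; lra. exfalso; apply NE; exists y; auto.
    + exfalso; apply NE; exists x; auto.
Qed.

Lemma list_max (l : list R) (P : R -> Prop) : (exists x, In x l /\ P x) ->
  exists m, In m l /\ P m /\ forall x, In x l -> P x -> x <= m.
Proof.
  intros H. destruct (list_min (map Ropp l) (fun x => P (-x))) as [m [hm [pm mm]]].
  { destruct H as [x [hx px]]. exists (-x). split. apply in_map; auto. rewrite Ropp_involutive; auto. }
  exists (-m). apply in_map_iff in hm. destruct hm as [x0 [<- hx0]]. rewrite Ropp_involutive in *.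
  split; auto. split; auto. intros x hx px. assert (h := mm (-x) (in_map _ _ _ hx) ltac:(rewrite Ropp_involutive; auto)). lra.
Qed.

Lemma zero_window a b c d e hu hv hw Th L : POdata a b c d e hu hv hw Th L ->
  forall s, exists l, forall t, s < t <= s + Th -> hu t * hv t = 0 -> In t l.
Proof.
  intros H s. pose proof H as (HC & HT & HP & HL & HD).
  exists (map (fun x => x + Th * IZR (flr ((s - x)/Th) + 1)) L).
  intros t ht hz. set (m := flr (t/Th)). set (t' := t - Th * IZR m).
  destruct (flr_spec (t/Th)) as [f1 f2]. fold m in f1, f2.
  assert (t1 : 0 <= t' < Th).
  { unfold t'. split.
    - apply Rmult_le_compat_l with (r := Th) in f1. 2: lra. replace (Th * (t/Th)) with t in f1 by (field; lra). lra.
    - apply Rmult_lt_compat_l with (r := Th) in f2. 2: lra. replace (Th * (t/Th)) with t in f2 by (field; lra). lra. }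
  destruct (po_int_shift _ _ _ _ _ _ _ _ _ _ H (- m) t) as (e1 & e2 & _).
  rewrite opp_IZR in e1, e2. replace (t + - IZR m * Th) with t' in e1, e2 by (unfold t'; ring).
  assert (In t' L) by (apply HL; [lra| rewrite e1, e2; auto]).
  apply in_map_iff. exists t'. split; auto.
  rewrite (flr_unique ((s - t')/Th) (m - 1)). rewrite plus_IZR, minus_IZR. simpl. unfold t'. ring.
  rewrite minus_IZR. simpl. split.
  - apply Rmult_le_reg_r with Th. lra. replace ((s - t') / Th * Th) with (s - t') by (field; lra). unfold t'. lra.
  - apply Rmult_lt_reg_r with Th. lra. replace ((s - t') / Th * Th) with (s - t') by (field; lra). unfold t'. lra.
Qed.

Lemma next_zero a b c d e hu hv hw Th L : POdata a b c d e hu hv hw Th L ->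
  (exists t0, hu t0 * hv t0 = 0) ->
  forall s, exists s', s < s' /\ hu s' * hv s' = 0 /\ forall t, s < t < s' -> hu t * hv t <> 0.
Proof.
  intros H [t0 h0] s. pose proof H as (HC & HT & HP & HL & HD).
  destruct (zero_window _ _ _ _ _ _ _ _ _ _ H s) as [l hl].
  set (k := (flr ((s - t0)/Th) + 1)%Z). set (t1 := t0 + IZR k * Th).
  destruct (flr_spec ((s - t0)/Th)) as [f1 f2].
  assert (ht1 : s < t1 <= s + Th).
  { unfold t1, k. rewrite plus_IZR. simpl.
    apply Rmult_le_compat_r with (r := Th) in f1. 2: lra. apply Rmult_lt_compat_r with (r := Th) in f2. 2: lra.
    replace ((s - t0) / Th * Th) with (s - t0) in f1, f2 by (field; lra). lra. }
  assert (hz1 : hu t1 * hv t1 = 0).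
  { destruct (po_int_shift _ _ _ _ _ _ _ _ _ _ H k t0) as (e1 & e2 & _). unfold t1. rewrite e1, e2. auto. }
  destruct (list_min l (fun x => s < x <= s + Th /\ hu x * hv x = 0)) as [m [hm [[pm1 pm2] mm]]].
  { exists t1. split; auto. }
  exists m. split. lra. split; auto. intros t ht hzt. assert (m <= t) by (apply mm; [apply hl; auto; lra| split; auto; lra]). lra.
Qed.

Lemma sign_const (f : R -> R) s s' : (forall t, continuity_pt f t) -> (forall t, s < t < s' -> f t <> 0) ->
  forall t1 t2, s < t1 < s' -> s < t2 < s' -> 0 < f t1 -> 0 < f t2.
Proof.
  intros hc hnz t1 t2 h1 h2 p1. destruct (Rlt_dec 0 (f t2)) as [|n]; auto. exfalso.
  assert (f t2 < 0) by (assert (f t2 <> 0) by (apply hnz; auto); lra).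
  destruct (Rtotal_order t1 t2) as [l|[E|g]].
  - destruct (Ranalysis5.IVT_interv (fun x => - f x) t1 t2) as [zz [hz1 hz2]]; auto.
    intros; apply continuity_pt_opp with (f := f); auto. lra. lra.
    apply (hnz zz). lra. lra.
  - subst. lra.
  - destruct (Ranalysis5.IVT_interv f t2 t1) as [zz [hz1 hz2]]; auto.
    apply (hnz zz). lra. auto.
Qed.

Lemma region_const a b c d e hu hv hw Th L : POdata a b c d e hu hv hw Th L ->
  forall s s', s < s' -> (forall t, s < t < s' -> hu t * hv t <> 0) ->
  exists j, forall t, s < t < s' -> in_region j (hu t) (hv t).
Proof.
  intros H s s' hs hnz. pose proof H as (HC & HT & HP & HL & HD).
  assert (cu : forall t, continuity_pt hu t) by (intros; apply HC).
  assert (cv : forall t, continuity_pt hv t) by (intros; apply HC).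
  assert (nu : forall t, s < t < s' -> hu t <> 0) by (intros t ht h; apply (hnz t ht); rewrite h; ring).
  assert (nv : forall t, s < t < s' -> hv t <> 0) by (intros t ht h; apply (hnz t ht); rewrite h; ring).
  assert (nu' : forall t, s < t < s' -> (fun x => - hu x) t <> 0) by (intros t ht h; apply (nu t ht); lra).
  assert (nv' : forall t, s < t < s' -> (fun x => - hv x) t <> 0) by (intros t ht h; apply (nv t ht); lra).
  assert (cu' : forall t, continuity_pt (fun x => - hu x) t) by (intros; apply continuity_pt_opp with (f := hu); auto).
  assert (cv' : forall t, continuity_pt (fun x => - hv x) t) by (intros; apply continuity_pt_opp with (f := hv); auto).
  set (mid := (s + s') / 2). assert (hm : s < mid < s') by (unfold mid; lra).
  assert (um := nu mid hm). assert (vm := nv mid hm).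
  destruct (Rlt_dec 0 (hu mid)) as [pu|pu]; destruct (Rlt_dec 0 (hv mid)) as [pv|pv].
  - exists 1%nat. intros t ht. simpl. split; [apply (sign_const hu s s' cu nu mid t)| apply (sign_const hv s s' cv nv mid t)]; auto.
  - exists 4%nat. intros t ht. simpl. split. apply (sign_const hu s s' cu nu mid t); auto.
    assert (0 < - hv t) by (apply (sign_const (fun x => - hv x) s s' cv' nv' mid t); auto; lra). lra.
  - exists 2%nat. intros t ht. simpl. split.
    assert (0 < - hu t) by (apply (sign_const (fun x => - hu x) s s' cu' nu' mid t); auto; lra). lra.
    apply (sign_const hv s s' cv nv mid t); auto.
  - exists 3%nat. intros t ht. simpl. split.
    assert (0 < - hu t) by (apply (sign_const (fun x => - hu x) s s' cu' nu' mid t); auto; lra). lra.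
    assert (0 < - hv t) by (apply (sign_const (fun x => - hv x) s s' cv' nv' mid t); auto; lra). lra.
Qed.

Lemma Xu_pp a b e j u : Xu a b e j u = pp b e j + qq a e j * u.
Proof. unfold Xu, pp, qq. ring. Qed.

Lemma interval_formulas a b c d e hu hv hw Th L j s s' : POdata a b c d e hu hv hw Th L -> s < s' ->
  (forall t, s < t < s' -> in_region j (hu t) (hv t)) ->
  (forall t, s <= t <= s' -> hv t = hv s + sv j * (t - s)) /\
  (forall t0 t, s <= t0 <= s' -> s <= t <= s' -> hu t = hu t0 * exp (qq a e j * (t - t0)) + pp b e j * Ef (qq a e j) (t - t0)).
Proof.
  intros H hs hr. pose proof H as (HC & HT & HP & HL & HD). split.
  - apply seg_lin; auto. intros t ht. destruct (HD t j (hr t ht)) as (_ & h & _). auto.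
    intros; apply HC.
  - intros t0 t h0 ht. apply seg_formula with (s := s) (s' := s'); auto.
    intros x hx. destruct (HD x j (hr x hx)) as (h & _). rewrite Xu_pp in h. auto. intros; apply HC.
Qed.

Lemma after_zero a b c d e hu hv hw Th L s : POdata a b c d e hu hv hw Th L -> hu s * hv s = 0 ->
  exists s' j, s < s' /\ hu s' * hv s' = 0 /\ (forall t, s < t < s' -> hu t * hv t <> 0) /\
    (forall t, s < t < s' -> in_region j (hu t) (hv t)) /\
    (forall t, s <= t <= s' -> hv t = hv s + sv j * (t - s)) /\
    (forall t0 t, s <= t0 <= s' -> s <= t <= s' -> hu t = hu t0 * exp (qq a e j * (t - t0)) + pp b e j * Ef (qq a e j) (t - t0)).
Proof.
  intros H hz. destruct (next_zero _ _ _ _ _ _ _ _ _ _ H ltac:(exists s; auto) s) as [s' [h1 [h2 h3]]].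
  destruct (region_const _ _ _ _ _ _ _ _ _ _ H s s' h1 h3) as [j hj].
  destruct (interval_formulas _ _ _ _ _ _ _ _ _ _ j s s' H h1 hj) as [f1 f2].
  exists s', j. repeat split; auto.
Qed.

Lemma in_region_j14 j u v : in_region j u v -> (j = 1 \/ j = 2 \/ j = 3 \/ j = 4)%nat.
Proof. destruct j as [|[|[|[|[|j]]]]]; simpl; intuition. Qed.

Lemma sv_val j : (j = 1 \/ j = 2 \/ j = 3 \/ j = 4)%nat ->
  (j = 1%nat -> sv j = 1) /\ (j = 2%nat -> sv j = -1) /\ (j = 3%nat -> sv j = -1) /\ (j = 4%nat -> sv j = 1).
Proof. intros; repeat split; intros ->; reflexivity. Qed.

Lemma T_posV a b c d e hu hv hw Th L s Y : POdata a b c d e hu hv hw Th L -> Rabs e * Ab a b <= /2 ->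
  hu s = 0 -> hv s = Y -> 0 < Y ->
  (forall t, s < t < s + Y -> in_region 2 (hu t) (hv t)) /\
  (forall t, s <= t <= s + Y -> hu t = pp b e 2 * Ef (qq a e 2) (t - s) /\ hv t = Y - (t - s)).
Proof.
  intros H he hu0 hv0 hY. destruct (p_signs a b e he) as (p1 & p2 & p3 & p4 & _).
  destruct (after_zero _ _ _ _ _ _ _ _ _ _ s H ltac:(rewrite hu0; ring)) as [s' [j (h1 & h2 & h3 & hj & fv & fu)]].
  assert (FU : forall t, s <= t <= s' -> hu t = pp b e j * Ef (qq a e j) (t - s)).
  { intros t ht. rewrite (fu s t) by lra. rewrite hu0. ring. }
  set (ts := s + Rmin Y (s' - s) / 2).
  assert (hts : s < ts < s' /\ ts - s < Y) by (unfold ts; assert (h := Rmin_l Y (s'-s)); assert (h' := Rmin_r Y (s'-s));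
    assert (0 < Rmin Y (s' - s)) by (apply Rmin_pos; lra); lra).
  assert (hr := hj ts ltac:(lra)). assert (hu1 := FU ts ltac:(lra)). assert (hv1 := fv ts ltac:(lra)). rewrite hv0 in hv1.
  assert (Epos : 0 < Ef (qq a e j) (ts - s)) by (apply Ef_pos; lra).
  assert (jv := in_region_j14 _ _ _ hr). destruct (sv_val j jv) as (sv1 & sv2 & sv3 & sv4).
  apply in_region_cases in hr.
  assert (j = 2%nat).
  { destruct hr as [(-> & hh & _)|[(-> & _)|[(-> & _ & hh)|(-> & _ & hh)]]]; auto.
    - rewrite hu1 in hh. nra.
    - rewrite hv1, sv3 in hh by auto. lra.
    - rewrite hv1, sv4 in hh by auto. lra. }
  subst j. rewrite sv2 in fv by auto.
  assert (s' = s + Y).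
  { assert (hu2 := FU s' ltac:(lra)). assert (hv2 := fv s' ltac:(lra)). rewrite hv0 in hv2.
    assert (0 < Ef (qq a e 2) (s' - s)) by (apply Ef_pos; lra).
    assert (hu s' <> 0) by (rewrite hu2; nra). apply Rmult_integral in h2. destruct h2. contradiction. lra. }
  subst s'. split. auto. intros t ht. split. apply FU; lra. rewrite (fv t ht), hv0. ring.
Qed.

Lemma T_negV a b c d e hu hv hw Th L s Z : POdata a b c d e hu hv hw Th L -> Rabs e * Ab a b <= /2 ->
  hu s = 0 -> hv s = - Z -> 0 < Z ->
  (forall t, s < t < s + Z -> in_region 4 (hu t) (hv t)) /\
  (forall t, s <= t <= s + Z -> hu t = pp b e 4 * Ef (qq a e 4) (t - s) /\ hv t = - Z + (t - s)).
Proof.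
  intros H he hu0 hv0 hY. destruct (p_signs a b e he) as (p1 & p2 & p3 & p4 & _).
  destruct (after_zero _ _ _ _ _ _ _ _ _ _ s H ltac:(rewrite hu0; ring)) as [s' [j (h1 & h2 & h3 & hj & fv & fu)]].
  assert (FU : forall t, s <= t <= s' -> hu t = pp b e j * Ef (qq a e j) (t - s)).
  { intros t ht. rewrite (fu s t) by lra. rewrite hu0. ring. }
  set (ts := s + Rmin Z (s' - s) / 2).
  assert (hts : s < ts < s' /\ ts - s < Z) by (unfold ts; assert (h := Rmin_l Z (s'-s)); assert (h' := Rmin_r Z (s'-s));
    assert (0 < Rmin Z (s' - s)) by (apply Rmin_pos; lra); lra).
  assert (hr := hj ts ltac:(lra)). assert (hu1 := FU ts ltac:(lra)). assert (hv1 := fv ts ltac:(lra)). rewrite hv0 in hv1.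
  assert (Epos : 0 < Ef (qq a e j) (ts - s)) by (apply Ef_pos; lra).
  assert (jv := in_region_j14 _ _ _ hr). destruct (sv_val j jv) as (sv1 & sv2 & sv3 & sv4).
  apply in_region_cases in hr.
  assert (j = 4%nat).
  { destruct hr as [(-> & _ & hh)|[(-> & _ & hh)|[(-> & hh & _)|(-> & _)]]]; auto.
    - rewrite hv1, sv1 in hh by auto. lra.
    - rewrite hv1, sv2 in hh by auto. lra.
    - rewrite hu1 in hh. nra. }
  subst j. rewrite sv4 in fv by auto.
  assert (s' = s + Z).
  { assert (hu2 := FU s' ltac:(lra)). assert (hv2 := fv s' ltac:(lra)). rewrite hv0 in hv2.
    assert (0 < Ef (qq a e 4) (s' - s)) by (apply Ef_pos; lra).
    assert (hu s' <> 0) by (rewrite hu2; nra). apply Rmult_integral in h2. destruct h2. contradiction. lra. }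
  subst s'. split. auto. intros t ht. split. apply FU; lra. rewrite (fv t ht), hv0. ring.
Qed.

Lemma T_negU a b c d e hu hv hw Th L s m : POdata a b c d e hu hv hw Th L -> Rabs e * Ab a b <= /2 ->
  hu s = m -> hv s = 0 -> m < 0 ->
  exists Z, 0 < Z /\ m = pp b e 3 * Ef (qq a e 3) (- Z) /\
  (forall t, s < t < s + Z -> in_region 3 (hu t) (hv t)) /\
  (forall t, s <= t <= s + Z -> hu t = pp b e 3 * Ef (qq a e 3) (t - (s + Z)) /\ hv t = - (t - s)).
Proof.
  intros H he hu0 hv0 hm. destruct (p_signs a b e he) as (p1 & p2 & p3 & p4 & _).
  pose proof H as (HC & _).
  destruct (after_zero _ _ _ _ _ _ _ _ _ _ s H ltac:(rewrite hv0; ring)) as [s' [j (h1 & h2 & h3 & hj & fv & fu)]].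
  destruct (cont_eps_elim hu s (proj1 (HC s)) (-m/2) ltac:(lra)) as [dl [hdl kd]].
  set (ts := s + Rmin dl (s' - s) / 2).
  assert (hts : s < ts < s' /\ ts - s < dl) by (unfold ts; assert (h := Rmin_l dl (s'-s)); assert (h' := Rmin_r dl (s'-s));
    assert (0 < Rmin dl (s' - s)) by (apply Rmin_pos; lra); lra).
  assert (hu1 : hu ts < 0).
  { assert (k := kd ts ltac:(rewrite Rabs_right; lra)). rewrite hu0 in k. apply Rabs_def2 in k. lra. }
  assert (hr := hj ts ltac:(lra)). assert (hv1 := fv ts ltac:(lra)). rewrite hv0 in hv1.
  assert (jv := in_region_j14 _ _ _ hr). destruct (sv_val j jv) as (sv1 & sv2 & sv3 & sv4).
  apply in_region_cases in hr.
  assert (j = 3%nat).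
  { destruct hr as [(-> & hh & _)|[(-> & _ & hh)|[(-> & _)|(-> & hh & _)]]]; auto; try lra.
    rewrite hv1, sv2 in hh by auto. lra. }
  subst j. rewrite sv3 in fv by auto.
  assert (hu s' = 0).
  { assert (hv2 := fv s' ltac:(lra)). rewrite hv0 in hv2. apply Rmult_integral in h2. destruct h2; auto. lra. }
  assert (FU : forall t, s <= t <= s' -> hu t = pp b e 3 * Ef (qq a e 3) (t - s')).
  { intros t ht. rewrite (fu s' t) by lra. rewrite H0. ring. }
  exists (s' - s). split. lra. split.
  rewrite <- hu0, FU by lra. f_equal. f_equal. ring.
  replace (s + (s' - s)) with s' by ring. split. auto.
  intros t ht. split. apply FU; lra. rewrite (fv t ht), hv0. ring.
Qed.

Lemma T_posU a b c d e hu hv hw Th L s x : POdata a b c d e hu hv hw Th L -> Rabs e * Ab a b <= /2 ->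
  hu s = x -> hv s = 0 -> 0 < x ->
  exists Y, 0 < Y /\ x = pp b e 1 * Ef (qq a e 1) (- Y) /\
  (forall t, s < t < s + Y -> in_region 1 (hu t) (hv t)) /\
  (forall t, s <= t <= s + Y -> hu t = pp b e 1 * Ef (qq a e 1) (t - (s + Y)) /\ hv t = t - s).
Proof.
  intros H he hu0 hv0 hm. destruct (p_signs a b e he) as (p1 & p2 & p3 & p4 & _).
  pose proof H as (HC & _).
  destruct (after_zero _ _ _ _ _ _ _ _ _ _ s H ltac:(rewrite hv0; ring)) as [s' [j (h1 & h2 & h3 & hj & fv & fu)]].
  destruct (cont_eps_elim hu s (proj1 (HC s)) (x/2) ltac:(lra)) as [dl [hdl kd]].
  set (ts := s + Rmin dl (s' - s) / 2).
  assert (hts : s < ts < s' /\ ts - s < dl) by (unfold ts; assert (h := Rmin_l dl (s'-s)); assert (h' := Rmin_r dl (s'-s));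
    assert (0 < Rmin dl (s' - s)) by (apply Rmin_pos; lra); lra).
  assert (hu1 : 0 < hu ts).
  { assert (k := kd ts ltac:(rewrite Rabs_right; lra)). rewrite hu0 in k. apply Rabs_def2 in k. lra. }
  assert (hr := hj ts ltac:(lra)). assert (hv1 := fv ts ltac:(lra)). rewrite hv0 in hv1.
  assert (jv := in_region_j14 _ _ _ hr). destruct (sv_val j jv) as (sv1 & sv2 & sv3 & sv4).
  apply in_region_cases in hr.
  assert (j = 1%nat).
  { destruct hr as [(-> & _)|[(-> & hh & _)|[(-> & hh & _)|(-> & _ & hh)]]]; auto; try lra.
    rewrite hv1, sv4 in hh by auto. lra. }
  subst j. rewrite sv1 in fv by auto.
  assert (hu s' = 0).
  { assert (hv2 := fv s' ltac:(lra)). rewrite hv0 in hv2. apply Rmult_integral in h2. destruct h2; auto. lra. }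
  assert (FU : forall t, s <= t <= s' -> hu t = pp b e 1 * Ef (qq a e 1) (t - s')).
  { intros t ht. rewrite (fu s' t) by lra. rewrite H0. ring. }
  exists (s' - s). split. lra. split.
  rewrite <- hu0, FU by lra. f_equal. f_equal. ring.
  replace (s + (s' - s)) with s' by ring. split. auto.
  intros t ht. split. apply FU; lra. rewrite (fv t ht), hv0. ring.
Qed.

Lemma loop a b c d e hu hv hw Th L s Y : POdata a b c d e hu hv hw Th L -> Rabs e * Ab a b <= /2 ->
  hu s = 0 -> hv s = Y -> 0 < Y ->
  exists Z Y', 0 < Z /\ 0 < Y' /\ EqI a b e Y Z /\ EqII a b e Z Y' /\
   hu (s + Y + Z) = 0 /\ hv (s + Y + Z) = - Z /\
   hu (s + Y + 2*Z + Y') = 0 /\ hv (s + Y + 2*Z + Y') = Y' /\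
   (forall t, s < t < s + Y -> in_region 2 (hu t) (hv t)) /\
   (forall t, s <= t <= s + Y -> hu t = pp b e 2 * Ef (qq a e 2) (t - s) /\ hv t = Y - (t - s)) /\
   (forall t, s + Y < t < s + Y + Z -> in_region 3 (hu t) (hv t)) /\
   (forall t, s + Y <= t <= s + Y + Z -> hu t = pp b e 3 * Ef (qq a e 3) (t - (s + Y + Z)) /\ hv t = - (t - (s + Y))) /\
   (forall t, s + Y + Z < t < s + Y + 2*Z -> in_region 4 (hu t) (hv t)) /\
   (forall t, s + Y + Z <= t <= s + Y + 2*Z -> hu t = pp b e 4 * Ef (qq a e 4) (t - (s + Y + Z)) /\ hv t = - Z + (t - (s + Y + Z))) /\
   (forall t, s + Y + 2*Z < t < s + Y + 2*Z + Y' -> in_region 1 (hu t) (hv t)) /\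
   (forall t, s + Y + 2*Z <= t <= s + Y + 2*Z + Y' -> hu t = pp b e 1 * Ef (qq a e 1) (t - (s + Y + 2*Z + Y')) /\ hv t = t - (s + Y + 2*Z)).
Proof.
  intros H he hu0 hv0 hY. destruct (p_signs a b e he) as (p1 & p2 & p3 & p4 & _).
  destruct (T_posV _ _ _ _ _ _ _ _ _ _ s Y H he hu0 hv0 hY) as [rA fA].
  destruct (fA (s + Y) ltac:(lra)) as [u1 v1]. replace (s + Y - s) with Y in u1, v1 by ring.
  assert (hm : pp b e 2 * Ef (qq a e 2) Y < 0) by (assert (0 < Ef (qq a e 2) Y) by (apply Ef_pos; lra); nra).
  destruct (T_negU _ _ _ _ _ _ _ _ _ _ (s + Y) _ H he u1 ltac:(rewrite v1; ring) hm) as [Z (hZ & eZ & rB & fB)].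
  destruct (fB (s + Y + Z) ltac:(lra)) as [u2 v2]. replace (s + Y + Z - (s + Y + Z)) with 0 in u2 by ring.
  rewrite Ef_0, Rmult_0_r in u2. replace (- (s + Y + Z - (s + Y))) with (- Z) in v2 by ring.
  destruct (T_negV _ _ _ _ _ _ _ _ _ _ (s + Y + Z) Z H he u2 v2 hZ) as [rC fC].
  destruct (fC (s + Y + Z + Z) ltac:(lra)) as [u3 v3]. replace (s + Y + Z + Z - (s + Y + Z)) with Z in u3, v3 by ring.
  replace (- Z + Z) with 0 in v3 by ring.
  assert (hx : 0 < pp b e 4 * Ef (qq a e 4) Z) by (assert (0 < Ef (qq a e 4) Z) by (apply Ef_pos; lra); nra).
  destruct (T_posU _ _ _ _ _ _ _ _ _ _ (s + Y + Z + Z) _ H he u3 v3 hx) as [Y' (hY' & eY' & rD & fD)].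
  destruct (fD (s + Y + Z + Z + Y') ltac:(lra)) as [u4 v4]. replace (s + Y + Z + Z + Y' - (s + Y + Z + Z + Y')) with 0 in u4 by ring.
  rewrite Ef_0, Rmult_0_r in u4. replace (s + Y + Z + Z + Y' - (s + Y + Z + Z)) with Y' in v4 by ring.
  exists Z, Y'. replace (s + Y + 2*Z) with (s + Y + Z + Z) by ring.
  repeat match goal with |- _ /\ _ => split end; auto.
Qed.

Lemma useg_lb P q x : /2 <= Rabs P -> Rabs q * Rabs x <= /2 -> Rabs x / 4 <= Rabs (P * Ef q x).
Proof.
  intros hP hq. rewrite Rabs_mult.
  destruct (Rtotal_order x 0) as [l|[->|g]].
  - rewrite (Rabs_left x) in hq |- * by lra. destruct (Ef_crude q (-x) ltac:(lra) hq) as [_ [_ k]].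
    rewrite Ropp_involutive in k. rewrite (Rabs_left (Ef q x)) by lra.
    assert (/2 * (- x / 2) <= Rabs P * - Ef q x) by (apply Rmult_le_compat; lra). lra.
  - rewrite Rabs_R0, Ef_0, Rabs_R0. lra.
  - rewrite (Rabs_right x) in hq |- * by lra. destruct (Ef_crude q x g hq) as [[k _] _].
    rewrite (Rabs_right (Ef q x)) by lra.
    assert (/2 * (x / 2) <= Rabs P * Ef q x) by (apply Rmult_le_compat; lra). lra.
Qed.

Lemma per_red T f t : per T f t = f (t - perc T t).
Proof. reflexivity. Qed.

Lemma perc_range T t : 0 < T -> 0 <= t - perc T t < T.
Proof.
  intros hT. unfold perc. destruct (flr_spec (t/T)) as [h1 h2]. split.
  - apply Rmult_le_compat_l with (r := T) in h1. 2: lra. replace (T * (t/T)) with t in h1 by (field; lra). lra.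
  - apply Rmult_lt_compat_l with (r := T) in h2. 2: lra. replace (T * (t/T)) with t in h2 by (field; lra). lra.
Qed.

Lemma g_tube a b e y z : orbit_hyp a b e y z -> Rabs e * Ab a b * (2*y+2*z) <= /2 ->
  forall t, Rmin y z / 4 <= Rabs (GU a b e y z t) + Rabs (GV y z t) /\
   (forall r, r <= Rmin y z / 4 -> Rabs (GU a b e y z t) < r -> 0 <= GV y z t -> Rabs (GV y z t - y) < 4*r) /\
   (forall r, r <= Rmin y z / 4 -> Rabs (GU a b e y z t) < r -> GV y z t <= 0 -> Rabs (GV y z t + z) < 4*r).
Proof.
  intros H hq t. pose proof H as (hy & hz & h1 & h2 & he).
  destruct (p_signs a b e he) as (p1 & p2 & p3 & p4 & _).
  destruct (qb_bounds a b e) as (q1 & q2 & q3 & q4 & _).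
  assert (hT : 0 < Tp y z) by (unfold Tp; lra).
  unfold GU, GV. rewrite !per_red. set (sg := t - perc (Tp y z) t).
  assert (hs := perc_range (Tp y z) t hT). fold sg in hs. unfold Tp in hs.
  assert (my := Rmin_l y z). assert (mz := Rmin_r y z).
  assert (LB : forall j x, (j = 1 \/ j = 2 \/ j = 3 \/ j = 4)%nat -> Rabs x <= 2*y+2*z ->
    Rabs x / 4 <= Rabs (pp b e j * Ef (qq a e j) x)).
  { intros j x hj hx. apply useg_lb.
    - destruct hj as [ -> | [ -> | [ -> | -> ] ] ]; [rewrite Rabs_left| rewrite Rabs_left| rewrite Rabs_right| rewrite Rabs_right]; lra.
    - assert (Rabs (qq a e j) <= Rabs e * Ab a b) by (destruct hj as [ -> | [ -> | [ -> | -> ] ] ]; auto).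
      assert (0 <= Rabs (qq a e j)) by apply Rabs_pos. assert (0 <= Rabs x) by apply Rabs_pos.
      apply Rle_trans with (Rabs e * Ab a b * (2*y+2*z)); auto. apply Rmult_le_compat; auto. }
  unfold pwU, pwV, uA, uB, uC, uD, vA, vC, useg, Tp.
  destruct (Rle_dec sg y) as [l1|l1].
  { rewrite !pw_A by lra. assert (k := LB 2%nat (sg - 0) ltac:(auto) ltac:(rewrite Rabs_right; lra)).
    rewrite Rabs_right in k by lra. rewrite (Rabs_right (y + -1 * sg)) by lra.
    split. lra. split.
    - intros r hr hu hv. rewrite Rabs_left1 by lra. lra.
    - intros r hr hu hv. assert (sg = y) by lra. subst sg. lra. }
  destruct (Rle_dec sg (y+z)) as [l2|l2].
  { rewrite !pw_B by lra. assert (k := LB 3%nat (sg - (y+z)) ltac:(auto) ltac:(rewrite Rabs_left1; lra)).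
    rewrite Rabs_left1 in k by lra. rewrite (Rabs_left1 (y + -1 * sg)) by lra.
    split. lra. split.
    - intros r hr hu hv. lra.
    - intros r hr hu hv. rewrite Rabs_lt_between. lra. }
  destruct (Rle_dec sg (y+2*z)) as [l3|l3].
  { rewrite !pw_C by lra. assert (k := LB 4%nat (sg - (y+z)) ltac:(auto) ltac:(rewrite Rabs_right; lra)).
    rewrite Rabs_right in k by lra. rewrite (Rabs_left1 (- (y + 2 * z) + 1 * sg)) by lra.
    split. lra. split.
    - intros r hr hu hv. assert (sg = y + 2*z) by lra. subst sg. lra.
    - intros r hr hu hv. rewrite Rabs_lt_between. lra. }
  { rewrite !pw_D by lra. assert (k := LB 1%nat (sg - (2*y+2*z)) ltac:(auto) ltac:(rewrite Rabs_left1; lra)).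
    rewrite Rabs_left1 in k by lra. rewrite (Rabs_right (- (y + 2 * z) + 1 * sg)) by lra.
    split. lra. split.
    - intros r hr hu hv. rewrite Rabs_lt_between. lra.
    - intros r hr hu hv. lra. }
Qed.

Lemma dist3_bounds x1 y1 z1 x2 y2 z2 r : dist3 x1 y1 z1 x2 y2 z2 < r ->
  Rabs (x1 - x2) < r /\ Rabs (y1 - y2) < r /\ Rabs (z1 - z2) < r.
Proof.
  intros H. unfold dist3 in H.
  assert (G : forall u v w, Rabs u <= sqrt (u^2 + v^2 + w^2)).
  { intros u v w. rewrite <- sqrt_Rsqr_abs. apply sqrt_le_1_alt. unfold Rsqr.
    assert (0 <= v^2) by apply pow2_ge_0. assert (0 <= w^2) by apply pow2_ge_0. simpl. lra. }
  split; [|split].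
  - eapply Rle_lt_trans; [apply G|]. apply H.
  - eapply Rle_lt_trans; [apply (G (y1 - y2) (x1 - x2) (z1 - z2))|]. replace ((y1 - y2) ^ 2 + (x1 - x2) ^ 2 + (z1 - z2) ^ 2) with
      ((x1 - x2) ^ 2 + (y1 - y2) ^ 2 + (z1 - z2) ^ 2) by ring. apply H.
  - eapply Rle_lt_trans; [apply (G (z1 - z2) (x1 - x2) (y1 - y2))|]. replace ((z1 - z2) ^ 2 + (x1 - x2) ^ 2 + (y1 - y2) ^ 2) with
      ((x1 - x2) ^ 2 + (y1 - y2) ^ 2 + (z1 - z2) ^ 2) by ring. apply H.
Qed.

Lemma h_tube a b e y z (hu hv hw : R -> R) r gw : orbit_hyp a b e y z -> Rabs e * Ab a b * (2*y+2*z) <= /2 ->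
  0 < r -> r <= Rmin y z / 8 ->
  (forall s, exists t, dist3 (hu s) (hv s) (hw s) (GU a b e y z t) (GV y z t) (gw t) < r) ->
  (forall s, ~ (hu s = 0 /\ hv s = 0)) /\
  (forall s, hu s = 0 -> 0 < hv s -> Rabs (hv s - y) < 5 * r) /\
  (forall s, hu s = 0 -> hv s < 0 -> Rabs (hv s + z) < 5 * r).
Proof.
  intros H hq hr hr2 Ht.
  assert (K : forall s, exists t, Rabs (hu s - GU a b e y z t) < r /\ Rabs (hv s - GV y z t) < r /\
     Rmin y z / 4 <= Rabs (GU a b e y z t) + Rabs (GV y z t) /\
     (forall r, r <= Rmin y z / 4 -> Rabs (GU a b e y z t) < r -> 0 <= GV y z t -> Rabs (GV y z t - y) < 4*r) /\
     (forall r, r <= Rmin y z / 4 -> Rabs (GU a b e y z t) < r -> GV y z t <= 0 -> Rabs (GV y z t + z) < 4*r)).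
  { intros s. destruct (Ht s) as [t ht]. apply dist3_bounds in ht. exists t.
    destruct (g_tube a b e y z H hq t) as (k1 & k2 & k3). destruct ht as (d1 & d2 & _). auto. }
  split; [|split].
  - intros s [h1 h2]. destruct (K s) as [t (d1 & d2 & k1 & _)]. rewrite h1 in d1. rewrite h2 in d2.
    rewrite Rabs_minus_sym, Rminus_0_r in d1, d2. lra.
  - intros s h1 h2. destruct (K s) as [t (d1 & d2 & k1 & k2 & _)]. rewrite h1 in d1.
    rewrite Rabs_minus_sym, Rminus_0_r in d1.
    destruct (Rle_dec 0 (GV y z t)).
    + assert (k := k2 r ltac:(lra) d1 r0). apply Rabs_def2 in k. apply Rabs_def2 in d2. apply Rabs_def1; lra.
    + exfalso. apply Rabs_def2 in d2. rewrite (Rabs_left (GV y z t)) in k1 by lra. lra.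
  - intros s h1 h2. destruct (K s) as [t (d1 & d2 & k1 & _ & k3)]. rewrite h1 in d1.
    rewrite Rabs_minus_sym, Rminus_0_r in d1.
    destruct (Rle_dec (GV y z t) 0).
    + assert (k := k3 r ltac:(lra) d1 r0). apply Rabs_def2 in k. apply Rabs_def2 in d2. apply Rabs_def1; lra.
    + exfalso. apply Rabs_def2 in d2. rewrite (Rabs_right (GV y z t)) in k1 by lra. lra.
Qed.

Lemma h_has_zero a b c d e hu hv hw Th L : POdata a b c d e hu hv hw Th L -> exists t, hu t * hv t = 0.
Proof.
  intros H. pose proof H as (HC & HT & HP & HL & HD).
  apply NNPP. intros NZ.
  assert (nz : forall t, -1 < t < Th + 1 -> hu t * hv t <> 0) by (intros t _ h; apply NZ; exists t; auto).
  destruct (region_const _ _ _ _ _ _ _ _ _ _ H (-1) (Th+1) ltac:(lra) nz) as [j hj].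
  destruct (interval_formulas _ _ _ _ _ _ _ _ _ _ j (-1) (Th+1) H ltac:(lra) hj) as [fv _].
  assert (jv := in_region_j14 _ _ _ (hj 0 ltac:(lra))).
  assert (sv j <> 0) by (destruct jv as [ -> | [ -> | [ -> | -> ] ] ]; simpl; lra).
  assert (e1 := fv 0 ltac:(lra)). assert (e2 := fv Th ltac:(lra)).
  destruct (HP 0) as (_ & e3 & _). rewrite Rplus_0_l in e3.
  assert (sv j * Th = 0) by lra. apply Rmult_integral in H1. destruct H1; lra.
Qed.

Lemma h_posV a b c d e hu hv hw Th L : POdata a b c d e hu hv hw Th L -> Rabs e * Ab a b <= /2 ->
  (forall s, ~ (hu s = 0 /\ hv s = 0)) -> exists s, hu s = 0 /\ 0 < hv s.
Proof.
  intros H he NO. destruct (p_signs a b e he) as (p1 & p2 & p3 & p4 & _).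
  destruct (h_has_zero _ _ _ _ _ _ _ _ _ _ H) as [s0 hz].
  assert (FU : forall s, 0 < hu s -> hv s = 0 -> exists s', hu s' = 0 /\ 0 < hv s').
  { intros s h1 h2. destruct (T_posU _ _ _ _ _ _ _ _ _ _ s _ H he eq_refl h2 h1) as [Y (hY & _ & _ & f)].
    exists (s + Y). destruct (f (s + Y) ltac:(lra)) as [u v]. split.
    rewrite u. replace (s + Y - (s + Y)) with 0 by ring. rewrite Ef_0; ring. rewrite v; lra. }
  assert (FV : forall s, hu s = 0 -> hv s < 0 -> exists s', hu s' = 0 /\ 0 < hv s').
  { intros s h1 h2. destruct (T_negV _ _ _ _ _ _ _ _ _ _ s (- hv s) H he h1 ltac:(ring) ltac:(lra)) as [_ f].
    destruct (f (s + - hv s) ltac:(lra)) as [u v]. apply (FU (s + - hv s)).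
    rewrite u. replace (s + - hv s - s) with (- hv s) by ring. assert (0 < Ef (qq a e 4) (- hv s)) by (apply Ef_pos; lra). nra.
    rewrite v. ring. }
  apply Rmult_integral in hz. destruct hz as [h1|h2].
  - destruct (Rtotal_order (hv s0) 0) as [l|[E|g]].
    + apply (FV s0 h1 l).
    + exfalso; apply (NO s0); auto.
    + exists s0; auto.
  - destruct (Rtotal_order (hu s0) 0) as [l|[E|g]].
    + destruct (T_negU _ _ _ _ _ _ _ _ _ _ s0 _ H he eq_refl h2 l) as [Z (hZ & _ & _ & f)].
      destruct (f (s0 + Z) ltac:(lra)) as [u v]. apply (FV (s0 + Z)).
      rewrite u. replace (s0 + Z - (s0 + Z)) with 0 by ring. rewrite Ef_0; ring. rewrite v; lra.
    + exfalso; apply (NO s0); auto.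
    + apply (FU s0 g h2).
Qed.

Definition stab_prop a b e al de (stab : bool) :=
  forall Y1 Z1 W1 Y2 Z2 W2,
   Rabs (Y1 - al) <= de -> Rabs (Z1 - al) <= de -> Rabs (W1 - al) <= de ->
   Rabs (Y2 - al) <= de -> Rabs (Z2 - al) <= de -> Rabs (W2 - al) <= de ->
   EqI a b e Y1 Z1 -> EqII a b e Z1 W1 -> EqI a b e Y2 Z2 -> EqII a b e Z2 W2 -> Y1 < Y2 ->
   W1 < W2 /\ (if stab then W1 - Y1 < W2 - Y2 else W2 - Y2 < W1 - Y1).

Lemma all_heights a b c d e hu hv hw Th L y z al de stab : POdata a b c d e hu hv hw Th L -> Rabs e * Ab a b <= /2 ->
  EqI a b e y z -> EqII a b e z y -> stab_prop a b e al de stab ->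
  (forall s, hu s = 0 -> 0 < hv s -> Rabs (hv s - al) <= de) ->
  (forall s, hu s = 0 -> hv s < 0 -> Rabs (- hv s - al) <= de) ->
  Rabs (y - al) <= de -> Rabs (z - al) <= de ->
  forall s, hu s = 0 -> 0 < hv s -> hv s = y.
Proof.
  intros H he Ey Ez HS T1 T2 hy hz.
  pose proof H as (HC & HT & HP & HL & HD).
  set (Sy := fun Y => 0 < Y /\ exists t, hu t = 0 /\ hv t = Y).
  assert (fin : forall Y, Sy Y -> In Y (map hv L)).
  { intros Y [hY [t [h1 h2]]]. set (t' := t - perc Th t).
    destruct (po_int_shift _ _ _ _ _ _ _ _ _ _ H (- flr (t / Th)) t) as (e1 & e2 & _).
    rewrite opp_IZR in e1, e2. replace (t + - IZR (flr (t / Th)) * Th) with t' in e1, e2 by (unfold t', perc; ring).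
    assert (hr := perc_range Th t HT). fold t' in hr.
    rewrite <- h2, <- e2. apply in_map. apply HL. lra. rewrite e1, e2, h1. ring. }
  assert (step : forall Y, Sy Y -> exists Z Y', EqI a b e Y Z /\ EqII a b e Z Y' /\ Sy Y' /\
      Rabs (Y - al) <= de /\ Rabs (Z - al) <= de /\ Rabs (Y' - al) <= de).
  { intros Y [hY [t [h1 h2]]].
    destruct (loop _ _ _ _ _ _ _ _ _ _ t Y H he h1 h2 hY) as [Z [Y' (hZ & hY' & E1 & E2 & u2 & v2 & u4 & v4 & _)]].
    exists Z, Y'. split; auto. split; auto. split. split; auto. exists (t + Y + 2 * Z + Y'); auto.
    split. rewrite <- h2. apply T1; auto. rewrite h2; auto.
    split. replace Z with (- hv (t + Y + Z)) by lra. apply T2; auto. lra.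
    rewrite <- v4. apply T1; auto. lra. }
  assert (Fy : forall Y Z, EqI a b e Y Z -> Y = y -> Z = z).
  { intros Y Z E ->. unfold EqI in *. destruct (p_signs a b e he) as (_ & _ & p3 & _).
    assert (Ef (qq a e 3) (-Z) = Ef (qq a e 3) (-z)).
    { apply Rmult_eq_reg_l with (pp b e 3). rewrite <- E, <- Ey. auto. lra. }
    apply Ef_inj in H0. lra. }
  intros s h1 h2.
  assert (S0 : Sy (hv s)) by (split; auto; exists s; auto).
  destruct (Rtotal_order (hv s) y) as [lt|[eq|gt]]; auto; exfalso.
  - destruct stab.
    + destruct (list_min (map hv L) (fun Y => Sy Y /\ Y < y)) as [m [hm [[Sm lm] mm]]].
      { exists (hv s). split; auto. }
      destruct (step m Sm) as [Zm [m' (E1 & E2 & Sm' & d1 & d2 & d3)]].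
      destruct (HS m Zm m' y z y d1 d2 d3 hy hz hy E1 E2 Ey Ez lm) as [k1 k2].
      assert (m <= m') by (apply mm; auto; split; auto). lra.
    + destruct (list_max (map hv L) (fun Y => Sy Y /\ Y < y)) as [m [hm [[Sm lm] mm]]].
      { exists (hv s). split; auto. }
      destruct (step m Sm) as [Zm [m' (E1 & E2 & Sm' & d1 & d2 & d3)]].
      destruct (HS m Zm m' y z y d1 d2 d3 hy hz hy E1 E2 Ey Ez lm) as [k1 k2].
      assert (m' <= m) by (apply mm; auto; split; auto). lra.
  - destruct stab.
    + destruct (list_max (map hv L) (fun Y => Sy Y /\ y < Y)) as [m [hm [[Sm lm] mm]]].
      { exists (hv s). split; auto. }
      destruct (step m Sm) as [Zm [m' (E1 & E2 & Sm' & d1 & d2 & d3)]].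
      destruct (HS y z y m Zm m' hy hz hy d1 d2 d3 Ey Ez E1 E2 lm) as [k1 k2].
      assert (m' <= m) by (apply mm; auto; split; auto; lra). lra.
    + destruct (list_min (map hv L) (fun Y => Sy Y /\ y < Y)) as [m [hm [[Sm lm] mm]]].
      { exists (hv s). split; auto. }
      destruct (step m Sm) as [Zm [m' (E1 & E2 & Sm' & d1 & d2 & d3)]].
      destruct (HS y z y m Zm m' hy hz hy d1 d2 d3 Ey Ez E1 E2 lm) as [k1 k2].
      assert (m <= m') by (apply mm; auto; split; auto; lra). lra.
Qed.

Lemma wseg_step a b c d e hu hv hw Th L gu gv gw s s1 s2 j : POdata a b c d e hu hv hw Th L ->
  periodic_orbit a b c d e gu gv gw -> s1 < s2 ->
  (forall t, s1 < t < s2 -> in_region j (hu t) (hv t)) ->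
  (forall t, s1 <= t <= s2 -> hu t = gu (t - s) /\ hv t = gv (t - s)) ->
  forall t, s1 <= t <= s2 -> (hw t - gw (t - s)) * exp t = (hw s1 - gw (s1 - s)) * exp s1.
Proof.
  intros H G hs hr hm. pose proof H as (HC & HT & HP & HL & HD). destruct G as (GC & _ & _ & _ & _ & GD).
  apply (seg_wcomp hw (fun x => gw (x - s)) s1 s2); auto.
  - intros t ht. destruct (hm t ltac:(lra)) as [m1 m2].
    assert (hr' : in_region j (gu (t - s)) (gv (t - s))) by (rewrite <- m1, <- m2; auto).
    destruct (HD t j (hr t ht)) as (_ & _ & d1). destruct (GD (t - s) j hr') as (_ & _ & d2).
    apply deriv_shift in d2.
    assert (dd := derivable_pt_lim_minus _ _ _ _ _ d1 d2).
    replace (- (hw t - gw (t - s))) with (Xw c d e j (hu t) (hw t) - Xw c d e j (gu (t - s)) (gw (t - s))).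
    apply derivable_pt_lim_ext with (f := minus_fct hw (fun x => gw (x - s))). intros; reflexivity. auto.
    rewrite m1. unfold Xw. ring.
  - intros t ht. split. apply HC. apply cont_shift. apply GC.
Qed.

Lemma per_nat T f n x : 0 < T -> per T f (x + INR n * T) = per T f x.
Proof.
  intros hT. induction n. simpl. rewrite Rmult_0_l, Rplus_0_r. auto.
  rewrite S_INR. replace (x + (INR n + 1) * T) with ((x + INR n * T) + T) by ring. rewrite per_plusT; auto.
Qed.

Lemma loop_match a b c d e hu hv hw Th L y z s : POdata a b c d e hu hv hw Th L -> orbit_hyp a b e y z ->
  hu s = 0 -> hv s = y ->
  hu (s + Tp y z) = 0 /\ hv (s + Tp y z) = y /\
  (forall t, s <= t <= s + Tp y z -> hu t = GU a b e y z (t - s) /\ hv t = GV y z (t - s)) /\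
  (forall t, s <= t <= s + Tp y z -> (hw t - GW a b c d e y z (t - s)) * exp t = (hw s - GW a b c d e y z 0) * exp s).
Proof.
  intros H Hg h1 h2. pose proof Hg as (hy & hz & Ey & Ez & he).
  destruct (p_signs a b e he) as (p1 & p2 & p3 & p4 & _).
  destruct (loop _ _ _ _ _ _ _ _ _ _ s y H he h1 h2 hy) as [Z [Y' (hZ & hY' & E1 & E2 & u2 & v2 & u4 & v4 & rA & fA & rB & fB & rC & fC & rD & fD)]].
  assert (Z = z).
  { unfold EqI in *. assert (Ef (qq a e 3) (-Z) = Ef (qq a e 3) (-z)).
    { apply Rmult_eq_reg_l with (pp b e 3). rewrite <- E1, <- Ey. auto. lra. }
    apply Ef_inj in H0. lra. }
  subst Z.
  assert (Y' = y).
  { unfold EqII in *. assert (Ef (qq a e 1) (-Y') = Ef (qq a e 1) (-y)).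
    { apply Rmult_eq_reg_l with (pp b e 1). rewrite <- E2, <- Ez. auto. lra. }
    apply Ef_inj in H0. lra. }
  subst Y'.
  assert (hT : 0 < Tp y z) by (unfold Tp; lra).
  assert (TT : s + y + 2*z + y = s + Tp y z) by (unfold Tp; ring).
  rewrite TT in u4, v4, rD, fD.
  assert (G0 : GU a b e y z (Tp y z) = 0 /\ GV y z (Tp y z) = y).
  { unfold GU, GV. assert (k1 := per_plusT (Tp y z) (pwU a b e y z) 0 hT). assert (k2 := per_plusT (Tp y z) (pwV y z) 0 hT).
    rewrite Rplus_0_l in k1, k2. rewrite k1, k2.
    rewrite !per_in by lra. unfold pwU, pwV. rewrite !pw_A by lra. unfold uA, useg, vA. replace (0 - 0) with 0 by ring.
    rewrite Ef_0. split; ring. }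
  assert (M : forall t, s <= t <= s + Tp y z -> hu t = GU a b e y z (t - s) /\ hv t = GV y z (t - s)).
  { intros t ht. destruct (Req_dec t (s + Tp y z)) as [->|ne].
    { replace (s + Tp y z - s) with (Tp y z) by ring. rewrite u4, v4. destruct G0; auto. }
    unfold GU, GV. rewrite !per_in by lra. unfold pwU, pwV, Tp in *.
    destruct (Rle_dec t (s + y)).
    { rewrite !pw_A by lra. destruct (fA t ltac:(lra)) as [a1 a2]. unfold uA, useg, vA.
      rewrite a1, a2. split; [f_equal; f_equal|]; ring. }
    destruct (Rle_dec t (s + y + z)).
    { rewrite !pw_B by lra. destruct (fB t ltac:(lra)) as [a1 a2]. unfold uB, useg, vA.
      rewrite a1, a2. split; [f_equal; f_equal|]; ring. }
    destruct (Rle_dec t (s + y + 2*z)).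
    { rewrite !pw_C by lra. destruct (fC t ltac:(lra)) as [a1 a2]. unfold uC, useg, vC.
      rewrite a1, a2. split; [f_equal; f_equal|]; ring. }
    { rewrite !pw_D by lra. destruct (fD t ltac:(lra)) as [a1 a2]. unfold uD, useg, vC, Tp.
      rewrite a1, a2. split; [f_equal; f_equal|]; ring. } }
  split; auto. split; auto. split; auto.
  assert (Gpo := g_periodic_orbit a b c d e y z Hg).
  assert (W1 := wseg_step _ _ _ _ _ _ _ _ _ _ _ _ _ s s (s + y) 2%nat H Gpo ltac:(lra) rA ltac:(intros; apply M; unfold Tp; lra)).
  assert (W2 := wseg_step _ _ _ _ _ _ _ _ _ _ _ _ _ s (s + y) (s + y + z) 3%nat H Gpo ltac:(lra) rB ltac:(intros; apply M; unfold Tp; lra)).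
  assert (W3 := wseg_step _ _ _ _ _ _ _ _ _ _ _ _ _ s (s + y + z) (s + y + 2*z) 4%nat H Gpo ltac:(lra) rC ltac:(intros; apply M; unfold Tp; lra)).
  assert (W4 := wseg_step _ _ _ _ _ _ _ _ _ _ _ _ _ s (s + y + 2*z) (s + Tp y z) 1%nat H Gpo ltac:(unfold Tp; lra) rD ltac:(intros; apply M; unfold Tp in *; lra)).
  replace (s - s) with 0 in W1 by ring.
  assert (k1 := W1 (s + y) ltac:(lra)). assert (k2 := W2 (s + y + z) ltac:(lra)). assert (k3 := W3 (s + y + 2*z) ltac:(lra)).
  intros t ht.
  destruct (Rle_dec t (s + y)). apply W1; lra.
  destruct (Rle_dec t (s + y + z)). rewrite W2 by lra. auto.
  destruct (Rle_dec t (s + y + 2*z)). rewrite W3 by lra. rewrite k2; auto.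
  rewrite W4 by (unfold Tp in *; lra). rewrite k3, k2; auto.
Qed.

Lemma g_posV_zero a b e y z sg : orbit_hyp a b e y z -> 0 <= sg < Tp y z ->
  pwU a b e y z sg = 0 -> pwV y z sg = y -> sg = 0.
Proof.
  intros H hs hu hv. pose proof H as (hy & hz & _).
  destruct (seg_signs a b e y z H) as (sA & sB & sC & sD). unfold Tp in hs.
  unfold pwU, pwV in *.
  destruct (Req_dec sg 0); auto. exfalso.
  destruct (Rle_dec sg y).
  { rewrite pw_A in hu, hv by lra. destruct (Req_dec sg y). subst. unfold vA in hv. lra.
    destruct (sA sg ltac:(lra)). lra. }
  destruct (Rle_dec sg (y+z)).
  { rewrite pw_B in hv by lra. unfold vA in hv. lra. }
  destruct (Rle_dec sg (y+2*z)).
  { rewrite pw_C in hv by lra. unfold vC in hv. lra. }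
  rewrite pw_D in hu by lra. destruct (sD sg ltac:(lra)). lra.
Qed.

Lemma isolation a b c d e y z al de stab : orbit_hyp a b e y z -> Rabs e * Ab a b * (2*y+2*z) <= /2 ->
  0 < de -> Rabs (y - al) <= de/2 -> Rabs (z - al) <= de/2 -> stab_prop a b e al de stab ->
  isolated_periodic_orbit a b c d e (GU a b e y z) (GV y z) (GW a b c d e y z).
Proof.
  intros Hg hq hde hyal hzal HS. pose proof Hg as (hy & hz & Ey & Ez & he).
  assert (Gpo := g_periodic_orbit a b c d e y z Hg).
  split; auto.
  set (r := Rmin (Rmin y z / 8) (de/10)).
  assert (hr : 0 < r) by (unfold r; apply Rmin_pos; [assert (0 < Rmin y z) by (apply Rmin_glb_lt; lra)|]; lra).
  assert (hr1 : r <= Rmin y z / 8) by apply Rmin_l. assert (hr2 : r <= de/10) by apply Rmin_r.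
  exists r. split; auto.
  intros hu hv hw Hh Ht.
  destruct (po_data _ _ _ _ _ _ _ _ Hh) as [Th [L H]]. pose proof H as (HC & HT & HP & HL & HD).
  destruct (h_tube a b e y z hu hv hw r (GW a b c d e y z) Hg hq hr hr1 Ht) as (NO & T1 & T2).
  set (Tg := Tp y z). assert (hTg : 0 < Tg) by (unfold Tg, Tp; lra).
  assert (AH := all_heights _ _ _ _ _ _ _ _ _ _ y z al de stab H he Ey Ez HS
     ltac:(intros s h1 h2; assert (k := T1 s h1 h2); apply Rabs_def2 in k; apply Rabs_le_between in hyal; apply Rabs_le_between; lra)
     ltac:(intros s h1 h2; assert (k := T2 s h1 h2); apply Rabs_def2 in k; apply Rabs_le_between in hzal; apply Rabs_le_between; lra)
     ltac:(lra) ltac:(lra)).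
  destruct (h_posV _ _ _ _ _ _ _ _ _ _ H he NO) as [s0 [h0u h0v]].
  assert (h0v' := AH s0 h0u h0v).
  set (D0 := (hw s0 - GW a b c d e y z 0) * exp s0).
  assert (IND : forall n : nat, hu (s0 + INR n * Tg) = 0 /\ hv (s0 + INR n * Tg) = y /\
      (hw (s0 + INR n * Tg) - GW a b c d e y z 0) * exp (s0 + INR n * Tg) = D0).
  { induction n.
    - simpl. rewrite Rmult_0_l, Rplus_0_r. auto.
    - destruct IHn as (i1 & i2 & i3).
      destruct (loop_match _ _ _ _ _ _ _ _ _ _ y z _ H Hg i1 i2) as (l1 & l2 & l3 & l4).
      rewrite S_INR. replace (s0 + (INR n + 1) * Tg) with (s0 + INR n * Tg + Tp y z) by (unfold Tg; ring).
      split; auto. split; auto.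
      rewrite <- i3. rewrite <- (l4 (s0 + INR n * Tg + Tp y z)) by (unfold Tp; lra).
      f_equal. f_equal. replace (s0 + INR n * Tg + Tp y z - (s0 + INR n * Tg)) with (0 + Tp y z) by ring.
      unfold GW. symmetry. apply per_plusT. auto. }
  assert (GLOB : forall t, s0 <= t -> hu t = GU a b e y z (t - s0) /\ hv t = GV y z (t - s0) /\
      (hw t - GW a b c d e y z (t - s0)) * exp t = D0).
  { intros t ht. set (k := flr ((t - s0) / Tg)). destruct (flr_spec ((t - s0)/Tg)) as [f1 f2]. fold k in f1, f2.
    assert (k0 : (0 <= k)%Z).
    { assert (q1 : 0 <= (t - s0)/Tg) by (apply Rmult_le_pos; [lra| left; apply Rinv_0_lt_compat; lra]).
      assert (q2 : IZR (-1) < IZR k) by (simpl; lra). apply lt_IZR in q2. lia. }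
    set (n := Z.to_nat k). assert (hn : INR n = IZR k) by (unfold n; rewrite INR_IZR_INZ, Z2Nat.id; auto).
    destruct (IND n) as (i1 & i2 & i3).
    destruct (loop_match _ _ _ _ _ _ _ _ _ _ y z _ H Hg i1 i2) as (l1 & l2 & l3 & l4).
    assert (rt : s0 + INR n * Tg <= t <= s0 + INR n * Tg + Tp y z).
    { rewrite hn. apply Rmult_le_compat_r with (r := Tg) in f1. 2: lra. apply Rmult_lt_compat_r with (r := Tg) in f2. 2: lra.
      replace ((t - s0) / Tg * Tg) with (t - s0) in f1, f2 by (field; lra). unfold Tg in *. lra. }
    assert (PN : forall f, per Tg f (t - s0) = per Tg f (t - (s0 + INR n * Tg))).
    { intros f. rewrite <- (per_nat Tg f n (t - (s0 + INR n * Tg)) hTg). f_equal. ring. }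
    destruct (l3 t rt) as [m1 m2]. split. rewrite m1. unfold GU. symmetry. apply PN.
    split. rewrite m2. unfold GV. symmetry. apply PN.
    rewrite <- i3. rewrite <- (l4 t rt). f_equal. f_equal. unfold GW. apply PN. }
  (* period of h is a multiple of Tg *)
  destruct (GLOB (s0 + Th) ltac:(lra)) as (g1 & g2 & g3).
  destruct (HP s0) as (p1 & p2 & p3). replace (s0 + Th - s0) with Th in g1, g2, g3 by ring.
  rewrite p1, h0u in g1. rewrite p2, h0v' in g2.
  assert (SZ : Th - perc Tg Th = 0).
  { apply (g_posV_zero a b e y z).
    - auto.
    - apply perc_range; auto.
    - unfold GU in g1. rewrite per_red in g1. auto.
    - unfold GV in g2. rewrite per_red in g2. auto. }
  assert (GW0 : GW a b c d e y z Th = GW a b c d e y z 0).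
  { unfold GW. rewrite per_red. fold Tg. rewrite SZ. rewrite per_in; auto. lra. }
  rewrite p3, GW0 in g3. fold D0 in g3.
  assert (D0z : hw s0 - GW a b c d e y z 0 = 0).
  { unfold D0 in g3. assert (exp s0 < exp (s0 + Th)) by (apply exp_increasing; lra).
    assert ((hw s0 - GW a b c d e y z 0) * (exp (s0 + Th) - exp s0) = 0) by lra.
    apply Rmult_integral in H1. destruct H1; auto. lra. }
  assert (GLOBW : forall t, s0 <= t -> hw t = GW a b c d e y z (t - s0)).
  { intros t ht. destruct (GLOB t ht) as (_ & _ & k). unfold D0 in k. rewrite D0z, Rmult_0_l in k.
    apply Rmult_integral in k. destruct k. lra. exfalso. assert (0 < exp t) by apply exp_pos. lra. }
  intros x0 y0 z0. split.
  - intros [t (e1 & e2 & e3)]. set (k := (flr ((s0 - t) / Th) + 1)%Z).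
    destruct (flr_spec ((s0 - t)/Th)) as [f1 f2].
    assert (ht' : s0 <= t + IZR k * Th).
    { unfold k. rewrite plus_IZR. simpl. apply Rmult_lt_compat_r with (r := Th) in f2. 2: lra.
      replace ((s0 - t) / Th * Th) with (s0 - t) in f2 by (field; lra). lra. }
    destruct (po_int_shift _ _ _ _ _ _ _ _ _ _ H k t) as (q1 & q2 & q3).
    destruct (GLOB _ ht') as (m1 & m2 & _). assert (m3 := GLOBW _ ht').
    exists (t + IZR k * Th - s0). split; [|split].
    + rewrite <- m1, q1; auto.
    + rewrite <- m2, q2; auto.
    + rewrite <- m3, q3; auto.
  - intros [t (e1 & e2 & e3)]. set (sg := t - perc Tg t).
    assert (hs := perc_range Tg t hTg). fold sg in hs.
    exists (s0 + sg). destruct (GLOB (s0 + sg) ltac:(lra)) as (m1 & m2 & _). assert (m3 := GLOBW (s0 + sg) ltac:(lra)).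
    replace (s0 + sg - s0) with sg in m1, m2, m3 by ring.
    assert (RU : GU a b e y z sg = GU a b e y z t) by (unfold GU; rewrite (per_red _ _ t); fold Tg; rewrite per_in; auto).
    assert (RV : GV y z sg = GV y z t) by (unfold GV; rewrite (per_red _ _ t); fold Tg; rewrite per_in; auto).
    assert (RW : GW a b c d e y z sg = GW a b c d e y z t) by (unfold GW; rewrite (per_red _ _ t); fold Tg; rewrite per_in; auto).
    split; [|split]; [rewrite m1, RU| rewrite m2, RV| rewrite m3, RW]; auto.
Qed.

Definition Cd (c d : nat -> R) := 1 + Rabs (c 1%nat) + Rabs (c 2%nat) + Rabs (c 3%nat) + Rabs (c 4%nat)
  + Rabs (d 1%nat) + Rabs (d 2%nat) + Rabs (d 3%nat) + Rabs (d 4%nat).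

Lemma Cd_bounds c d : 1 <= Cd c d /\
  Rabs (c 1%nat) <= Cd c d /\ Rabs (c 2%nat) <= Cd c d /\ Rabs (c 3%nat) <= Cd c d /\ Rabs (c 4%nat) <= Cd c d /\
  Rabs (d 1%nat) <= Cd c d /\ Rabs (d 2%nat) <= Cd c d /\ Rabs (d 3%nat) <= Cd c d /\ Rabs (d 4%nat) <= Cd c d.
Proof.
  unfold Cd. assert (h1 := Rabs_pos (c 1%nat)). assert (h2 := Rabs_pos (c 2%nat)).
  assert (h3 := Rabs_pos (c 3%nat)). assert (h4 := Rabs_pos (c 4%nat)).
  assert (h5 := Rabs_pos (d 1%nat)). assert (h6 := Rabs_pos (d 2%nat)).
  assert (h7 := Rabs_pos (d 3%nat)). assert (h8 := Rabs_pos (d 4%nat)). repeat split; lra.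
Qed.

Lemma alj_bej_bound a b c d e j : Rabs e * Ab a b <= /2 -> (j = 1 \/ j = 2 \/ j = 3 \/ j = 4)%nat ->
  Rabs (alj a c e j) <= 2 * (Rabs e * Cd c d) /\ Rabs (bej a b c d e j) <= 4 * (Rabs e * Cd c d).
Proof.
  intros he hj. destruct (Cd_bounds c d) as (h0 & c1 & c2 & c3 & c4 & d1 & d2 & d3 & d4).
  destruct (qb_bounds a b e) as (q1 & q2 & q3 & q4 & _).
  destruct (p_signs a b e he) as (p1 & p2 & p3 & p4 & t1 & t2 & t3 & t4).
  assert (Hc : Rabs (c j) <= Cd c d) by (destruct hj as [ -> | [ -> | [ -> | -> ] ] ]; auto).
  assert (Hd : Rabs (d j) <= Cd c d) by (destruct hj as [ -> | [ -> | [ -> | -> ] ] ]; auto).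
  assert (Hq : /2 <= 1 + qq a e j).
  { destruct hj as [ -> | [ -> | [ -> | -> ] ] ]; [apply Rabs_le_between in q1| apply Rabs_le_between in q2|
      apply Rabs_le_between in q3| apply Rabs_le_between in q4]; lra. }
  assert (Hp : Rabs (pp b e j) <= 3/2).
  { destruct hj as [ -> | [ -> | [ -> | -> ] ] ]; unfold pp, su;
      [apply Rabs_le_between in t1| apply Rabs_le_between in t2| apply Rabs_le_between in t3| apply Rabs_le_between in t4];
      apply Rabs_le_between; lra. }
  assert (0 <= Rabs e) by apply Rabs_pos.
  assert (A1 : Rabs (alj a c e j) <= 2 * (Rabs e * Cd c d)).
  { unfold alj. unfold Rdiv. rewrite Rabs_mult, Rabs_mult, Rabs_inv, (Rabs_right (1 + qq a e j)) by lra.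
    apply Rmult_le_reg_r with (1 + qq a e j). lra.
    replace (Rabs e * Rabs (c j) * / (1 + qq a e j) * (1 + qq a e j)) with (Rabs e * Rabs (c j)) by (field; lra).
    assert (Rabs e * Rabs (c j) <= Rabs e * Cd c d) by (apply Rmult_le_compat_l; auto).
    assert (0 <= Rabs e * Cd c d) by (apply Rmult_le_pos; lra). nra. }
  split; auto. unfold bej.
  unfold Rminus. eapply Rle_trans. apply Rabs_triang. rewrite Rabs_Ropp, Rabs_mult, Rabs_mult.
  assert (Rabs e * Rabs (d j) <= Rabs e * Cd c d) by (apply Rmult_le_compat_l; auto).
  assert (Rabs (alj a c e j) * Rabs (pp b e j) <= 2 * (Rabs e * Cd c d) * (3/2)) by (apply Rmult_le_compat; auto; apply Rabs_pos).
  lra.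
Qed.

Lemma w_alg al4 x be4 KA S1 S2 S3 be1 be2 E1 E2 E3 E4 E5 E6 g ep M :
  Rabs al4 <= 2*ep -> Rabs x <= M -> Rabs be4 <= 4*ep -> Rabs be1 <= 4*ep -> Rabs be2 <= 4*ep ->
  Rabs S1 <= ep*(4*M+8) -> Rabs S2 <= 8*ep -> Rabs S3 <= ep*(4*M+8) ->
  0 < E1 <= 1 -> 0 < E2 <= 1 -> 0 < E3 <= 1 -> 0 < E4 <= 1 -> 0 < E5 <= 1 -> 0 < E6 <= 1 ->
  0 < g -> 0 <= ep -> 0 <= M ->
  KA = (be1 - be2 + S1 * E1 + S2 * E2 + S3 * E3) / g ->
  Rabs (al4 * x + be4 + KA * E4 + S1 * E5 + S2 * E6) <= ep * (6*M + 20 + (8*M+32)/g).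
Proof.
  intros h1 h2 h3 h4 h5 h6 h7 h8 k1 k2 k3 k4 k5 k6 hg hep hM HK.
  assert (B : forall u E U, Rabs u <= U -> 0 < E <= 1 -> Rabs (u * E) <= U).
  { intros u E U hu hE. rewrite Rabs_mult, (Rabs_right E) by lra. assert (0 <= Rabs u) by apply Rabs_pos. nra. }
  assert (KAb : Rabs KA <= ep * (8*M+32) / g).
  { rewrite HK. unfold Rdiv. rewrite Rabs_mult, Rabs_inv, (Rabs_right g) by lra.
    apply Rmult_le_compat_r. left; apply Rinv_0_lt_compat; auto.
    assert (q1 := B S1 E1 _ h6 k1). assert (q2 := B S2 E2 _ h7 k2). assert (q3 := B S3 E3 _ h8 k3).
    apply Rabs_le_between in q1, q2, q3, h4, h5. apply Rabs_le_between. split; nra. }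
  assert (q4 := B KA E4 _ KAb k4). assert (q5 := B S1 E5 _ h6 k5). assert (q6 := B S2 E6 _ h7 k6).
  assert (q7 : Rabs (al4 * x) <= 2*ep*M) by (apply Rabs_mult_le; auto).
  apply Rabs_le_between in q4, q5, q6, q7, h3. apply Rabs_le_between.
  assert (ep * (8 * M + 32) / g = ep * ((8*M+32)/g)) by (field; lra). split; nra.
Qed.

Lemma w_bound a b c d e y z : orbit_hyp a b e y z -> Rabs e * Ab a b * (2*y+2*z) <= /2 ->
  Rabs (GW a b c d e y z (y + 2*z)) <= Rabs e * Cd c d * (6*(3*(y+z)+1) + 20 + (8*(3*(y+z)+1)+32)/(1 - exp (- (2*y+2*z)))).
Proof.
  intros H hq. pose proof H as (hy & hz & Ey & Ez & he).
  destruct (p_signs a b e he) as (p1 & p2 & p3 & p4 & t1 & t2 & t3 & t4).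
  destruct (qb_bounds a b e) as (q1 & q2 & q3 & q4 & _).
  assert (hT : 0 < Tp y z) by (unfold Tp; lra).
  assert (GT : 0 < 1 - exp (- (2*y+2*z))) by (assert (exp (-(2*y+2*z)) < 1) by (rewrite <- exp_0; apply exp_increasing; lra); lra).
  unfold GW. rewrite per_in by (unfold Tp; lra). unfold pwW. rewrite pw_C by lra.
  set (ep := Rabs e * Cd c d). set (M := 3*(y+z)+1).
  assert (hep : 0 <= ep) by (unfold ep; apply Rmult_le_pos; [apply Rabs_pos| destruct (Cd_bounds c d); lra]).
  assert (AB : forall j, (j = 1 \/ j = 2 \/ j = 3 \/ j = 4)%nat -> Rabs (alj a c e j) <= 2 * ep /\ Rabs (bej a b c d e j) <= 4 * ep)
    by (intros; apply alj_bej_bound; auto).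
  destruct (AB 1%nat ltac:(auto)) as [a1 b1']. destruct (AB 2%nat ltac:(auto)) as [a2 b2'].
  destruct (AB 3%nat ltac:(auto)) as [a3 b3']. destruct (AB 4%nat ltac:(auto)) as [a4 b4'].
  assert (Hm : Rabs (mval a b e y z) <= M).
  { unfold mval, uA, useg. replace (y - 0) with y by ring.
    destruct (Ef_crude (qq a e 2) y hy) as [[k1 k2] _].
    { assert (Rabs (qq a e 2) * y <= Rabs e * Ab a b * (2*y+2*z)) by (apply Rmult_le_compat; try lra; apply Rabs_pos). lra. }
    rewrite Rabs_mult, (Rabs_right (Ef _ _)) by lra. apply Rabs_le_between in t2. rewrite pp2, Rabs_left by lra.
    assert (- (-1 + e * b 2%nat) * Ef (qq a e 2) y <= 3/2 * (2*y)) by (apply Rmult_le_compat; lra). unfold M; lra. }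
  assert (Hx : Rabs (xval a b e y z) <= M).
  { unfold xval, uC, useg. replace (y + 2*z - (y + z)) with z by ring.
    destruct (Ef_crude (qq a e 4) z hz) as [[k1 k2] _].
    { assert (Rabs (qq a e 4) * z <= Rabs e * Ab a b * (2*y+2*z)) by (apply Rmult_le_compat; try lra; apply Rabs_pos). lra. }
    rewrite Rabs_mult, (Rabs_right (Ef _ _)) by lra. apply Rabs_le_between in t4. rewrite pp4, Rabs_right by lra.
    assert ((1 + e * b 4%nat) * Ef (qq a e 4) z <= 3/2 * (2*z)) by (apply Rmult_le_compat; lra). unfold M; lra. }
  assert (HM : 0 <= M) by (unfold M; lra).
  set (S1 := alj a c e 2 * mval a b e y z + bej a b c d e 2 - alj a c e 3 * mval a b e y z - bej a b c d e 3).
  set (S2 := bej a b c d e 3 - bej a b c d e 4).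
  set (S3 := alj a c e 4 * xval a b e y z + bej a b c d e 4 - alj a c e 1 * xval a b e y z - bej a b c d e 1).
  assert (hS1 : Rabs S1 <= ep * (4*M+8)).
  { unfold S1. assert (k1 := Rabs_mult_le _ _ _ _ a2 Hm). assert (k2 := Rabs_mult_le _ _ _ _ a3 Hm).
    apply Rabs_le_between in k1, k2, b2', b3'. apply Rabs_le_between. split; nra. }
  assert (hS2 : Rabs S2 <= 8 * ep).
  { unfold S2. apply Rabs_le_between in b3', b4'. apply Rabs_le_between. split; lra. }
  assert (hS3 : Rabs S3 <= ep * (4*M+8)).
  { unfold S3. assert (k1 := Rabs_mult_le _ _ _ _ a4 Hx). assert (k2 := Rabs_mult_le _ _ _ _ a1 Hx).
    apply Rabs_le_between in k1, k2, b4', b1'. apply Rabs_le_between. split; nra. }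
  assert (EX : forall u, 0 <= u -> 0 < exp (- u) <= 1).
  { intros u hu. split. apply exp_pos. rewrite <- exp_0. apply exp_le_mono. lra. }
  unfold wC, wseg. fold (uC a b e y z).
  replace (uC a b e y z (y + 2*z)) with (xval a b e y z) by reflexivity.
  replace (KC a b c d e y z * exp (- (y + 2 * z))) with
    (KA a b c d e y z * exp (- (y + 2*z)) + S1 * exp (- (2*z)) + S2 * exp (- z)).
  2: { unfold KC, KB, J1, J2. fold S1 S2.
       replace (exp (- (2*z))) with (exp y * exp (- (y + 2*z))) by (rewrite <- exp_plus; f_equal; ring).
       replace (exp (- z)) with (exp (y+z) * exp (- (y + 2*z))) by (rewrite <- exp_plus; f_equal; ring). ring. }
  rewrite <- !Rplus_assoc.
  apply (w_alg _ _ _ _ _ _ S3 (bej a b c d e 1) (bej a b c d e 2) (exp (- (y + 2*z))) (exp (- (y+z))) (exp (- y)) _ _ _ _ ep M);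
    auto; try (apply EX; lra).
  unfold KA, J1, J2, J3, Tp. fold S1 S2 S3.
  replace (exp (- (y + 2*z))) with (exp y * exp (- (2*y+2*z))) by (rewrite <- exp_plus; f_equal; ring).
  replace (exp (- (y + z))) with (exp (y+z) * exp (- (2*y+2*z))) by (rewrite <- exp_plus; f_equal; ring).
  replace (exp (- y)) with (exp (y + 2*z) * exp (- (2*y+2*z))) by (rewrite <- exp_plus; f_equal; ring).
  field. lra.
Qed.

Lemma x_bound a b e z : 0 < z -> Rabs e * Ab a b * (2*z) <= /2 -> Rabs e * Ab a b <= /2 ->
  Rabs (pp b e 4 * Ef (qq a e 4) z - z) <= Rabs e * Ab a b * (2*z^2 + 2*z).
Proof.
  intros hz hq he. destruct (qb_bounds a b e) as (_ & _ & _ & q4 & _ & _ & _ & c4).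
  destruct (Ef_mvt (qq a e 4) 0 z hz) as [xi [hxi m]]. rewrite Ef_0 in m.
  assert (hq4 : Rabs (qq a e 4) * z <= /2).
  { assert (Rabs (qq a e 4) * z <= Rabs e * Ab a b * z) by (apply Rmult_le_compat_r; lra).
    assert (0 <= Rabs e * Ab a b) by (apply Rmult_le_pos; [apply Rabs_pos| destruct (Ab_bounds a b); lra]). nra. }
  assert (hxi' : Rabs (qq a e 4 * xi) <= Rabs (qq a e 4) * z).
  { rewrite Rabs_mult, (Rabs_right xi) by lra. apply Rmult_le_compat_l. apply Rabs_pos. lra. }
  assert (k := exp_small (qq a e 4 * xi) ltac:(lra)).
  destruct (Ef_crude (qq a e 4) z hz hq4) as [[f1 f2] _].
  rewrite pp4.
  replace ((1 + e * b 4%nat) * Ef (qq a e 4) z - z) with ((Ef (qq a e 4) z - 0 - z) + e * b 4%nat * Ef (qq a e 4) z) by ring.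
  rewrite m. replace ((z - 0) * exp (qq a e 4 * xi) - z) with (z * (exp (qq a e 4 * xi) - 1)) by ring.
  eapply Rle_trans. apply Rabs_triang.
  assert (r1 : Rabs (z * (exp (qq a e 4 * xi) - 1)) <= z * (2 * (Rabs e * Ab a b * z))).
  { rewrite Rabs_mult, (Rabs_right z) by lra. apply Rmult_le_compat_l. lra.
    assert (Rabs (qq a e 4) * z <= Rabs e * Ab a b * z) by (apply Rmult_le_compat_r; lra). lra. }
  assert (r2 : Rabs (e * b 4%nat * Ef (qq a e 4) z) <= Rabs e * Ab a b * (2 * z)).
  { rewrite Rabs_mult, (Rabs_right (Ef _ _)) by lra. apply Rmult_le_compat. apply Rabs_pos. lra. auto. lra. }
  assert (z * (2 * (Rabs e * Ab a b * z)) = Rabs e * Ab a b * (2 * z^2)) by ring. nra.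
Qed.

Lemma dist3_le x y z al : y = 0 -> dist3 x y z al 0 0 <= Rabs (x - al) + Rabs z.
Proof.
  intros ->. unfold dist3. rewrite !Rminus_0_r.
  assert (0 <= Rabs (x - al) + Rabs z) by (assert (h1 := Rabs_pos (x - al)); assert (h2 := Rabs_pos z); lra).
  rewrite <- (sqrt_Rsqr (Rabs (x - al) + Rabs z)) by auto. apply sqrt_le_1_alt. unfold Rsqr.
  assert (0 <= Rabs (x - al) * Rabs z) by (apply Rmult_le_pos; apply Rabs_pos).
  rewrite <- (pow2_abs (x - al)), <- (pow2_abs z). simpl. nra.
Qed.

Theorem mainTheorem10 (a b c d : nat -> R) :
  a 1%nat + a 2%nat + a 3%nat + a 4%nat <> 0 ->
  0 < alpha_star a b ->
  exists eps0 C : R, 0 < eps0 /\ 0 < C /\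
    forall eps : R, 0 < Rabs eps < eps0 ->
      exists gu gv gw : R -> R,
        isolated_periodic_orbit a b c d eps gu gv gw /\
        (exists t, gu t * gv t = 0) /\
        (exists t, dist3 (gu t) (gv t) (gw t) (alpha_star a b) 0 0 <= C * Rabs eps).
Proof.
  intros Hsa Hal. change (sa a <> 0) in Hsa.
  destruct (stab_lemma a b Hsa Hal) as [de [e2 (hde & hde2 & he2 & HS)]].
  destruct (exist_fixed a b Hsa Hal) as [e1 [C1 (he1 & hC1 & HE)]].
  set (al := alpha_star a b) in *. set (A := Ab a b). set (Cdd := Cd c d).
  assert (hA : 1 <= A) by (destruct (Ab_bounds a b); auto).
  assert (hCd : 1 <= Cdd) by (destruct (Cd_bounds c d); auto).
  set (Mb := 3 * (5 * al / 2) + 1).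
  set (g0 := 1 - exp (- (3 * al))).
  assert (hg0 : 0 < g0) by (unfold g0; assert (exp (- (3*al)) < 1) by (rewrite <- exp_0; apply exp_increasing; lra); lra).
  set (eps0 := Rmin (Rmin e1 e2) (Rmin (de/(2*C1)) (Rmin (/(10*A*al)) (/(2*A))))).
  set (C := C1 + A*(8*al^2+4*al) + Cdd*(6*Mb + 20 + (8*Mb+32)/g0)).
  assert (hMb : 0 <= Mb) by (unfold Mb; lra).
  assert (hC' : 0 <= Cdd*(6*Mb + 20 + (8*Mb+32)/g0)).
  { apply Rmult_le_pos. lra. assert (0 <= (8*Mb+32)/g0) by (apply Rdiv_le_0_compat; lra). lra. }
  exists eps0, C. split.
  { unfold eps0. repeat apply Rmin_pos; auto. apply Rdiv_lt_0_compat; lra.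
    apply Rinv_0_lt_compat. nra. apply Rinv_0_lt_compat. lra. }
  split. { unfold C. assert (0 <= A*(8*al^2+4*al)) by (apply Rmult_le_pos; nra). lra. }
  intros e He.
  assert (He1 : Rabs e < e1) by (eapply Rlt_le_trans; [apply He|]; unfold eps0; eapply Rle_trans; apply Rmin_l).
  assert (He2 : Rabs e < e2) by (eapply Rlt_le_trans; [apply He|]; unfold eps0; eapply Rle_trans; [apply Rmin_l| apply Rmin_r]).
  assert (He3 : Rabs e < de/(2*C1)) by (eapply Rlt_le_trans; [apply He|]; unfold eps0; eapply Rle_trans; [apply Rmin_r| apply Rmin_l]).
  assert (He4 : Rabs e < /(10*A*al)) by (eapply Rlt_le_trans; [apply He|]; unfold eps0; eapply Rle_trans; [apply Rmin_r|];
    eapply Rle_trans; [apply Rmin_r| apply Rmin_l]).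
  assert (He5 : Rabs e < /(2*A)) by (eapply Rlt_le_trans; [apply He|]; unfold eps0; eapply Rle_trans; [apply Rmin_r|];
    eapply Rle_trans; apply Rmin_r).
  destruct (HE e ltac:(split; [apply He| auto])) as [y [z (Ey & Ez & hy & hz & dy & dz)]].
  assert (HC1e : C1 * Rabs e <= de / 2).
  { apply Rmult_lt_compat_l with (r := C1) in He3; auto. replace (C1 * (de / (2*C1))) with (de/2) in He3 by (field; lra). lra. }
  assert (dy' : Rabs (y - al) <= de/2) by lra. assert (dz' : Rabs (z - al) <= de/2) by lra.
  assert (yb := dy'). assert (zb := dz'). apply Rabs_le_between in yb, zb.
  assert (heA : Rabs e * A <= /2).
  { apply Rmult_lt_compat_r with (r := A) in He5. 2: lra. rewrite Rinv_mult in He5.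
    replace (/ 2 * / A * A) with (/2) in He5 by (field; lra). lra. }
  assert (hq : Rabs e * A * (2*y+2*z) <= /2).
  { assert (k : Rabs e * (10*A*al) < 1).
    { apply Rmult_lt_compat_r with (r := 10*A*al) in He4. 2: nra. rewrite Rinv_l in He4 by nra. lra. }
    assert (0 <= Rabs e * A) by (apply Rmult_le_pos; [apply Rabs_pos| lra]).
    assert (Rabs e * A * (2*y+2*z) <= Rabs e * A * (5 * al)) by (apply Rmult_le_compat_l; lra). nra. }
  assert (Hg : orbit_hyp a b e y z) by (repeat split; auto).
  destruct (HS e ltac:(split; [apply He| auto])) as [stab Hst].
  exists (GU a b e y z), (GV y z), (GW a b c d e y z).
  split. { apply (isolation a b c d e y z al de stab Hg hq hde dy' dz' Hst). }
  split.
  { exists 0. unfold GU. rewrite per_in by (unfold Tp; lra). unfold pwU. rewrite pw_A by lra.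
    unfold uA, useg. replace (0 - 0) with 0 by ring. rewrite Ef_0. ring. }
  exists (y + 2*z).
  assert (GUx : GU a b e y z (y + 2*z) = pp b e 4 * Ef (qq a e 4) z).
  { unfold GU. rewrite per_in by (unfold Tp; lra). unfold pwU. rewrite pw_C by lra.
    unfold uC, useg. f_equal. f_equal. ring. }
  assert (GVx : GV y z (y + 2*z) = 0).
  { unfold GV. rewrite per_in by (unfold Tp; lra). unfold pwV. rewrite pw_C by lra. unfold vC. ring. }
  eapply Rle_trans. apply dist3_le. auto. rewrite GUx.
  assert (X1 := x_bound a b e z hz ltac:(fold A; nra) heA). fold A in X1.
  assert (W1 := w_bound a b c d e y z Hg hq). fold A Cdd in W1.
  assert (Xb : Rabs (pp b e 4 * Ef (qq a e 4) z - al) <= Rabs e * (C1 + A * (8 * al^2 + 4*al))).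
  { replace (pp b e 4 * Ef (qq a e 4) z - al) with ((pp b e 4 * Ef (qq a e 4) z - z) + (z - al)) by ring.
    eapply Rle_trans. apply Rabs_triang.
    assert (0 <= Rabs e * A) by (apply Rmult_le_pos; [apply Rabs_pos| lra]).
    assert (Rabs e * A * (2*z^2 + 2*z) <= Rabs e * A * (8*al^2 + 4*al)) by (apply Rmult_le_compat_l; nra). nra. }
  assert (Wb : Rabs (GW a b c d e y z (y + 2 * z)) <= Rabs e * (Cdd*(6*Mb + 20 + (8*Mb+32)/g0))).
  { eapply Rle_trans. apply W1.
    set (M := 3 * (y + z) + 1). set (g := 1 - exp (- (2 * y + 2 * z))).
    assert (hM : M <= Mb) by (unfold M, Mb; lra).
    assert (hg : g0 <= g) by (unfold g, g0; assert (exp (- (2*y+2*z)) <= exp (- (3*al))) by (apply exp_le_mono; lra); lra).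
    assert (hfrac : (8*M+32)/g <= (8*Mb+32)/g0).
    { unfold Rdiv. apply Rmult_le_compat. unfold M; lra. left; apply Rinv_0_lt_compat; lra. lra.
      apply Rinv_le_contravar; lra. }
    assert (0 <= Rabs e * Cdd) by (apply Rmult_le_pos; [apply Rabs_pos| lra]).
    replace (Rabs e * (Cdd * (6 * Mb + 20 + (8 * Mb + 32) / g0))) with (Rabs e * Cdd * (6 * Mb + 20 + (8 * Mb + 32) / g0)) by ring.
    apply Rmult_le_compat_l; auto. lra. }
  unfold C. nra.
Qed.
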